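(* Let $G$ be a disconnected $(n,n-1)$-graph with $10\le n\le 13$ and girth $g(G)\ge 9$. Then $G$ is $4$-placeable.
   Context: All graphs are finite and simple. A $(p,q)$-graph is a graph with $p$ vertices and $q$ edges. The girth $g(G)$ is the length of a shortest cycle of $G$ (such a $G$ necessarily contains a cycle). For a graph $G$ on $n$ vertices and a positive integer $k$, a $k$-placement of $G$ is a $k$-tuple $(\phi_1,\dots,\phi_k)$ of bijections $\phi_i:V(G)\to V(K_n)$ such that the edge sets $\phi_i(E(G))=\{\phi_i(x)\phi_i(y): xy\in E(G)\}$ are pairwise disjoint; $G$ is $k$-placeable if it has a $k$-placement. *)

(* Defs.v *)
From mathcomp Require Import all_boot.
Set Implicit Arguments. Unset Strict Implicit. Unset Printing Implicit Defensive.

Definition simple_graph (T : finType) (e : rel T) : Prop :=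
  symmetric e /\ irreflexive e.

Definition edge_set (T : finType) (e : rel T) : {set {set T}} :=
  [set [set x; y] | x in T, y in T & e x y].

Definition connected_graph (T : finType) (e : rel T) : Prop :=
  forall x y : T, connect e x y.

Definition is_cycle (T : finType) (e : rel T) (s : seq T) : bool :=
  [&& uniq s, 3 <= size s & cycle e s].

Definition girth_ge (T : finType) (e : rel T) (k : nat) : Prop :=
  (exists s, is_cycle e s) /\ (forall s, is_cycle e s -> k <= size s).

Definition image_edges (T : finType) (e : rel T) (n : nat) (f : T -> 'I_n)
  : {set {set 'I_n}} :=
  [set [set f x; f y] | x in T, y in T & e x y].

Definition placeable (T : finType) (e : rel T) (k : nat) : Prop :=
  exists phi : 'I_k -> T -> 'I_#|T|,
    (forall i, bijective (phi i)) /\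
    (forall i j, i != j -> [disjoint image_edges e (phi i) & image_edges e (phi j)]).

(* Main.v *)
Require Import Defs.
From mathcomp Require Import all_boot.
From mathcomp Require Import zify.
Set Implicit Arguments. Unset Strict Implicit. Unset Printing Implicit Defensive.

Fixpoint combs (T : Type) (k : nat) (l : seq T) : seq (seq T) :=
  match l with
  | [::] => if k is 0 then [:: [::]] else [::]
  | x :: l' => if k is k'.+1 then map (cons x) (combs k' l') ++ combs k l' else [:: [::]]
  end.

Lemma combsP (T : eqType) (l s : seq T) : subseq s l -> s \in combs (size s) l.
Proof.
elim: l s => [|x l IH] s.
  by rewrite subseq0 => /eqP ->.
case: s => [|y s] //=.
case: ifP => [/eqP -> Hs | _ Hs]; rewrite mem_cat.
  by rewrite (map_f (cons x) (IH _ Hs)).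
by rewrite (IH (y :: s) Hs) orbT.
Qed.

Definition eqp (u v : nat * nat) : bool := eqn u.1 v.1 && eqn u.2 v.2.
Definition memp (z : nat * nat) (s : seq (nat * nat)) : bool := has (eqp z) s.
Fixpoint uniqp (s : seq (nat * nat)) : bool :=
  if s is x :: s' then ~~ memp x s' && uniqp s' else true.

Lemma eqpE u v : eqp u v = (u == v).
Proof. by case: u v => [a b] [c d]. Qed.
Lemma mempE z s : memp z s = (z \in s).
Proof.
elim: s => [|y s IH] //=; rewrite in_cons -IH eqpE.
by [].
Qed.
Lemma uniqpE s : uniqp s = uniq s.
Proof. by elim: s => [|x s IH] //=; rewrite mempE IH. Qed.

Definition cycE (L : nat) : seq (nat * nat) :=
  [seq (j, j.+1) | j <- iota 0 L.-1] ++ [:: (0, L.-1)].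
Definition NCE (N L : nat) : seq (nat * nat) :=
  [seq ab <- [seq (a, b) | a <- iota 0 N, b <- iota 0 N] |
     (ab.1 < ab.2) && (ab \notin cycE L)].
Definition nrm (ab : nat * nat) : nat * nat :=
  if ab.1 <= ab.2 then ab else (ab.2, ab.1).
Definition pimg (p : seq nat) (ab : nat * nat) := nrm (nth 0 p ab.1, nth 0 p ab.2).
Definition Img (ps : seq (seq nat)) (ab : nat * nat) := map (fun p => pimg p ab) ps.
Definition Aimg L ps := flatten (map (Img ps) (cycE L)).
Definition mktab N L ps : seq (seq (nat * nat) * bool) :=
  let A := Aimg L ps in
  map (fun f => let I := Img ps f in (I, uniqp I && all (fun z => ~~ memp z A) I)) (NCE N L).
Definition state := (seq (seq nat) * seq (seq (nat * nat) * bool) * seq (nat * nat))%type.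
Definition ext (x : nat) (st : state) : bool :=
  let I := nth ([::], false) st.1.2 x in I.2 && all (fun z => ~~ memp z st.2) I.1.
Definition extend x (cs : seq state) : seq state :=
  [seq (st.1, (nth ([::], false) st.1.2 x).1 ++ st.2) | st <- cs & ext x st].
Fixpoint chk (k : nat) (l : seq nat) (cs : seq state) : bool :=
  match l with
  | [::] => (k != 0) || (cs != [::])
  | x :: l' => match k with
               | 0 => cs != [::]
               | k'.+1 => (if k' is 0 then has (ext x) cs else chk k' l' (extend x cs))
                          && chk k l' cs
               end
  end.
Definition validps N (ps : seq (seq nat)) :=
  (size ps == 4) && all (fun p => perm_eq p (iota 0 N)) ps.
Definition ccheck N L cands :=
  all (fun ps => validps N ps && uniqp (Aimg L ps)) cands &&
  chk (N.-1 - L) (iota 0 (size (NCE N L)))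
     (map (fun ps => (ps, mktab N L ps, [::])) cands).

Section Spec.
Variables N L : nat.
Definition inv (st : state) :=
  [/\ st.1.2 = mktab N L st.1.1, uniq (Aimg L st.1.1 ++ st.2) & validps N st.1.1].

Fixpoint accum ps (c : seq nat) acc :=
  if c is x :: c' then accum ps c' (Img ps (nth (0,0) (NCE N L) x) ++ acc) else acc.

Lemma ext_inv x st : inv st -> ext x st ->
  (nth ([::], false) st.1.2 x).1 = Img st.1.1 (nth (0,0) (NCE N L) x) /\
  inv (st.1, (nth ([::], false) st.1.2 x).1 ++ st.2).
Proof.
case: st => [[ps tab] acc] [/= -> Hu Hv].
rewrite /ext /=.
have [Hx|Hx] := ltnP x (size (NCE N L)); last first.
  by rewrite nth_default // size_map.
rewrite (nth_map (0,0)) //= uniqpE => /andP [/andP [HI HA] Hacc].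
split => //; split => //=.
move: Hu; rewrite !cat_uniq has_cat => /and3P [-> H1 ->].
move/negbTE: H1 => H1.
rewrite HI H1 orbF /= andbT.
apply/andP; split.
  apply/hasPn => z Hz /=.
  by move/allP: HA => /(_ z Hz); rewrite mempE.
apply/hasPn => z Hz /=; apply/negP => HzI.
by move/allP: Hacc => /(_ z HzI); rewrite mempE Hz.
Qed.

Lemma chk_spec k l cs : chk k l cs -> (forall st, st \in cs -> inv st) ->
  forall c, c \in combs k l ->
  exists2 st, st \in cs & uniq (Aimg L st.1.1 ++ accum st.1.1 c st.2).
Proof.
elim: l k cs => [|x l IH] k cs /=.
  case: k => [|k] //= Hcs Hinv c; rewrite inE => /eqP ->.
  case: cs Hcs Hinv => [|st cs] // _ /(_ st (mem_head _ _)) [H1 H2 H3].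
  by exists st => //; rewrite mem_head.
case: k => [|k].
  move=> Hcs Hinv c; rewrite inE => /eqP ->.
  case: cs Hcs Hinv => [|st cs] // _ /(_ st (mem_head _ _)) [H1 H2 H3].
  by exists st => //; rewrite mem_head.
move=> /andP [H1 H2] Hinv c; rewrite mem_cat => /orP [|Hc]; last exact: IH _ _ H2 Hinv c Hc.
case/mapP => c' Hc' ->.
destruct k as [|k].
  have -> : c' = [::] by move: Hc'; case: (l) => [|? ?]; rewrite inE => /eqP.
  case/hasP: H1 => st Hst Hext.
  have [HI [_ Hi _]] := ext_inv (Hinv _ Hst) Hext.
  by exists st => //=; move: Hi; rewrite /= HI.
have Hinv' : forall st, st \in extend x cs -> inv st.
  move=> st' /mapP [st]; rewrite mem_filter => /andP [Hext Hst] ->.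
  by case: (ext_inv (Hinv _ Hst) Hext).
have [st' Hst' Hu'] := IH _ _ H1 Hinv' c' Hc'.
move: Hst' Hu' => /mapP [st]; rewrite mem_filter => /andP [Hext Hst] -> /= Hu'.
have [HI _] := ext_inv (Hinv _ Hst) Hext.
by exists st => //; move: Hu'; rewrite HI.
Qed.
End Spec.

Lemma accumE N L ps c acc :
  accum N L ps c acc = flatten (map (Img ps) (rev (map (nth (0,0) (NCE N L)) c))) ++ acc.
Proof.
elim: c acc => [|x c IH] acc //=.
by rewrite IH rev_cons map_rcons flatten_rcons catA.
Qed.

Lemma ccheck_spec N L cands : ccheck N L cands ->
  forall c, c \in combs (N.-1 - L) (iota 0 (size (NCE N L))) ->
  exists2 ps, validps N ps &
    uniq (flatten (map (Img ps) (cycE L ++ rev (map (nth (0,0) (NCE N L)) c)))).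
Proof.
case/andP => /allP Hv Hc c Hcomb.
have Hinv : forall st, st \in map (fun ps => (ps, mktab N L ps, [::])) cands -> inv N L st.
  move=> st /mapP [ps Hps ->]; case/andP: (Hv _ Hps) => H1 H2.
  by split => //=; rewrite cats0 -uniqpE.
have [st /mapP [ps Hps ->] /=] := chk_spec Hc Hinv Hcomb.
rewrite accumE cats0 => Hu.
by exists ps; [case/andP: (Hv _ Hps) | rewrite map_cat flatten_cat].
Qed.

Lemma sem_spec (ps : seq (seq nat)) (E : seq (nat * nat)) :
  uniq (flatten (map (Img ps) E)) ->
  forall x y, x \in E -> y \in E -> forall i j, i < size ps -> j < size ps -> i != j ->
  pimg (nth [::] ps i) x != pimg (nth [::] ps j) y.
Proof.
have Hn : forall z i, i < size ps -> nth (0,0) (Img ps z) i = pimg (nth [::] ps i) z.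
  by move=> z i Hi; rewrite /Img (nth_map [::]).
elim: E => [|z E IH] //= Hu x y Hx Hy i j Hi Hj Hij.
move: Hu; rewrite cat_uniq => /and3P [Hz Hd Hr].
have HzE : forall u k, u \in E -> k < size ps -> pimg (nth [::] ps k) u \in flatten (map (Img ps) E).
  move=> u k Hu Hk; apply/flattenP; exists (Img ps u); first exact: map_f.
  by rewrite -Hn // mem_nth // size_map.
have Hzz : forall k, k < size ps -> pimg (nth [::] ps k) z \in Img ps z.
  by move=> k Hk; rewrite -Hn // mem_nth // size_map.
move: Hx Hy; rewrite !in_cons => /orP [/eqP -> | Hx] /orP [/eqP -> | Hy].
- by rewrite -!Hn // nth_uniq ?size_map.
- apply/eqP => Heq; move/hasPn: Hd => /(_ _ (HzE _ _ Hy Hj)) /=.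
  by rewrite -Heq Hzz.
- apply/eqP => Heq; move/hasPn: Hd => /(_ _ (HzE _ _ Hx Hi)) /=.
  by rewrite Heq Hzz.
- exact: IH.
Qed.


Lemma set2_eqE (T : finType) (u v u' v' : T) :
  [set u; v] = [set u'; v'] -> (u = u' /\ v = v') \/ (u = v' /\ v = u').
Proof.
move=> H.
have Hm : forall w, (w \in [set u; v]) = (w \in [set u'; v']) by move=> w; rewrite H.
have := Hm u; rewrite set21 => /esym /set2P [Hu|Hu];
have := Hm v; rewrite set22 => /esym /set2P [Hv|Hv]; subst.
- have := Hm v'; rewrite set22 => /set2P [Hv|Hv]; subst; by left.
- by left.
- by right.
- have := Hm u'; rewrite set21 => /set2P [Hv|Hv]; subst; by left.
Qed.

Lemma nrmC a b : nrm (a, b) = nrm (b, a).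
Proof.
by rewrite /nrm /=; case: (ltngtP a b) => // ->.
Qed.

Lemma nrm_set2 n (u v u' v' : 'I_n) :
  [set u; v] = [set u'; v'] -> nrm (val u, val v) = nrm (val u', val v').
Proof. by case/set2_eqE => [[-> ->]|[-> ->]] //; rewrite nrmC. Qed.

Lemma pimg_nrm p ab : pimg p (nrm ab) = nrm (nth 0 p ab.1, nth 0 p ab.2).
Proof. by case: ab => a b; rewrite /nrm /=; case: ifP => //= _; rewrite /pimg nrmC. Qed.

Lemma place_from (T : finType) (e : rel T) (h : T -> nat) (ps : seq (seq nat))
  (E : seq (nat * nat)) :
  injective h -> (forall x, h x < #|T|) -> validps #|T| ps ->
  uniq (flatten (map (Img ps) E)) ->
  (forall x y, e x y -> nrm (h x, h y) \in E) ->
  placeable e 4.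
Proof.
move=> Hhi Hh /andP [/eqP Hs4 /allP Hall] Hu HE.
have Hp : forall i : 'I_4, perm_eq (nth [::] ps i) (iota 0 #|T|).
  by move=> i; apply: Hall; rewrite mem_nth // Hs4.
have Hsz : forall i : 'I_4, size (nth [::] ps i) = #|T|.
  by move=> i; rewrite (perm_size (Hp i)) size_iota.
have Hlt : forall (i : 'I_4) x, nth 0 (nth [::] ps i) (h x) < #|T|.
  move=> i x; have : nth 0 (nth [::] ps i) (h x) \in iota 0 #|T|.
    by rewrite -(perm_mem (Hp i)) mem_nth // Hsz.
  by rewrite mem_iota.
exists (fun i x => Ordinal (Hlt i x)); split.
  move=> i; apply: inj_card_bij; last by rewrite card_ord.
  move=> x y /(congr1 val) /= /eqP; rewrite nth_uniq ?Hsz //; last first.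
    by rewrite (perm_uniq (Hp i)) iota_uniq.
  by move/eqP/Hhi.
move=> i j Hij; rewrite -setI_eq0; apply/eqP/setP => S; rewrite !inE.
apply/negP => /andP [/imset2P [x y _ Hy ->] /imset2P [x' y' _ Hy' /nrm_set2 /= Heq]].
move: Hy Hy'; rewrite !inE => Hy Hy'.
have := sem_spec Hu (HE _ _ Hy) (HE _ _ Hy') (i := i) (j := j).
by rewrite !pimg_nrm /= Heq Hs4 !ltn_ord eqxx => /(_ isT isT Hij).
Qed.

Definition cands_10_9 : seq (seq (seq nat)) := [::
 [::[::0;1;2;3;4;5;6;7;8;9];[::8;9;0;5;2;4;6;3;1;7];[::9;4;0;2;6;8;5;1;7;3];[::7;0;3;5;9;1;4;8;2;6]]].

Definition cands_11_9 : seq (seq (seq nat)) := [::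
 [::[::0;1;2;3;4;5;6;7;8;9;10];[::5;8;2;4;0;3;7;10;1;6;9];[::0;10;4;8;3;6;9;5;7;1;2];[::2;0;9;8;1;6;10;3;5;7;4]];
 [::[::0;1;2;3;4;5;6;7;8;9;10];[::1;5;10;7;2;6;0;4;8;9;3];[::10;0;5;7;1;6;9;2;4;8;3];[::10;2;0;7;4;1;3;8;9;6;5]];
 [::[::0;1;2;3;4;5;6;7;8;9;10];[::5;3;1;7;9;2;6;10;8;0;4];[::3;7;0;10;5;1;9;4;6;8;2];[::7;10;4;8;3;0;9;5;2;6;1]];
 [::[::0;1;2;3;4;5;6;7;8;9;10];[::10;3;9;8;4;7;1;6;0;5;2];[::9;4;6;10;2;5;3;7;0;1;8];[::5;10;7;9;1;4;2;6;8;0;3]];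
 [::[::0;1;2;3;4;5;6;7;8;9;10];[::7;2;9;1;3;8;10;5;0;6;4];[::2;8;1;7;10;9;4;0;6;3;5];[::5;7;9;0;3;6;4;10;1;2;8]];
 [::[::0;1;2;3;4;5;6;7;8;9;10];[::8;6;1;5;10;0;2;7;4;3;9];[::10;4;0;9;2;8;5;3;1;6;7];[::8;3;10;6;0;5;2;4;1;7;9]];
 [::[::0;1;2;3;4;5;6;7;8;9;10];[::5;2;9;4;0;10;8;3;7;1;6];[::8;1;3;9;0;5;10;4;6;2;7];[::9;5;8;2;10;7;4;1;6;0;3]];
 [::[::0;1;2;3;4;5;6;7;8;9;10];[::4;1;5;9;3;8;10;6;2;0;7];[::9;10;3;5;2;0;7;4;6;1;8];[::7;2;9;4;0;10;1;8;5;6;3]];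
 [::[::0;1;2;3;4;5;6;7;8;9;10];[::6;10;2;5;8;1;9;4;0;7;3];[::2;4;7;3;10;1;6;8;9;0;5];[::4;10;5;0;3;9;7;2;6;1;8]];
 [::[::0;1;2;3;4;5;6;7;8;9;10];[::6;0;5;8;4;9;1;10;3;7;2];[::7;4;2;6;8;10;9;0;3;1;5];[::8;9;3;5;7;1;4;0;2;10;6]];
 [::[::0;1;2;3;4;5;6;7;8;9;10];[::0;6;9;3;7;4;2;5;10;8;1];[::0;9;4;10;2;7;1;3;5;8;6];[::1;6;2;0;3;10;8;5;9;4;7]];
 [::[::0;1;2;3;4;5;6;7;8;9;10];[::1;10;2;4;9;3;0;5;7;6;8];[::3;6;9;7;0;4;1;8;10;2;5];[::1;6;4;8;2;9;0;10;5;7;3]];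
 [::[::0;1;2;3;4;5;6;7;8;9;10];[::8;10;4;1;7;9;2;0;5;6;3];[::8;2;6;0;10;1;5;9;3;4;7];[::7;0;4;8;9;1;3;10;2;6;5]];
 [::[::0;1;2;3;4;5;6;7;8;9;10];[::0;5;7;9;10;2;6;1;4;8;3];[::10;0;2;5;8;4;9;3;1;7;6];[::7;0;9;1;8;6;3;10;4;2;5]]].

Definition cands_11_10 : seq (seq (seq nat)) := [::
 [::[::0;1;2;3;4;5;6;7;8;9;10];[::6;10;5;2;8;4;7;1;3;9;0];[::7;0;8;10;4;2;6;1;5;9;3];[::9;10;1;8;5;3;6;4;0;2;7]]].

Definition cands_12_9 : seq (seq (seq nat)) := [::
 [::[::0;1;2;3;4;5;6;7;8;9;10;11];[::8;6;4;7;1;10;11;5;3;0;2;9];[::0;2;9;10;7;3;11;1;5;6;4;8];[::8;9;6;3;10;0;11;7;2;5;1;4]];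
 [::[::0;1;2;3;4;5;6;7;8;9;10;11];[::1;4;9;8;11;3;5;2;6;0;7;10];[::9;10;8;6;11;0;7;3;1;5;2;4];[::11;1;10;4;6;3;9;0;2;7;5;8]];
 [::[::0;1;2;3;4;5;6;7;8;9;10;11];[::10;11;6;0;9;2;8;5;3;7;4;1];[::2;7;4;1;11;8;9;10;0;5;3;6];[::5;11;3;1;8;6;10;4;0;9;2;7]];
 [::[::0;1;2;3;4;5;6;7;8;9;10;11];[::11;2;0;5;3;7;10;9;4;6;1;8];[::5;9;6;2;10;0;4;7;11;1;3;8];[::1;5;2;7;0;9;3;6;10;4;11;8]];
 [::[::0;1;2;3;4;5;6;7;8;9;10;11];[::0;11;2;10;3;1;8;9;6;4;7;5];[::3;8;2;7;1;9;10;5;11;0;6;4];[::4;8;6;10;11;7;5;9;0;3;2;1]];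
 [::[::0;1;2;3;4;5;6;7;8;9;10;11];[::8;5;0;2;7;1;3;6;10;11;4;9];[::7;3;8;11;6;2;5;9;10;1;4;0];[::5;3;0;6;4;8;2;10;11;7;9;1]];
 [::[::0;1;2;3;4;5;6;7;8;9;10;11];[::9;2;8;3;11;0;5;7;1;10;4;6];[::7;4;1;8;6;3;0;2;10;11;9;5];[::2;7;0;10;8;5;3;1;11;4;9;6]];
 [::[::0;1;2;3;4;5;6;7;8;9;10;11];[::2;11;7;5;8;1;6;10;9;0;4;3];[::2;4;10;11;0;3;7;9;6;8;5;1];[::1;10;7;0;6;4;8;11;9;3;2;5]];
 [::[::0;1;2;3;4;5;6;7;8;9;10;11];[::11;3;8;6;2;7;1;10;4;9;5;0];[::1;4;6;10;5;2;9;0;11;8;3;7];[::11;2;10;7;3;0;5;8;9;4;6;1]];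
 [::[::0;1;2;3;4;5;6;7;8;9;10;11];[::1;6;8;10;7;9;2;0;11;5;3;4];[::10;3;8;9;11;2;7;5;1;4;0;6];[::10;0;9;5;2;4;1;3;6;11;7;8]];
 [::[::0;1;2;3;4;5;6;7;8;9;10;11];[::7;3;8;11;2;0;5;10;1;6;4;9];[::3;5;1;6;10;0;4;8;9;11;2;7];[::2;10;9;0;7;5;8;6;4;11;3;1]];
 [::[::0;1;2;3;4;5;6;7;8;9;10;11];[::0;5;3;6;8;1;9;10;2;4;11;7];[::1;6;10;0;9;7;5;11;3;2;4;8];[::6;4;2;5;10;3;0;7;11;8;1;9]];
 [::[::0;1;2;3;4;5;6;7;8;9;10;11];[::3;1;6;2;10;4;8;5;9;0;7;11];[::7;2;11;8;10;5;0;9;4;3;6;1];[::6;11;1;8;9;7;3;0;4;5;2;10]];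
 [::[::0;1;2;3;4;5;6;7;8;9;10;11];[::9;1;10;2;7;5;11;6;0;4;3;8];[::0;7;11;8;10;4;2;9;3;6;5;1];[::5;3;1;4;8;6;9;11;0;2;10;7]];
 [::[::0;1;2;3;4;5;6;7;8;9;10;11];[::6;1;10;7;2;5;3;11;0;8;9;4];[::5;7;4;2;8;6;3;9;10;0;11;1];[::9;5;0;7;1;3;10;6;11;2;8;4]];
 [::[::0;1;2;3;4;5;6;7;8;9;10;11];[::11;6;10;0;9;3;8;2;4;7;5;1];[::7;4;9;6;2;11;1;5;10;3;0;8];[::9;1;6;3;7;0;11;10;8;2;5;4]];
 [::[::0;1;2;3;4;5;6;7;8;9;10;11];[::5;9;3;10;8;11;2;6;0;7;1;4];[::9;11;3;8;1;4;10;5;2;7;0;6];[::1;3;6;4;11;7;9;0;10;8;2;5]];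
 [::[::0;1;2;3;4;5;6;7;8;9;10;11];[::9;3;7;1;5;10;6;4;0;11;2;8];[::8;3;1;11;2;7;10;9;5;4;0;6];[::9;6;0;10;4;8;2;5;11;7;3;1]];
 [::[::0;1;2;3;4;5;6;7;8;9;10;11];[::5;3;9;2;7;11;10;6;0;4;1;8];[::11;8;10;1;6;4;7;9;5;3;0;2];[::9;10;3;0;7;5;2;4;11;6;8;1]];
 [::[::0;1;2;3;4;5;6;7;8;9;10;11];[::4;2;0;6;8;1;10;3;9;7;11;5];[::7;5;9;2;10;4;1;6;11;8;3;0];[::4;8;10;5;3;7;1;11;0;9;2;6]];
 [::[::0;1;2;3;4;5;6;7;8;9;10;11];[::7;9;8;6;10;3;5;11;2;1;0;4];[::8;3;6;11;0;9;2;5;1;4;10;7];[::11;3;9;6;1;7;10;4;8;5;2;0]];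
 [::[::0;1;2;3;4;5;6;7;8;9;10;11];[::8;5;3;11;2;10;7;1;4;6;9;0];[::10;4;0;11;5;1;9;8;3;2;6;7];[::4;6;8;2;5;9;3;7;11;10;1;0]];
 [::[::0;1;2;3;4;5;6;7;8;9;10;11];[::10;0;4;1;7;11;6;9;2;8;5;3];[::2;4;7;10;1;6;0;3;8;5;9;11];[::6;10;9;4;11;5;0;7;3;2;1;8]];
 [::[::0;1;2;3;4;5;6;7;8;9;10;11];[::11;6;3;8;10;9;4;2;7;1;0;5];[::11;5;8;9;0;7;1;6;4;2;3;10];[::11;9;1;8;6;2;5;10;0;4;7;3]];
 [::[::0;1;2;3;4;5;6;7;8;9;10;11];[::7;10;9;8;2;0;6;3;1;11;5;4];[::4;8;5;7;9;1;10;2;11;0;6;3];[::11;7;4;6;10;3;0;9;5;1;8;2]];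
 [::[::0;1;2;3;4;5;6;7;8;9;10;11];[::2;11;4;1;10;5;8;3;9;7;6;0];[::3;6;11;0;4;7;5;9;1;8;2;10];[::10;9;0;3;11;7;2;4;6;8;5;1]];
 [::[::0;1;2;3;4;5;6;7;8;9;10;11];[::2;4;11;1;5;9;7;3;0;10;6;8];[::3;9;2;8;11;10;5;7;1;6;4;0];[::2;11;3;10;4;8;5;0;7;6;9;1]];
 [::[::0;1;2;3;4;5;6;7;8;9;10;11];[::2;7;10;0;11;1;6;9;8;3;4;5];[::10;5;11;2;4;6;8;3;9;1;0;7];[::1;7;5;3;6;0;9;4;8;2;11;10]];
 [::[::0;1;2;3;4;5;6;7;8;9;10;11];[::2;11;6;1;10;0;3;5;9;8;7;4];[::8;3;1;4;0;6;9;10;5;11;7;2];[::7;2;0;9;3;6;8;4;11;10;1;5]];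
 [::[::0;1;2;3;4;5;6;7;8;9;10;11];[::4;7;5;1;11;9;2;8;6;3;10;0];[::11;7;9;6;10;2;5;0;3;8;1;4];[::5;11;8;10;0;4;1;3;9;6;2;7]];
 [::[::0;1;2;3;4;5;6;7;8;9;10;11];[::1;8;11;10;7;5;9;4;6;3;0;2];[::8;4;10;6;9;0;2;5;3;7;11;1];[::4;7;9;8;2;11;1;3;0;10;5;6]];
 [::[::0;1;2;3;4;5;6;7;8;9;10;11];[::8;2;0;9;4;10;5;7;1;3;6;11];[::11;1;6;4;0;10;9;2;7;8;5;3];[::6;0;3;1;4;11;9;7;10;2;5;8]];
 [::[::0;1;2;3;4;5;6;7;8;9;10;11];[::10;0;11;2;6;9;3;1;8;5;7;4];[::10;2;5;7;9;11;6;0;3;4;8;1];[::1;10;7;0;4;9;8;11;5;6;3;2]];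
 [::[::0;1;2;3;4;5;6;7;8;9;10;11];[::5;10;1;11;8;3;9;7;2;4;0;6];[::6;10;0;3;1;7;4;11;2;8;5;9];[::9;0;5;11;3;6;4;1;8;2;10;7]];
 [::[::0;1;2;3;4;5;6;7;8;9;10;11];[::9;6;10;3;7;1;8;4;11;0;5;2];[::9;5;8;6;4;1;10;0;3;2;11;7];[::6;1;3;5;7;10;9;2;11;4;8;0]];
 [::[::0;1;2;3;4;5;6;7;8;9;10;11];[::5;8;1;7;10;9;6;3;0;2;11;4];[::8;2;4;11;5;9;0;7;3;10;1;6];[::4;9;2;11;8;6;1;5;10;3;0;7]];
 [::[::0;1;2;3;4;5;6;7;8;9;10;11];[::9;0;11;4;10;1;5;2;8;6;7;3];[::8;11;6;4;1;7;10;5;3;0;9;2];[::6;0;10;2;9;3;7;11;1;5;4;8]];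
 [::[::0;1;2;3;4;5;6;7;8;9;10;11];[::0;5;9;7;2;8;3;10;11;4;6;1];[::3;1;10;2;9;11;4;8;6;0;5;7];[::10;6;11;3;7;5;2;4;9;0;8;1]];
 [::[::0;1;2;3;4;5;6;7;8;9;10;11];[::1;5;8;6;11;0;4;9;3;10;7;2];[::6;9;0;7;3;5;11;8;10;4;1;2];[::7;11;10;5;0;3;6;1;4;8;9;2]];
 [::[::0;1;2;3;4;5;6;7;8;9;10;11];[::1;9;4;7;10;2;0;5;11;6;8;3];[::1;7;0;4;6;2;9;8;3;10;5;11];[::3;9;5;8;6;11;2;4;10;7;0;1]];
 [::[::0;1;2;3;4;5;6;7;8;9;10;11];[::3;10;2;5;9;7;4;1;11;6;0;8];[::7;2;0;3;6;11;9;10;5;8;1;4];[::0;5;3;7;1;10;8;4;11;6;9;2]];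
 [::[::0;1;2;3;4;5;6;7;8;9;10;11];[::3;10;8;1;6;4;7;9;11;2;0;5];[::0;11;10;2;5;8;9;3;7;1;6;4];[::11;7;2;8;4;10;6;9;5;0;1;3]];
 [::[::0;1;2;3;4;5;6;7;8;9;10;11];[::3;1;9;10;8;6;2;4;7;11;0;5];[::3;6;0;7;1;11;9;2;10;4;8;5];[::4;9;7;10;0;5;11;3;8;1;6;2]];
 [::[::0;1;2;3;4;5;6;7;8;9;10;11];[::9;6;0;5;10;2;8;11;3;7;1;4];[::6;11;1;10;3;5;7;0;2;9;4;8];[::1;6;10;0;9;7;11;2;4;8;3;5]];
 [::[::0;1;2;3;4;5;6;7;8;9;10;11];[::4;8;1;5;7;2;0;3;10;11;6;9];[::3;7;9;4;1;10;6;8;5;11;0;2];[::10;7;11;5;2;6;9;3;8;0;4;1]];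
 [::[::0;1;2;3;4;5;6;7;8;9;10;11];[::8;3;6;0;2;11;10;1;9;5;4;7];[::6;11;9;0;7;4;1;5;2;8;3;10];[::7;5;0;10;6;4;9;3;11;2;8;1]];
 [::[::0;1;2;3;4;5;6;7;8;9;10;11];[::3;8;2;10;1;6;4;0;5;7;11;9];[::6;10;7;11;1;5;2;4;8;9;3;0];[::0;11;8;9;10;5;7;2;6;3;4;1]];
 [::[::0;1;2;3;4;5;6;7;8;9;10;11];[::11;9;10;1;4;8;2;0;3;6;5;7];[::6;11;5;8;10;2;4;7;1;0;9;3];[::5;9;2;6;3;7;10;11;0;1;4;8]];
 [::[::0;1;2;3;4;5;6;7;8;9;10;11];[::6;0;9;1;5;3;10;4;8;11;7;2];[::10;6;11;0;4;1;7;2;8;3;9;5];[::2;6;9;4;11;5;7;3;0;10;8;1]];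
 [::[::0;1;2;3;4;5;6;7;8;9;10;11];[::0;5;2;8;9;1;4;10;3;7;11;6];[::4;8;10;6;3;9;11;7;0;5;1;2];[::2;6;0;9;5;1;8;11;4;10;7;3]];
 [::[::0;1;2;3;4;5;6;7;8;9;10;11];[::0;5;1;7;9;10;8;3;6;2;4;11];[::3;10;4;1;11;2;8;5;9;0;7;6];[::9;6;10;2;7;3;11;0;4;8;1;5]];
 [::[::0;1;2;3;4;5;6;7;8;9;10;11];[::7;4;8;2;6;11;0;9;10;1;5;3];[::11;9;5;8;3;1;7;0;4;2;10;6];[::2;7;3;0;6;9;4;1;10;5;11;8]];
 [::[::0;1;2;3;4;5;6;7;8;9;10;11];[::11;6;8;1;5;2;10;3;7;9;0;4];[::0;11;10;7;1;4;8;5;3;6;9;2];[::9;0;7;5;11;1;10;4;6;8;3;2]];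
 [::[::0;1;2;3;4;5;6;7;8;9;10;11];[::10;6;4;1;9;0;2;5;3;11;7;8];[::9;8;4;0;6;3;1;7;2;10;11;5];[::11;3;0;5;1;6;2;4;9;8;10;7]];
 [::[::0;1;2;3;4;5;6;7;8;9;10;11];[::11;7;1;6;0;2;4;10;9;8;3;5];[::9;6;8;4;11;10;2;5;0;3;1;7];[::7;10;5;9;3;1;8;11;0;6;4;2]];
 [::[::0;1;2;3;4;5;6;7;8;9;10;11];[::0;6;3;9;11;4;7;10;5;1;8;2];[::0;3;1;9;2;8;6;11;7;10;4;5];[::1;7;3;11;0;2;4;6;10;8;5;9]];
 [::[::0;1;2;3;4;5;6;7;8;9;10;11];[::7;4;0;10;2;5;9;6;1;8;11;3];[::0;5;7;3;10;4;9;1;11;6;8;2];[::4;6;8;2;0;3;11;10;1;9;5;7]];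
 [::[::0;1;2;3;4;5;6;7;8;9;10;11];[::11;1;6;8;2;5;7;10;4;3;0;9];[::10;6;9;0;3;5;8;4;2;11;7;1];[::1;7;9;2;11;10;3;6;4;0;8;5]];
 [::[::0;1;2;3;4;5;6;7;8;9;10;11];[::1;7;2;11;10;3;0;5;9;6;4;8];[::10;5;1;3;6;0;11;8;2;9;7;4];[::7;0;9;8;1;6;10;4;11;5;3;2]];
 [::[::0;1;2;3;4;5;6;7;8;9;10;11];[::9;6;10;8;11;3;5;0;7;4;2;1];[::2;7;3;6;1;5;9;10;0;11;4;8];[::1;9;11;10;2;4;0;6;8;3;5;7]];
 [::[::0;1;2;3;4;5;6;7;8;9;10;11];[::10;0;5;8;2;9;3;1;6;11;4;7];[::5;10;9;6;0;7;4;11;3;8;2;1];[::10;11;2;0;3;6;8;9;4;5;7;1]];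
 [::[::0;1;2;3;4;5;6;7;8;9;10;11];[::9;5;2;11;0;3;7;10;8;1;6;4];[::0;2;4;9;6;11;7;1;10;5;3;8];[::11;1;8;6;3;10;5;0;4;2;9;7]];
 [::[::0;1;2;3;4;5;6;7;8;9;10;11];[::6;4;10;7;2;11;9;3;0;5;8;1];[::9;6;3;7;4;8;10;5;1;2;0;11];[::4;0;11;8;6;2;9;10;1;5;7;3]];
 [::[::0;1;2;3;4;5;6;7;8;9;10;11];[::4;1;6;11;0;7;10;3;8;5;2;9];[::6;3;7;4;10;11;2;5;9;1;8;0];[::5;7;11;4;9;3;1;8;10;2;0;6]];
 [::[::0;1;2;3;4;5;6;7;8;9;10;11];[::2;0;7;10;3;6;1;9;8;5;4;11];[::2;4;7;11;8;10;9;0;5;3;1;6];[::4;10;6;11;5;3;7;2;9;1;0;8]];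
 [::[::0;1;2;3;4;5;6;7;8;9;10;11];[::10;1;8;6;4;0;9;11;7;2;5;3];[::7;0;5;3;10;4;1;6;9;2;11;8];[::11;0;10;2;8;5;1;9;3;7;4;6]];
 [::[::0;1;2;3;4;5;6;7;8;9;10;11];[::10;0;6;8;1;9;7;5;11;4;3;2];[::6;3;8;11;0;4;2;5;1;10;7;9];[::10;3;11;1;4;8;9;0;7;2;5;6]];
 [::[::0;1;2;3;4;5;6;7;8;9;10;11];[::4;11;10;7;5;8;9;0;2;3;6;1];[::9;5;3;8;2;6;0;4;7;1;11;10];[::10;9;3;7;2;5;1;8;4;0;6;11]];
 [::[::0;1;2;3;4;5;6;7;8;9;10;11];[::4;0;3;11;1;8;5;7;10;6;2;9];[::3;6;9;0;5;1;7;4;8;10;2;11];[::0;10;8;11;6;1;9;3;7;4;2;5]];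
 [::[::0;1;2;3;4;5;6;7;8;9;10;11];[::10;8;11;9;0;7;1;5;3;2;4;6];[::11;2;4;9;1;8;5;7;10;6;3;0];[::11;0;6;3;7;9;10;1;4;8;5;2]];
 [::[::0;1;2;3;4;5;6;7;8;9;10;11];[::6;2;9;7;11;10;1;5;0;8;4;3];[::6;3;1;7;2;11;0;9;10;8;5;4];[::7;10;2;5;8;9;1;4;0;6;11;3]];
 [::[::0;1;2;3;4;5;6;7;8;9;10;11];[::1;6;10;5;2;8;4;11;3;0;9;7];[::7;0;2;4;6;9;3;5;11;8;1;10];[::0;3;6;8;10;4;7;1;9;5;11;2]];
 [::[::0;1;2;3;4;5;6;7;8;9;10;11];[::5;10;7;2;4;8;1;3;11;6;9;0];[::11;1;6;4;0;9;10;3;8;5;7;2];[::2;0;6;9;3;7;4;1;10;11;5;8]];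
 [::[::0;1;2;3;4;5;6;7;8;9;10;11];[::9;8;2;6;0;7;3;1;11;10;5;4];[::4;0;5;7;9;1;6;10;2;11;8;3];[::3;9;2;11;7;1;4;10;5;8;0;6]];
 [::[::0;1;2;3;4;5;6;7;8;9;10;11];[::11;8;6;3;10;2;9;5;7;1;4;0];[::4;11;0;7;9;3;8;5;10;1;6;2];[::2;4;7;1;6;10;0;5;11;9;8;3]];
 [::[::0;1;2;3;4;5;6;7;8;9;10;11];[::5;7;1;8;6;0;11;2;10;3;9;4];[::11;10;8;5;0;4;2;7;9;1;6;3];[::4;6;2;8;3;5;1;10;9;0;7;11]];
 [::[::0;1;2;3;4;5;6;7;8;9;10;11];[::1;8;11;10;0;7;2;9;6;3;4;5];[::8;2;6;11;7;9;3;1;4;10;5;0];[::10;8;3;0;11;4;2;5;1;7;9;6]];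
 [::[::0;1;2;3;4;5;6;7;8;9;10;11];[::11;2;5;8;3;10;4;1;7;9;0;6];[::9;1;6;11;3;7;10;0;4;5;8;2];[::9;5;3;0;11;8;6;10;2;1;7;4]];
 [::[::0;1;2;3;4;5;6;7;8;9;10;11];[::0;10;7;2;6;1;4;9;11;3;5;8];[::11;10;4;7;1;5;0;3;8;2;6;9];[::0;6;9;7;3;5;8;2;4;11;1;10]];
 [::[::0;1;2;3;4;5;6;7;8;9;10;11];[::8;10;6;1;11;2;4;7;5;3;9;0];[::10;9;8;2;6;0;7;3;1;11;4;5];[::11;4;9;5;0;10;3;8;6;1;2;7]];
 [::[::0;1;2;3;4;5;6;7;8;9;10;11];[::5;11;3;0;4;9;6;10;2;1;8;7];[::4;2;0;5;8;3;9;11;7;6;1;10];[::8;1;7;5;3;6;4;10;11;9;0;2]];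
 [::[::0;1;2;3;4;5;6;7;8;9;10;11];[::1;9;0;7;11;8;6;2;10;5;4;3];[::9;6;1;11;5;7;2;0;4;3;8;10];[::9;8;3;5;0;11;2;4;10;6;7;1]];
 [::[::0;1;2;3;4;5;6;7;8;9;10;11];[::10;4;6;1;11;7;5;8;9;2;3;0];[::11;4;8;6;2;9;7;10;0;1;5;3];[::3;1;10;11;5;2;7;0;9;6;4;8]];
 [::[::0;1;2;3;4;5;6;7;8;9;10;11];[::1;10;11;6;2;4;7;5;9;0;8;3];[::9;8;1;3;5;10;4;11;0;2;7;6];[::9;6;1;11;3;0;7;2;10;4;8;5]];
 [::[::0;1;2;3;4;5;6;7;8;9;10;11];[::5;10;1;4;7;9;6;0;11;2;8;3];[::11;2;7;10;9;0;4;6;3;5;1;8];[::6;10;3;1;5;9;4;2;8;11;0;7]];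
 [::[::0;1;2;3;4;5;6;7;8;9;10;11];[::5;2;11;3;10;4;0;7;9;6;8;1];[::1;9;6;11;0;10;8;5;3;2;4;7];[::2;9;3;8;4;11;10;1;7;6;0;5]];
 [::[::0;1;2;3;4;5;6;7;8;9;10;11];[::9;5;1;3;8;6;4;10;0;7;11;2];[::11;3;10;2;8;4;9;6;1;5;0;7];[::1;10;6;2;5;0;3;9;8;11;7;4]];
 [::[::0;1;2;3;4;5;6;7;8;9;10;11];[::10;7;4;9;1;6;2;8;11;5;3;0];[::9;11;5;0;3;6;4;2;10;7;1;8];[::11;6;0;10;3;8;5;1;7;2;9;4]];
 [::[::0;1;2;3;4;5;6;7;8;9;10;11];[::7;9;11;10;4;2;8;1;3;5;6;0];[::4;9;1;7;2;10;3;0;11;8;5;6];[::5;1;11;2;6;4;0;9;10;7;8;3]];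
 [::[::0;1;2;3;4;5;6;7;8;9;10;11];[::9;1;10;0;7;2;11;6;4;5;3;8];[::2;5;11;9;8;10;3;0;6;7;1;4];[::0;9;2;10;5;7;4;8;11;6;1;3]];
 [::[::0;1;2;3;4;5;6;7;8;9;10;11];[::11;0;3;9;10;4;6;8;5;7;1;2];[::10;1;9;4;8;2;7;11;3;0;6;5];[::6;11;1;5;2;0;9;7;10;3;8;4]];
 [::[::0;1;2;3;4;5;6;7;8;9;10;11];[::9;7;5;3;6;2;8;11;10;1;4;0];[::7;10;5;1;6;11;9;4;0;8;3;2];[::2;5;8;9;1;4;7;3;10;0;11;6]];
 [::[::0;1;2;3;4;5;6;7;8;9;10;11];[::6;4;8;11;10;1;3;5;9;2;0;7];[::10;9;7;2;0;6;8;1;4;3;11;5];[::3;0;7;1;6;11;5;8;9;10;4;2]];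
 [::[::0;1;2;3;4;5;6;7;8;9;10;11];[::0;9;4;1;3;11;8;6;2;10;7;5];[::1;11;2;4;7;3;10;9;6;0;5;8];[::2;8;3;0;4;11;7;9;5;6;1;10]];
 [::[::0;1;2;3;4;5;6;7;8;9;10;11];[::4;8;5;10;2;0;9;3;11;6;1;7];[::6;3;5;9;7;1;11;8;2;0;10;4];[::11;5;0;4;7;10;9;1;6;3;2;8]];
 [::[::0;1;2;3;4;5;6;7;8;9;10;11];[::3;8;5;0;4;11;10;2;6;7;1;9];[::10;1;3;5;2;7;11;6;4;8;0;9];[::1;11;5;7;0;6;10;8;9;4;3;2]];
 [::[::0;1;2;3;4;5;6;7;8;9;10;11];[::1;6;8;2;5;0;11;7;9;10;4;3];[::0;3;7;5;9;2;10;4;6;8;1;11];[::3;5;10;7;2;4;11;9;8;6;1;0]]].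

Definition cands_12_10 : seq (seq (seq nat)) := [::
 [::[::0;1;2;3;4;5;6;7;8;9;10;11];[::11;10;5;3;1;4;7;0;8;2;6;9];[::0;6;10;2;9;11;7;1;8;4;5;3];[::0;5;11;3;10;7;9;4;6;2;1;8]];
 [::[::0;1;2;3;4;5;6;7;8;9;10;11];[::10;0;2;11;3;7;4;8;5;1;6;9];[::10;4;11;1;9;7;0;5;2;6;3;8];[::3;6;1;8;11;10;2;7;5;9;0;4]];
 [::[::0;1;2;3;4;5;6;7;8;9;10;11];[::6;9;3;5;2;8;10;4;7;11;1;0];[::1;11;2;6;3;0;10;7;9;4;5;8];[::5;8;3;10;11;4;0;2;7;1;6;9]];
 [::[::0;1;2;3;4;5;6;7;8;9;10;11];[::10;2;6;9;11;8;1;4;7;3;5;0];[::11;2;8;5;7;0;3;9;1;6;4;10];[::4;11;1;3;6;8;0;10;5;9;2;7]];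
 [::[::0;1;2;3;4;5;6;7;8;9;10;11];[::2;0;11;4;1;7;9;10;3;5;6;8];[::3;7;5;11;6;2;8;10;4;0;1;9];[::0;7;10;2;9;11;3;6;1;8;4;5]];
 [::[::0;1;2;3;4;5;6;7;8;9;10;11];[::6;9;11;2;7;0;3;1;10;4;5;8];[::2;0;6;3;9;1;7;11;8;4;10;5];[::1;11;0;4;7;5;9;2;10;6;8;3]];
 [::[::0;1;2;3;4;5;6;7;8;9;10;11];[::11;1;5;9;2;8;4;10;3;6;0;7];[::3;5;7;9;6;4;2;11;10;8;0;1];[::11;5;10;7;2;0;8;1;9;4;3;6]];
 [::[::0;1;2;3;4;5;6;7;8;9;10;11];[::10;11;0;5;1;8;2;7;4;9;6;3];[::8;4;11;2;9;1;7;3;6;10;5;0];[::11;9;7;0;8;3;5;2;4;6;10;1]];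
 [::[::0;1;2;3;4;5;6;7;8;9;10;11];[::6;8;3;1;7;9;2;10;11;4;0;5];[::11;1;10;0;6;9;4;7;2;5;3;8];[::7;5;10;9;3;6;1;8;11;0;2;4]];
 [::[::0;1;2;3;4;5;6;7;8;9;10;11];[::6;4;9;2;10;1;11;8;5;0;7;3];[::10;0;3;5;7;1;9;6;2;11;8;4];[::2;7;10;5;1;6;3;8;4;0;9;11]]].

Definition cands_12_11 : seq (seq (seq nat)) := [::
 [::[::0;1;2;3;4;5;6;7;8;9;10;11];[::6;8;0;7;4;11;10;3;9;5;1;2];[::3;7;10;6;0;9;2;5;8;1;11;4];[::7;9;1;10;8;4;2;11;0;3;5;6]]].

Definition cands_13_9 : seq (seq (seq nat)) := [::
 [::[::0;1;2;3;4;5;6;7;8;9;10;11;12];[::8;9;1;4;10;0;12;11;6;7;5;2;3];[::10;7;12;9;6;3;0;4;8;1;5;11;2];[::9;3;8;12;1;6;10;5;0;4;11;2;7]];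
 [::[::0;1;2;3;4;5;6;7;8;9;10;11;12];[::12;7;9;11;8;3;10;5;0;4;1;2;6];[::7;0;11;5;2;8;1;9;3;4;10;6;12];[::10;8;4;2;11;3;6;12;1;0;5;9;7]];
 [::[::0;1;2;3;4;5;6;7;8;9;10;11;12];[::4;8;1;9;5;7;0;6;2;10;12;11;3];[::8;12;6;10;1;4;0;2;5;7;11;9;3];[::2;7;4;11;0;5;1;6;8;3;9;10;12]];
 [::[::0;1;2;3;4;5;6;7;8;9;10;11;12];[::8;11;5;3;12;2;0;4;10;6;1;9;7];[::1;10;3;7;9;8;2;5;12;6;11;0;4];[::4;6;12;0;11;7;5;9;2;1;8;3;10]];
 [::[::0;1;2;3;4;5;6;7;8;9;10;11;12];[::10;2;9;0;3;12;5;7;1;6;4;11;8];[::1;12;0;10;6;11;7;2;5;4;8;9;3];[::11;0;7;9;12;2;4;1;3;6;8;5;10]];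
 [::[::0;1;2;3;4;5;6;7;8;9;10;11;12];[::4;8;10;12;9;5;1;11;2;3;7;0;6];[::10;1;8;6;3;0;7;12;11;2;9;5;4];[::0;10;4;6;9;11;3;8;5;1;7;2;12]];
 [::[::0;1;2;3;4;5;6;7;8;9;10;11;12];[::4;11;12;9;10;0;2;8;1;5;3;6;7];[::9;4;6;1;7;11;10;5;0;2;12;8;3];[::4;0;3;5;9;8;12;10;2;1;7;6;11]];
 [::[::0;1;2;3;4;5;6;7;8;9;10;11;12];[::0;7;11;6;3;1;10;2;9;4;8;5;12];[::9;10;0;4;2;8;5;11;3;1;7;6;12];[::6;0;5;9;7;2;11;8;4;10;1;3;12]];
 [::[::0;1;2;3;4;5;6;7;8;9;10;11;12];[::1;10;8;6;2;9;4;0;3;5;12;7;11];[::12;10;7;11;2;5;9;8;4;3;0;6;1];[::11;6;10;2;7;0;9;3;12;4;8;1;5]];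
 [::[::0;1;2;3;4;5;6;7;8;9;10;11;12];[::0;3;5;10;2;6;4;8;11;9;12;7;1];[::0;4;2;11;10;9;8;3;6;1;12;5;7];[::0;10;6;1;11;5;12;9;2;8;7;4;3]];
 [::[::0;1;2;3;4;5;6;7;8;9;10;11;12];[::4;10;12;1;3;11;9;6;0;5;7;2;8];[::2;5;11;4;7;3;6;1;9;0;8;12;10];[::4;8;2;6;11;12;0;10;9;5;3;1;7]];
 [::[::0;1;2;3;4;5;6;7;8;9;10;11;12];[::3;12;8;11;1;4;7;2;0;5;10;6;9];[::4;2;5;8;3;11;6;1;12;10;9;7;0];[::2;9;10;1;3;7;0;4;8;6;11;5;12]];
 [::[::0;1;2;3;4;5;6;7;8;9;10;11;12];[::9;6;12;3;0;11;4;8;10;5;2;1;7];[::3;8;6;1;9;7;12;0;10;11;5;4;2];[::2;12;4;9;8;5;1;10;6;0;11;7;3]];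
 [::[::0;1;2;3;4;5;6;7;8;9;10;11;12];[::11;9;6;2;0;4;8;3;1;5;10;12;7];[::11;2;8;5;12;9;4;6;0;3;10;7;1];[::9;2;4;1;6;3;7;5;0;10;11;12;8]];
 [::[::0;1;2;3;4;5;6;7;8;9;10;11;12];[::1;9;5;0;3;10;11;12;6;7;8;2;4];[::6;2;11;4;12;5;7;1;10;3;0;8;9];[::8;12;3;7;0;4;2;5;10;11;6;1;9]];
 [::[::0;1;2;3;4;5;6;7;8;9;10;11;12];[::0;7;10;6;4;2;12;3;9;1;5;8;11];[::5;12;4;1;7;11;3;8;10;9;6;2;0];[::5;9;7;3;1;12;10;4;0;2;8;6;11]];
 [::[::0;1;2;3;4;5;6;7;8;9;10;11;12];[::12;10;2;8;6;9;3;1;7;4;11;5;0];[::2;7;9;5;8;4;11;12;6;3;10;0;1];[::7;4;0;11;9;10;1;5;3;2;8;12;6]];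
 [::[::0;1;2;3;4;5;6;7;8;9;10;11;12];[::1;5;0;4;2;9;8;10;12;6;11;7;3];[::6;12;9;10;4;7;11;3;8;0;1;2;5];[::0;6;11;2;8;1;3;5;12;7;10;9;4]];
 [::[::0;1;2;3;4;5;6;7;8;9;10;11;12];[::6;11;7;1;4;9;8;10;0;2;5;12;3];[::9;12;2;8;11;10;6;3;0;7;5;1;4];[::8;12;3;1;9;5;0;2;6;4;11;10;7]];
 [::[::0;1;2;3;4;5;6;7;8;9;10;11;12];[::6;3;12;2;5;11;0;10;4;9;1;7;8];[::0;6;12;1;11;4;8;10;3;7;9;5;2];[::5;3;11;8;2;7;10;6;1;9;4;12;0]];
 [::[::0;1;2;3;4;5;6;7;8;9;10;11;12];[::10;9;8;4;7;3;5;1;12;6;2;0;11];[::7;11;4;12;2;5;10;1;9;0;6;3;8];[::4;10;7;1;6;2;8;12;9;0;3;11;5]];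
 [::[::0;1;2;3;4;5;6;7;8;9;10;11;12];[::10;8;2;11;6;3;7;9;5;0;12;1;4];[::6;10;0;2;4;12;3;9;1;8;5;7;11];[::1;5;8;12;0;6;4;11;7;10;9;2;3]];
 [::[::0;1;2;3;4;5;6;7;8;9;10;11;12];[::6;1;5;10;12;11;8;9;0;2;4;7;3];[::2;4;11;6;8;12;0;3;10;5;7;9;1];[::7;3;8;10;4;0;2;12;5;1;11;9;6]];
 [::[::0;1;2;3;4;5;6;7;8;9;10;11;12];[::5;9;8;4;12;10;0;7;3;11;6;1;2];[::0;12;11;6;1;8;10;7;5;4;3;2;9];[::4;10;2;12;6;0;9;11;7;8;3;1;5]];
 [::[::0;1;2;3;4;5;6;7;8;9;10;11;12];[::7;1;10;2;6;8;11;12;5;3;9;4;0];[::2;11;4;6;10;7;3;8;5;1;12;0;9];[::5;0;4;12;3;6;11;10;9;7;1;2;8]];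
 [::[::0;1;2;3;4;5;6;7;8;9;10;11;12];[::9;5;2;0;6;11;3;12;8;10;7;1;4];[::1;4;10;3;8;2;9;0;11;7;12;5;6];[::1;3;6;4;12;11;9;7;5;0;10;2;8]];
 [::[::0;1;2;3;4;5;6;7;8;9;10;11;12];[::9;12;6;4;8;5;0;7;11;2;3;1;10];[::1;10;4;9;0;6;11;5;3;2;12;7;8];[::1;12;7;2;4;0;10;9;8;3;5;6;11]];
 [::[::0;1;2;3;4;5;6;7;8;9;10;11;12];[::1;6;2;12;11;5;0;10;9;8;7;4;3];[::3;5;8;9;6;11;2;10;12;4;0;1;7];[::3;0;4;2;7;12;5;1;11;10;9;8;6]];
 [::[::0;1;2;3;4;5;6;7;8;9;10;11;12];[::12;10;9;0;3;8;6;2;4;5;11;7;1];[::2;11;8;10;7;3;6;9;5;1;0;4;12];[::3;1;9;2;10;0;7;4;11;12;5;8;6]];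
 [::[::0;1;2;3;4;5;6;7;8;9;10;11;12];[::11;1;3;12;2;8;4;10;5;9;7;6;0];[::4;1;9;7;11;6;10;2;0;12;5;8;3];[::6;2;5;12;0;9;10;8;1;3;11;7;4]];
 [::[::0;1;2;3;4;5;6;7;8;9;10;11;12];[::11;5;10;7;3;6;2;4;8;12;1;0;9];[::9;8;12;10;11;0;6;4;1;5;3;2;7];[::2;0;4;10;3;11;6;9;12;1;7;8;5]];
 [::[::0;1;2;3;4;5;6;7;8;9;10;11;12];[::3;5;11;2;7;1;10;4;9;12;8;6;0];[::8;6;11;4;0;5;7;12;3;9;1;2;10];[::9;2;12;10;6;1;4;7;0;11;3;5;8]];
 [::[::0;1;2;3;4;5;6;7;8;9;10;11;12];[::4;8;2;10;5;11;6;0;7;1;9;3;12];[::2;11;12;5;0;10;3;8;6;9;1;4;7];[::6;12;1;5;9;10;11;7;3;4;0;2;8]];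
 [::[::0;1;2;3;4;5;6;7;8;9;10;11;12];[::12;11;2;8;1;9;0;6;10;7;5;3;4];[::10;1;7;12;6;8;11;9;2;3;0;4;5];[::8;12;1;5;0;7;2;6;9;11;10;4;3]];
 [::[::0;1;2;3;4;5;6;7;8;9;10;11;12];[::8;11;0;2;9;7;12;5;1;6;3;10;4];[::5;8;2;10;7;4;1;6;0;9;12;3;11];[::10;0;3;1;9;6;11;12;8;7;2;4;5]];
 [::[::0;1;2;3;4;5;6;7;8;9;10;11;12];[::3;12;5;2;10;6;11;7;9;4;8;0;1];[::5;11;1;9;10;4;2;12;7;6;8;3;0];[::12;11;3;0;2;7;10;5;1;4;9;8;6]];
 [::[::0;1;2;3;4;5;6;7;8;9;10;11;12];[::5;12;9;8;10;6;2;11;0;7;1;3;4];[::6;8;2;9;3;12;1;10;4;11;5;0;7];[::1;4;8;3;5;2;10;0;6;9;7;11;12]];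
 [::[::0;1;2;3;4;5;6;7;8;9;10;11;12];[::3;6;2;4;10;7;0;5;12;11;1;9;8];[::0;2;8;11;3;5;7;12;9;10;6;1;4];[::7;1;11;9;6;8;3;0;4;12;2;10;5]];
 [::[::0;1;2;3;4;5;6;7;8;9;10;11;12];[::9;8;12;10;2;5;1;6;0;11;4;7;3];[::6;4;9;11;1;8;3;12;2;0;7;5;10];[::6;8;11;7;2;9;1;10;3;5;0;4;12]];
 [::[::0;1;2;3;4;5;6;7;8;9;10;11;12];[::10;8;4;12;9;3;1;11;0;7;5;2;6];[::5;0;3;6;9;11;2;4;10;1;7;12;8];[::2;9;0;6;8;1;5;12;7;3;10;4;11]];
 [::[::0;1;2;3;4;5;6;7;8;9;10;11;12];[::9;7;1;8;12;5;10;4;0;3;2;6;11];[::10;8;6;0;3;11;1;12;7;4;2;9;5];[::6;3;8;9;11;5;7;4;2;0;1;12;10]];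
 [::[::0;1;2;3;4;5;6;7;8;9;10;11;12];[::3;6;11;10;8;9;0;4;7;1;5;12;2];[::2;11;4;10;3;1;7;0;12;8;5;6;9];[::3;5;10;7;12;6;4;2;0;1;8;9;11]];
 [::[::0;1;2;3;4;5;6;7;8;9;10;11;12];[::10;1;7;5;3;9;0;2;4;8;6;12;11];[::12;8;10;3;1;5;2;7;11;4;0;6;9];[::11;1;12;5;0;4;6;8;9;7;2;10;3]];
 [::[::0;1;2;3;4;5;6;7;8;9;10;11;12];[::4;12;6;2;8;9;5;3;11;10;0;7;1];[::11;6;10;8;12;7;4;9;2;0;3;1;5];[::12;5;10;11;9;6;8;1;3;0;7;4;2]];
 [::[::0;1;2;3;4;5;6;7;8;9;10;11;12];[::10;8;12;1;3;11;5;9;7;0;6;4;2];[::2;6;8;4;10;11;0;12;9;3;5;7;1];[::10;1;6;0;9;4;7;2;12;5;3;8;11]];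
 [::[::0;1;2;3;4;5;6;7;8;9;10;11;12];[::4;11;12;9;3;7;2;10;1;8;6;5;0];[::10;0;4;6;12;2;11;7;5;8;3;9;1];[::3;6;9;1;5;12;0;11;8;10;2;7;4]];
 [::[::0;1;2;3;4;5;6;7;8;9;10;11;12];[::9;12;1;5;3;6;8;10;0;4;11;2;7];[::11;7;0;4;9;1;3;12;2;5;10;8;6];[::1;4;7;5;9;2;6;10;11;12;8;0;3]];
 [::[::0;1;2;3;4;5;6;7;8;9;10;11;12];[::10;6;12;2;8;1;11;4;0;5;3;7;9];[::11;2;0;5;9;1;4;10;3;12;7;8;6];[::6;8;9;3;12;10;7;5;1;0;11;2;4]];
 [::[::0;1;2;3;4;5;6;7;8;9;10;11;12];[::4;7;2;10;12;11;9;6;1;0;3;5;8];[::4;6;8;3;7;0;12;5;11;10;9;2;1];[::6;3;11;8;9;1;10;7;12;5;4;0;2]];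
 [::[::0;1;2;3;4;5;6;7;8;9;10;11;12];[::9;11;2;10;0;12;5;1;8;7;6;3;4];[::2;12;11;10;5;0;4;6;9;8;1;7;3];[::7;1;11;8;2;0;9;10;12;6;4;5;3]];
 [::[::0;1;2;3;4;5;6;7;8;9;10;11;12];[::4;9;7;2;11;8;6;3;10;1;5;0;12];[::12;7;0;2;10;6;4;1;3;11;9;8;5];[::8;12;11;10;5;1;6;9;3;7;0;2;4]];
 [::[::0;1;2;3;4;5;6;7;8;9;10;11;12];[::5;1;9;0;2;10;8;11;7;4;6;3;12];[::8;9;6;12;1;3;10;11;5;0;2;4;7];[::8;6;10;7;2;12;11;9;4;5;0;1;3]];
 [::[::0;1;2;3;4;5;6;7;8;9;10;11;12];[::4;8;2;12;11;1;10;6;9;7;5;0;3];[::11;8;6;2;0;10;4;12;5;9;3;7;1];[::12;6;0;9;10;7;2;11;3;5;1;8;4]];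
 [::[::0;1;2;3;4;5;6;7;8;9;10;11;12];[::12;3;10;5;0;9;1;7;11;8;6;2;4];[::9;11;5;8;2;0;12;10;7;1;4;3;6];[::5;1;6;12;4;0;3;8;9;11;10;2;7]];
 [::[::0;1;2;3;4;5;6;7;8;9;10;11;12];[::7;5;0;2;10;9;11;12;1;4;6;3;8];[::3;10;6;12;4;9;8;5;11;1;7;0;2];[::1;10;12;9;3;8;6;11;4;5;2;7;0]];
 [::[::0;1;2;3;4;5;6;7;8;9;10;11;12];[::5;7;10;12;3;1;6;2;0;4;8;9;11];[::1;7;4;12;11;0;6;8;5;9;2;10;3];[::3;11;8;1;9;10;0;12;6;2;4;7;5]];
 [::[::0;1;2;3;4;5;6;7;8;9;10;11;12];[::4;0;3;7;12;2;8;9;10;11;1;5;6];[::5;8;12;3;6;9;1;11;10;7;0;2;4];[::6;1;3;10;2;0;11;12;4;9;8;5;7]];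
 [::[::0;1;2;3;4;5;6;7;8;9;10;11;12];[::6;9;3;8;11;2;5;7;12;10;1;0;4];[::7;4;6;11;12;10;9;1;3;2;5;8;0];[::4;8;6;1;10;2;7;9;0;3;11;5;12]];
 [::[::0;1;2;3;4;5;6;7;8;9;10;11;12];[::8;12;10;2;11;4;1;9;6;3;7;0;5];[::3;11;8;2;12;5;0;10;7;1;6;4;9];[::0;4;7;5;10;8;1;6;3;2;9;12;11]];
 [::[::0;1;2;3;4;5;6;7;8;9;10;11;12];[::3;5;7;12;2;4;1;10;11;9;0;6;8];[::1;3;8;6;0;10;2;7;9;12;4;5;11];[::5;1;11;0;9;6;4;8;12;3;2;10;7]];
 [::[::0;1;2;3;4;5;6;7;8;9;10;11;12];[::7;0;6;1;10;2;11;8;12;4;3;5;9];[::6;2;8;3;0;11;5;9;4;1;7;12;10];[::4;2;9;12;5;7;11;3;10;6;8;0;1]];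
 [::[::0;1;2;3;4;5;6;7;8;9;10;11;12];[::5;11;9;7;3;6;12;4;2;0;10;8;1];[::9;1;8;3;10;0;2;11;6;12;7;4;5];[::7;10;4;1;3;5;0;11;12;6;9;8;2]];
 [::[::0;1;2;3;4;5;6;7;8;9;10;11;12];[::5;9;1;12;2;8;11;10;7;6;4;3;0];[::9;4;2;6;3;10;1;7;11;5;0;12;8];[::12;8;6;10;0;9;3;7;4;11;1;2;5]];
 [::[::0;1;2;3;4;5;6;7;8;9;10;11;12];[::5;11;2;9;7;4;10;0;12;6;8;1;3];[::3;8;9;12;1;6;10;2;5;0;4;11;7];[::12;4;9;0;5;8;11;6;2;10;1;7;3]];
 [::[::0;1;2;3;4;5;6;7;8;9;10;11;12];[::4;0;3;6;1;12;7;5;2;11;9;10;8];[::8;12;0;2;6;4;7;3;1;9;5;11;10];[::5;12;6;0;7;2;8;4;1;10;3;9;11]];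
 [::[::0;1;2;3;4;5;6;7;8;9;10;11;12];[::8;5;2;9;1;3;11;10;12;6;7;0;4];[::0;9;5;11;7;2;4;8;3;6;12;10;1];[::3;10;8;2;6;1;12;0;5;7;4;9;11]];
 [::[::0;1;2;3;4;5;6;7;8;9;10;11;12];[::7;5;11;0;6;4;10;12;1;2;8;9;3];[::9;12;4;8;6;3;11;7;0;5;2;10;1];[::11;4;1;3;7;12;2;6;9;0;10;5;8]];
 [::[::0;1;2;3;4;5;6;7;8;9;10;11;12];[::12;9;3;1;6;4;10;5;8;11;7;0;2];[::0;7;12;11;1;5;2;10;6;9;8;3;4];[::10;11;8;2;6;12;4;9;0;5;7;1;3]];
 [::[::0;1;2;3;4;5;6;7;8;9;10;11;12];[::0;3;9;11;4;2;12;8;5;1;7;10;6];[::12;5;11;0;6;8;9;10;7;4;1;2;3];[::12;0;2;8;3;11;10;1;9;5;6;4;7]];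
 [::[::0;1;2;3;4;5;6;7;8;9;10;11;12];[::7;12;0;3;1;9;2;5;11;6;8;4;10];[::10;11;8;2;7;5;3;12;9;0;4;6;1];[::5;0;7;4;1;12;6;2;10;8;11;9;3]];
 [::[::0;1;2;3;4;5;6;7;8;9;10;11;12];[::6;9;4;10;11;0;3;1;12;7;2;8;5];[::1;10;9;12;8;6;4;7;5;0;11;3;2];[::2;7;3;5;8;4;12;0;9;1;11;10;6]];
 [::[::0;1;2;3;4;5;6;7;8;9;10;11;12];[::10;5;3;11;9;4;12;8;6;0;2;1;7];[::2;0;5;1;9;10;11;4;7;8;3;12;6];[::6;3;8;1;10;2;5;12;0;9;4;11;7]];
 [::[::0;1;2;3;4;5;6;7;8;9;10;11;12];[::5;12;8;9;6;1;3;11;2;7;0;4;10];[::11;6;8;1;10;12;3;7;4;0;9;2;5];[::3;8;2;7;1;4;12;9;5;11;0;6;10]];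
 [::[::0;1;2;3;4;5;6;7;8;9;10;11;12];[::7;3;0;4;9;1;6;11;5;8;12;2;10];[::8;1;12;10;3;5;0;9;11;7;6;4;2];[::10;9;2;12;5;1;7;4;11;3;8;6;0]];
 [::[::0;1;2;3;4;5;6;7;8;9;10;11;12];[::2;0;10;8;4;6;11;9;7;12;3;5;1];[::1;3;10;9;5;11;8;6;12;2;4;7;0];[::12;2;6;10;11;7;5;8;9;1;4;0;3]];
 [::[::0;1;2;3;4;5;6;7;8;9;10;11;12];[::1;4;10;0;11;6;2;5;7;9;8;3;12];[::2;7;9;5;12;1;11;8;10;0;3;6;4];[::1;6;3;0;12;7;4;9;8;5;10;11;2]];
 [::[::0;1;2;3;4;5;6;7;8;9;10;11;12];[::9;0;6;3;11;5;8;4;2;7;12;10;1];[::12;11;7;1;5;0;4;10;6;2;8;3;9];[::3;7;12;5;2;11;4;1;9;6;10;0;8]];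
 [::[::0;1;2;3;4;5;6;7;8;9;10;11;12];[::10;11;1;6;9;12;2;7;3;8;5;0;4];[::8;3;12;11;9;10;5;0;4;1;7;2;6];[::5;3;1;9;4;10;12;6;11;7;8;2;0]];
 [::[::0;1;2;3;4;5;6;7;8;9;10;11;12];[::2;12;1;8;11;0;3;5;9;10;6;4;7];[::11;3;12;10;1;6;0;9;4;2;5;7;8];[::8;5;11;7;4;12;6;2;10;3;9;1;0]];
 [::[::0;1;2;3;4;5;6;7;8;9;10;11;12];[::11;10;2;8;1;9;12;6;3;5;0;7;4];[::8;4;11;12;5;9;6;0;3;7;1;10;2];[::10;1;4;7;0;9;8;12;3;2;11;5;6]];
 [::[::0;1;2;3;4;5;6;7;8;9;10;11;12];[::11;8;4;0;10;7;1;5;12;3;2;9;6];[::6;3;7;5;11;9;1;10;2;12;0;8;4];[::0;3;10;6;8;12;9;4;11;2;7;1;5]];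
 [::[::0;1;2;3;4;5;6;7;8;9;10;11;12];[::11;2;10;1;6;12;3;9;4;0;5;7;8];[::10;4;8;11;7;9;12;0;6;1;2;5;3];[::5;0;11;3;10;12;8;2;7;9;4;1;6]];
 [::[::0;1;2;3;4;5;6;7;8;9;10;11;12];[::5;7;12;9;6;1;11;8;2;3;0;10;4];[::1;9;7;0;6;12;3;11;10;8;5;2;4];[::5;12;10;2;0;3;9;4;11;6;8;1;7]];
 [::[::0;1;2;3;4;5;6;7;8;9;10;11;12];[::3;5;8;4;7;9;12;6;10;1;11;2;0];[::8;2;0;7;10;4;6;3;9;11;12;1;5];[::10;11;7;12;0;9;1;3;8;5;2;4;6]];
 [::[::0;1;2;3;4;5;6;7;8;9;10;11;12];[::2;9;11;4;12;0;5;10;7;8;6;1;3];[::4;1;9;10;8;3;7;0;6;2;12;5;11];[::7;1;8;11;2;12;6;10;4;0;5;9;3]];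
 [::[::0;1;2;3;4;5;6;7;8;9;10;11;12];[::7;10;6;0;12;5;8;2;11;4;1;3;9];[::12;7;9;2;5;10;11;6;8;4;3;1;0];[::9;3;6;4;2;10;1;8;11;5;0;12;7]];
 [::[::0;1;2;3;4;5;6;7;8;9;10;11;12];[::10;2;5;3;8;1;4;0;12;11;7;9;6];[::9;0;7;3;6;10;11;5;12;8;4;2;1];[::8;2;6;9;1;3;11;7;5;0;10;12;4]];
 [::[::0;1;2;3;4;5;6;7;8;9;10;11;12];[::4;12;10;7;2;9;1;11;8;0;5;3;6];[::6;4;9;5;11;0;3;12;2;10;8;7;1];[::12;6;8;3;1;10;11;7;0;5;2;9;4]];
 [::[::0;1;2;3;4;5;6;7;8;9;10;11;12];[::2;6;1;12;5;9;0;10;4;7;8;3;11];[::0;2;9;1;3;10;7;5;11;4;6;12;8];[::10;5;3;8;11;2;7;0;12;4;9;1;6]];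
 [::[::0;1;2;3;4;5;6;7;8;9;10;11;12];[::5;1;12;7;11;0;10;8;9;3;6;4;2];[::10;11;4;8;2;9;12;0;3;6;7;1;5];[::2;12;11;9;6;1;7;5;0;10;8;3;4]];
 [::[::0;1;2;3;4;5;6;7;8;9;10;11;12];[::12;11;9;8;5;7;4;0;6;10;1;2;3];[::10;2;8;12;4;9;0;7;3;11;5;1;6];[::3;8;6;4;2;7;10;12;5;1;11;9;0]];
 [::[::0;1;2;3;4;5;6;7;8;9;10;11;12];[::6;3;0;2;11;10;8;1;4;5;9;7;12];[::11;4;9;2;10;12;0;7;1;8;6;3;5];[::2;6;11;7;3;9;12;5;8;10;1;0;4]];
 [::[::0;1;2;3;4;5;6;7;8;9;10;11;12];[::12;9;1;11;4;6;0;2;5;7;10;8;3];[::5;11;2;7;0;3;8;12;10;4;9;6;1];[::6;8;1;12;7;11;0;9;3;10;4;5;2]];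
 [::[::0;1;2;3;4;5;6;7;8;9;10;11;12];[::5;3;11;7;0;4;2;9;1;10;12;6;8];[::5;2;12;10;6;4;1;11;9;7;8;3;0];[::3;1;6;12;4;8;11;10;7;2;9;0;5]];
 [::[::0;1;2;3;4;5;6;7;8;9;10;11;12];[::0;5;9;2;11;8;12;4;7;6;10;3;1];[::6;9;1;12;0;10;11;7;3;8;5;4;2];[::4;8;5;10;6;11;3;12;2;0;7;1;9]];
 [::[::0;1;2;3;4;5;6;7;8;9;10;11;12];[::12;0;2;9;10;5;1;3;6;11;4;8;7];[::6;0;11;8;10;7;1;9;4;2;12;3;5];[::10;0;9;11;1;8;12;5;2;6;4;7;3]];
 [::[::0;1;2;3;4;5;6;7;8;9;10;11;12];[::2;0;5;1;6;8;10;12;4;11;7;3;9];[::9;3;5;7;10;0;11;2;8;4;12;6;1];[::5;12;11;6;9;7;4;10;2;1;0;3;8]];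
 [::[::0;1;2;3;4;5;6;7;8;9;10;11;12];[::8;2;10;7;3;12;11;1;4;6;0;9;5];[::9;4;6;1;10;12;5;0;2;11;3;8;7];[::0;3;8;9;1;7;2;12;4;10;11;5;6]];
 [::[::0;1;2;3;4;5;6;7;8;9;10;11;12];[::6;12;10;0;3;8;4;9;2;11;1;5;7];[::5;2;0;4;11;10;9;6;3;12;7;1;8];[::8;10;4;7;1;5;11;9;12;2;6;0;3]];
 [::[::0;1;2;3;4;5;6;7;8;9;10;11;12];[::8;11;1;3;5;12;7;10;9;0;2;4;6];[::0;10;12;4;9;7;1;5;2;8;11;6;3];[::0;5;11;12;8;10;6;2;9;3;1;4;7]];
 [::[::0;1;2;3;4;5;6;7;8;9;10;11;12];[::5;11;12;3;8;4;10;6;9;1;0;2;7];[::1;4;2;6;11;9;12;0;7;8;10;3;5];[::8;2;11;7;10;0;5;3;9;12;6;1;4]];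
 [::[::0;1;2;3;4;5;6;7;8;9;10;11;12];[::9;2;11;12;7;1;6;3;0;10;8;5;4];[::8;9;11;5;0;4;10;6;2;7;3;1;12];[::0;2;12;1;8;3;7;9;10;5;6;4;11]];
 [::[::0;1;2;3;4;5;6;7;8;9;10;11;12];[::9;8;10;0;7;11;12;2;5;4;1;6;3];[::4;9;2;7;12;1;5;8;6;3;0;10;11];[::11;5;0;2;10;6;3;12;9;4;7;8;1]];
 [::[::0;1;2;3;4;5;6;7;8;9;10;11;12];[::12;10;1;4;6;3;0;2;7;5;9;8;11];[::10;6;1;7;3;5;2;4;0;12;8;9;11];[::6;2;11;1;3;10;5;0;9;4;7;12;8]];
 [::[::0;1;2;3;4;5;6;7;8;9;10;11;12];[::5;10;9;6;3;12;0;11;7;1;2;4;8];[::12;10;0;3;7;4;11;6;1;2;5;8;9];[::3;8;6;4;0;9;5;2;11;10;12;1;7]];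
 [::[::0;1;2;3;4;5;6;7;8;9;10;11;12];[::9;3;0;4;8;2;5;10;1;11;7;6;12];[::0;2;4;1;3;12;10;6;11;8;9;7;5];[::9;4;12;5;1;8;11;7;10;3;2;6;0]];
 [::[::0;1;2;3;4;5;6;7;8;9;10;11;12];[::2;8;4;9;6;1;3;10;11;0;12;7;5];[::7;10;6;0;4;12;8;5;2;11;1;3;9];[::8;6;4;11;1;12;2;9;3;10;7;5;0]];
 [::[::0;1;2;3;4;5;6;7;8;9;10;11;12];[::7;9;12;5;11;6;0;10;1;4;8;3;2];[::4;10;3;12;7;11;8;9;1;2;0;5;6];[::3;6;4;12;11;2;10;7;0;9;5;1;8]];
 [::[::0;1;2;3;4;5;6;7;8;9;10;11;12];[::9;3;6;1;4;2;12;11;0;7;8;5;10];[::4;11;9;7;1;8;12;0;6;10;5;2;3];[::4;0;7;12;1;11;2;9;8;3;10;6;5]];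
 [::[::0;1;2;3;4;5;6;7;8;9;10;11;12];[::9;1;12;3;11;10;5;2;8;7;6;4;0];[::4;11;9;7;2;6;1;3;10;8;0;5;12];[::7;12;10;9;2;0;3;5;11;6;1;8;4]];
 [::[::0;1;2;3;4;5;6;7;8;9;10;11;12];[::8;9;11;12;4;2;5;1;10;6;7;0;3];[::10;5;0;12;3;1;11;2;9;7;6;8;4];[::10;2;7;0;6;8;12;1;4;3;9;11;5]];
 [::[::0;1;2;3;4;5;6;7;8;9;10;11;12];[::4;12;10;2;11;9;6;3;1;5;8;0;7];[::12;7;3;8;1;10;0;5;2;4;6;9;11];[::8;4;7;10;11;12;5;9;2;0;1;6;3]];
 [::[::0;1;2;3;4;5;6;7;8;9;10;11;12];[::4;2;5;12;9;1;3;11;8;6;0;7;10];[::3;0;5;7;2;12;1;6;10;8;4;11;9];[::7;3;5;9;0;2;6;12;11;4;8;1;10]];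
 [::[::0;1;2;3;4;5;6;7;8;9;10;11;12];[::4;7;12;9;6;0;5;11;8;10;2;3;1];[::12;5;10;6;2;7;9;1;11;3;0;4;8];[::1;8;3;10;7;0;9;2;5;4;6;11;12]];
 [::[::0;1;2;3;4;5;6;7;8;9;10;11;12];[::5;8;9;11;7;12;6;3;0;10;1;2;4];[::4;11;12;8;3;7;0;10;6;9;1;2;5];[::7;4;8;10;11;6;0;12;5;1;9;2;3]];
 [::[::0;1;2;3;4;5;6;7;8;9;10;11;12];[::2;4;10;1;9;0;3;11;6;8;5;7;12];[::2;10;0;11;5;8;4;7;12;1;6;3;9];[::3;7;10;8;2;0;4;6;1;9;12;5;11]];
 [::[::0;1;2;3;4;5;6;7;8;9;10;11;12];[::8;9;4;11;0;2;10;12;1;7;6;3;5];[::3;12;8;2;11;1;6;4;0;10;7;9;5];[::9;3;8;5;2;4;7;11;10;12;1;0;6]];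
 [::[::0;1;2;3;4;5;6;7;8;9;10;11;12];[::10;8;4;7;9;0;3;12;6;1;5;2;11];[::1;8;2;6;4;9;11;3;10;5;0;12;7];[::12;1;5;0;2;10;7;11;4;3;6;9;8]];
 [::[::0;1;2;3;4;5;6;7;8;9;10;11;12];[::11;1;5;9;12;0;2;10;7;6;4;8;3];[::4;2;9;3;12;6;10;8;11;0;5;7;1];[::6;1;10;12;8;5;11;0;3;9;2;7;4]];
 [::[::0;1;2;3;4;5;6;7;8;9;10;11;12];[::12;5;0;10;3;6;1;11;8;9;4;2;7];[::1;10;6;4;0;2;8;9;3;5;11;7;12];[::11;6;8;3;5;1;4;10;2;12;9;7;0]];
 [::[::0;1;2;3;4;5;6;7;8;9;10;11;12];[::10;3;11;6;12;4;7;9;0;1;8;5;2];[::0;7;3;1;10;12;2;8;6;11;9;5;4];[::9;1;7;11;12;5;8;10;6;0;3;4;2]];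
 [::[::0;1;2;3;4;5;6;7;8;9;10;11;12];[::2;0;9;10;11;6;8;1;12;3;4;7;5];[::3;12;7;5;11;4;2;9;1;6;8;0;10];[::1;6;3;10;4;9;5;0;7;8;12;11;2]];
 [::[::0;1;2;3;4;5;6;7;8;9;10;11;12];[::12;5;9;8;3;11;6;2;7;4;10;1;0];[::10;6;1;12;3;7;5;2;11;0;4;9;8];[::11;7;4;9;1;5;10;0;12;3;6;8;2]];
 [::[::0;1;2;3;4;5;6;7;8;9;10;11;12];[::9;0;11;2;7;1;12;5;8;4;6;10;3];[::12;8;6;9;4;11;3;0;2;1;10;5;7];[::1;5;11;9;2;10;4;6;3;0;7;12;8]];
 [::[::0;1;2;3;4;5;6;7;8;9;10;11;12];[::10;4;1;7;3;11;9;6;12;8;2;5;0];[::10;1;6;0;4;7;12;11;2;5;3;8;9];[::8;5;7;9;3;1;12;2;6;11;0;4;10]];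
 [::[::0;1;2;3;4;5;6;7;8;9;10;11;12];[::6;2;7;4;0;11;5;3;9;12;8;1;10];[::3;7;11;1;9;2;0;6;10;4;8;12;5];[::2;4;11;3;1;8;10;7;12;0;5;9;6]];
 [::[::0;1;2;3;4;5;6;7;8;9;10;11;12];[::8;1;9;12;5;2;0;4;10;11;7;3;6];[::8;6;0;10;12;2;7;1;4;11;5;9;3];[::2;9;11;6;10;7;5;3;8;1;4;12;0]];
 [::[::0;1;2;3;4;5;6;7;8;9;10;11;12];[::3;8;4;1;6;9;7;12;11;5;10;2;0];[::3;6;4;0;2;7;1;9;5;10;12;11;8];[::0;7;4;9;2;6;8;1;12;10;11;3;5]];
 [::[::0;1;2;3;4;5;6;7;8;9;10;11;12];[::10;5;9;2;4;8;6;11;1;12;0;3;7];[::7;10;8;12;6;3;5;2;11;0;1;9;4];[::7;3;8;5;0;10;9;6;1;2;11;4;12]];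
 [::[::0;1;2;3;4;5;6;7;8;9;10;11;12];[::12;0;5;1;10;3;7;11;4;9;2;6;8];[::2;8;12;1;9;7;10;4;6;0;11;5;3];[::9;5;11;1;8;4;7;12;3;6;0;2;10]];
 [::[::0;1;2;3;4;5;6;7;8;9;10;11;12];[::10;8;3;6;12;4;1;9;2;11;0;5;7];[::1;12;5;2;0;4;8;11;10;9;3;6;7];[::9;3;10;0;6;11;5;7;12;1;4;8;2]];
 [::[::0;1;2;3;4;5;6;7;8;9;10;11;12];[::12;6;4;1;8;11;5;9;2;0;3;7;10];[::4;0;12;7;5;2;8;3;11;6;9;1;10];[::10;8;12;4;9;3;7;1;5;0;2;11;6]];
 [::[::0;1;2;3;4;5;6;7;8;9;10;11;12];[::1;12;11;2;10;7;9;6;4;5;8;0;3];[::5;3;9;2;6;12;10;11;8;0;1;4;7];[::4;7;2;12;3;8;1;9;11;0;5;6;10]];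
 [::[::0;1;2;3;4;5;6;7;8;9;10;11;12];[::0;7;10;11;12;1;6;3;5;4;8;9;2];[::0;12;4;2;9;1;8;11;6;7;10;3;5];[::11;5;9;10;4;6;8;3;0;1;2;7;12]];
 [::[::0;1;2;3;4;5;6;7;8;9;10;11;12];[::7;0;12;5;2;10;3;9;11;1;4;6;8];[::12;3;6;9;4;1;7;5;10;0;2;8;11];[::8;3;1;5;9;2;11;12;6;7;4;0;10]];
 [::[::0;1;2;3;4;5;6;7;8;9;10;11;12];[::5;2;11;7;12;6;4;0;3;1;9;10;8];[::8;9;6;11;0;10;4;12;3;5;2;7;1];[::2;9;1;3;11;5;10;6;0;4;8;12;7]];
 [::[::0;1;2;3;4;5;6;7;8;9;10;11;12];[::9;6;11;1;12;2;5;7;10;4;3;0;8];[::10;5;3;11;2;0;7;9;12;6;8;1;4];[::6;4;1;9;0;12;7;11;8;5;10;2;3]];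
 [::[::0;1;2;3;4;5;6;7;8;9;10;11;12];[::9;4;1;7;12;8;2;6;0;3;5;10;11];[::10;5;8;6;9;12;4;2;11;0;3;7;1];[::10;7;2;5;11;1;8;4;6;0;12;3;9]];
 [::[::0;1;2;3;4;5;6;7;8;9;10;11;12];[::1;5;0;9;2;4;7;3;12;6;8;11;10];[::4;0;2;12;9;11;3;6;10;7;1;5;8];[::11;4;1;7;5;9;10;12;8;2;6;3;0]];
 [::[::0;1;2;3;4;5;6;7;8;9;10;11;12];[::5;11;1;6;12;0;3;9;2;4;10;7;8];[::2;0;9;11;10;3;6;4;12;1;5;8;7];[::4;9;1;10;7;2;8;5;0;6;11;3;12]];
 [::[::0;1;2;3;4;5;6;7;8;9;10;11;12];[::2;0;7;12;4;1;5;3;6;9;11;10;8];[::12;5;9;4;0;6;1;11;10;8;7;3;2];[::1;8;5;0;9;6;4;2;12;10;11;7;3]];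
 [::[::0;1;2;3;4;5;6;7;8;9;10;11;12];[::10;11;4;9;7;3;5;8;12;0;6;1;2];[::10;4;8;6;1;12;0;5;7;9;2;3;11];[::11;8;3;9;6;2;12;7;1;0;10;5;4]];
 [::[::0;1;2;3;4;5;6;7;8;9;10;11;12];[::3;10;2;7;11;4;1;9;0;8;6;5;12];[::8;9;7;1;3;12;2;5;10;4;0;6;11];[::10;11;1;8;4;2;6;0;12;5;3;7;9]];
 [::[::0;1;2;3;4;5;6;7;8;9;10;11;12];[::6;2;7;4;1;10;5;9;8;12;0;11;3];[::0;11;5;3;9;4;2;12;6;1;8;7;10];[::12;3;0;2;10;11;8;1;9;4;5;6;7]];
 [::[::0;1;2;3;4;5;6;7;8;9;10;11;12];[::8;1;9;10;6;0;7;11;3;2;12;5;4];[::11;9;5;3;7;4;6;12;10;1;0;8;2];[::3;10;5;8;11;12;0;2;6;9;1;4;7]];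
 [::[::0;1;2;3;4;5;6;7;8;9;10;11;12];[::4;6;8;5;7;2;11;3;1;12;10;0;9];[::1;11;5;0;7;3;10;2;6;9;4;8;12];[::8;4;2;0;10;5;3;6;11;12;7;1;9]];
 [::[::0;1;2;3;4;5;6;7;8;9;10;11;12];[::4;10;7;2;9;11;5;3;1;12;6;0;8];[::3;9;5;10;1;12;2;4;8;6;0;7;11];[::11;12;0;4;7;3;10;2;6;8;1;5;9]];
 [::[::0;1;2;3;4;5;6;7;8;9;10;11;12];[::2;12;10;3;6;4;7;5;9;11;8;1;0];[::6;2;8;3;0;10;9;12;11;1;4;5;7];[::2;11;10;8;9;0;12;1;7;5;4;6;3]];
 [::[::0;1;2;3;4;5;6;7;8;9;10;11;12];[::2;9;12;11;0;6;1;7;5;10;8;4;3];[::11;9;1;3;12;8;10;4;2;6;5;7;0];[::1;8;5;12;6;4;7;11;10;9;0;2;3]];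
 [::[::0;1;2;3;4;5;6;7;8;9;10;11;12];[::10;5;2;9;12;4;7;3;6;1;11;0;8];[::2;7;0;6;11;4;1;3;10;12;5;8;9];[::0;2;11;7;9;10;8;12;3;5;6;4;1]];
 [::[::0;1;2;3;4;5;6;7;8;9;10;11;12];[::9;6;11;8;12;1;10;4;7;2;3;0;5];[::10;9;2;7;5;11;4;12;0;3;6;8;1];[::3;0;2;10;7;12;5;9;11;6;1;4;8]];
 [::[::0;1;2;3;4;5;6;7;8;9;10;11;12];[::8;6;3;7;9;1;11;0;2;5;10;4;12];[::9;3;1;8;4;11;5;0;6;12;7;2;10];[::12;10;3;0;4;9;11;2;5;8;6;1;7]];
 [::[::0;1;2;3;4;5;6;7;8;9;10;11;12];[::9;2;8;12;11;3;7;4;1;0;10;5;6];[::10;11;0;7;12;4;8;6;9;1;2;3;5];[::12;10;3;6;0;9;11;1;5;7;8;2;4]];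
 [::[::0;1;2;3;4;5;6;7;8;9;10;11;12];[::1;5;7;2;12;11;8;3;9;4;6;0;10];[::2;10;8;5;9;4;11;0;6;1;3;12;7];[::10;0;12;7;3;5;11;6;1;8;9;4;2]];
 [::[::0;1;2;3;4;5;6;7;8;9;10;11;12];[::11;7;9;8;12;10;5;1;3;6;2;0;4];[::1;10;2;5;0;11;8;3;7;12;6;4;9];[::6;2;7;10;9;1;8;5;3;0;12;4;11]];
 [::[::0;1;2;3;4;5;6;7;8;9;10;11;12];[::3;8;9;10;4;7;2;11;6;12;5;0;1];[::12;3;7;1;10;0;9;6;4;5;8;2;11];[::1;11;10;6;8;5;7;12;9;0;2;3;4]];
 [::[::0;1;2;3;4;5;6;7;8;9;10;11;12];[::3;12;2;6;10;8;4;11;9;7;1;0;5];[::9;8;5;12;0;11;1;4;10;2;6;3;7];[::5;9;7;11;3;10;12;8;1;0;2;4;6]];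
 [::[::0;1;2;3;4;5;6;7;8;9;10;11;12];[::12;9;4;0;6;1;8;5;10;7;2;11;3];[::0;11;5;9;8;10;3;12;2;7;1;6;4];[::3;7;4;1;10;9;6;12;11;5;8;2;0]];
 [::[::0;1;2;3;4;5;6;7;8;9;10;11;12];[::1;9;3;6;2;0;7;10;8;12;4;5;11];[::2;4;6;12;0;11;7;9;5;3;8;1;10];[::7;5;12;1;4;0;6;8;2;10;3;9;11]];
 [::[::0;1;2;3;4;5;6;7;8;9;10;11;12];[::2;6;0;4;12;10;5;7;9;8;11;3;1];[::11;7;10;1;3;5;2;4;6;12;8;9;0];[::11;0;5;8;9;10;2;12;1;3;4;6;7]];
 [::[::0;1;2;3;4;5;6;7;8;9;10;11;12];[::10;5;1;7;4;6;2;12;0;3;11;9;8];[::12;5;8;2;9;1;4;11;3;6;10;7;0];[::7;5;11;6;0;3;1;10;9;8;12;4;2]];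
 [::[::0;1;2;3;4;5;6;7;8;9;10;11;12];[::9;1;12;0;11;10;6;8;2;3;4;7;5];[::8;11;1;4;7;5;9;6;3;2;10;0;12];[::0;4;10;7;3;9;11;2;6;5;8;1;12]];
 [::[::0;1;2;3;4;5;6;7;8;9;10;11;12];[::0;6;9;1;10;11;12;3;7;8;5;4;2];[::6;4;7;2;8;12;10;0;3;9;11;5;1];[::3;9;4;11;5;0;12;6;1;10;8;7;2]];
 [::[::0;1;2;3;4;5;6;7;8;9;10;11;12];[::8;9;5;7;2;12;3;11;1;4;10;6;0];[::9;2;4;10;8;6;3;5;12;7;0;11;1];[::2;6;9;10;1;4;8;12;0;3;11;7;5]];
 [::[::0;1;2;3;4;5;6;7;8;9;10;11;12];[::8;10;11;3;9;2;7;0;6;12;4;5;1];[::6;9;11;0;3;10;2;12;4;1;8;5;7];[::12;11;4;7;10;9;1;5;3;0;6;8;2]];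
 [::[::0;1;2;3;4;5;6;7;8;9;10;11;12];[::8;1;10;9;3;11;7;4;2;12;5;6;0];[::7;9;12;3;8;6;11;5;10;2;4;0;1];[::4;0;2;9;1;3;10;11;12;6;8;7;5]];
 [::[::0;1;2;3;4;5;6;7;8;9;10;11;12];[::10;5;11;1;8;9;4;12;3;7;0;2;6];[::9;12;10;0;5;7;4;6;2;11;8;3;1];[::9;10;4;2;11;8;12;1;6;5;3;7;0]];
 [::[::0;1;2;3;4;5;6;7;8;9;10;11;12];[::8;4;9;2;10;12;1;3;6;7;11;0;5];[::2;7;9;5;1;8;10;0;12;6;4;11;3];[::10;5;8;9;3;7;4;6;1;2;12;11;0]];
 [::[::0;1;2;3;4;5;6;7;8;9;10;11;12];[::5;11;10;8;12;6;2;9;7;0;3;4;1];[::2;8;1;6;3;5;9;12;0;4;11;10;7];[::5;10;12;1;7;2;11;9;0;6;4;3;8]];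
 [::[::0;1;2;3;4;5;6;7;8;9;10;11;12];[::5;8;9;6;1;4;12;11;7;2;10;3;0];[::4;2;10;9;12;1;11;5;0;8;3;7;6];[::7;4;8;11;6;2;0;12;3;5;9;10;1]];
 [::[::0;1;2;3;4;5;6;7;8;9;10;11;12];[::6;4;2;12;7;0;9;3;10;11;8;5;1];[::8;1;11;2;5;10;4;9;12;7;3;0;6];[::11;0;5;1;6;3;8;9;7;10;12;4;2]];
 [::[::0;1;2;3;4;5;6;7;8;9;10;11;12];[::10;6;4;1;5;9;7;11;8;12;3;0;2];[::3;7;12;11;5;8;9;6;1;2;0;10;4];[::3;5;10;7;1;11;4;0;9;12;6;8;2]];
 [::[::0;1;2;3;4;5;6;7;8;9;10;11;12];[::8;5;0;4;7;10;9;11;6;2;3;12;1];[::8;1;11;2;5;3;0;12;4;7;9;10;6];[::9;12;2;4;11;3;10;1;7;8;0;5;6]];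
 [::[::0;1;2;3;4;5;6;7;8;9;10;11;12];[::0;4;11;6;3;5;12;2;9;8;7;1;10];[::6;10;3;8;9;4;7;0;12;2;11;1;5];[::7;11;8;12;1;10;0;2;5;3;6;9;4]];
 [::[::0;1;2;3;4;5;6;7;8;9;10;11;12];[::6;10;4;8;9;12;7;5;0;3;1;11;2];[::8;10;9;2;0;7;4;11;3;5;12;1;6];[::10;2;4;12;3;6;9;11;1;8;5;7;0]];
 [::[::0;1;2;3;4;5;6;7;8;9;10;11;12];[::12;11;6;3;10;5;7;2;0;4;9;8;1];[::9;3;7;11;10;4;6;12;8;5;2;0;1];[::6;0;11;2;5;9;10;1;8;7;3;12;4]];
 [::[::0;1;2;3;4;5;6;7;8;9;10;11;12];[::6;1;10;0;3;8;4;7;12;9;11;2;5];[::4;12;2;6;11;0;7;3;10;9;5;1;8];[::7;10;2;8;6;0;12;3;9;5;4;1;11]];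
 [::[::0;1;2;3;4;5;6;7;8;9;10;11;12];[::0;6;1;10;3;7;12;11;9;8;2;5;4];[::11;5;0;4;9;12;6;2;7;10;3;8;1];[::9;7;5;8;10;2;11;0;3;1;4;6;12]];
 [::[::0;1;2;3;4;5;6;7;8;9;10;11;12];[::3;12;5;2;11;6;4;8;9;1;0;10;7];[::10;12;1;3;7;5;8;11;9;6;4;0;2];[::6;12;2;7;10;3;11;1;9;0;8;5;4]];
 [::[::0;1;2;3;4;5;6;7;8;9;10;11;12];[::12;6;3;9;2;4;10;0;5;1;7;8;11];[::1;10;3;5;11;4;6;9;7;2;8;0;12];[::2;7;3;12;4;1;8;9;0;6;5;11;10]];
 [::[::0;1;2;3;4;5;6;7;8;9;10;11;12];[::2;10;0;5;7;3;9;8;4;11;12;1;6];[::5;11;0;4;9;7;12;3;8;2;6;1;10];[::10;6;8;2;0;12;9;1;11;5;3;7;4]];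
 [::[::0;1;2;3;4;5;6;7;8;9;10;11;12];[::1;12;11;4;2;5;10;9;7;3;0;8;6];[::10;4;0;5;12;9;8;11;3;7;1;2;6];[::6;3;9;0;11;2;7;12;4;8;1;10;5]];
 [::[::0;1;2;3;4;5;6;7;8;9;10;11;12];[::12;7;4;11;0;6;1;3;9;5;8;2;10];[::10;9;5;12;6;4;2;7;1;11;3;8;0];[::6;8;9;7;11;12;4;10;3;1;0;5;2]];
 [::[::0;1;2;3;4;5;6;7;8;9;10;11;12];[::11;9;2;10;12;0;7;1;4;8;3;6;5];[::9;1;6;2;8;12;11;5;7;0;3;10;4];[::2;12;6;3;10;4;8;1;11;5;9;7;0]];
 [::[::0;1;2;3;4;5;6;7;8;9;10;11;12];[::6;12;7;9;0;10;8;4;1;11;2;3;5];[::12;5;1;7;2;11;6;3;8;9;0;4;10];[::3;12;10;11;9;6;2;0;7;1;4;8;5]];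
 [::[::0;1;2;3;4;5;6;7;8;9;10;11;12];[::6;4;2;11;0;7;5;8;1;10;9;3;12];[::6;0;4;9;12;3;11;5;2;1;8;7;10];[::11;6;3;0;2;12;1;10;9;5;7;8;4]];
 [::[::0;1;2;3;4;5;6;7;8;9;10;11;12];[::6;8;1;5;12;9;4;2;0;10;7;3;11];[::1;9;7;5;0;12;4;8;3;11;2;6;10];[::8;9;6;4;1;7;0;10;12;11;5;2;3]];
 [::[::0;1;2;3;4;5;6;7;8;9;10;11;12];[::7;11;4;1;9;6;10;3;12;0;2;5;8];[::4;10;8;9;2;6;1;11;12;3;5;7;0];[::8;3;9;12;2;10;7;0;4;11;5;6;1]];
 [::[::0;1;2;3;4;5;6;7;8;9;10;11;12];[::7;5;9;10;4;8;6;12;3;1;11;2;0];[::11;0;10;2;4;9;12;1;3;6;7;8;5];[::9;2;11;1;6;0;7;10;8;3;4;12;5]];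
 [::[::0;1;2;3;4;5;6;7;8;9;10;11;12];[::4;0;2;8;11;5;10;6;9;12;3;7;1];[::4;1;9;12;3;5;7;10;2;8;6;11;0];[::9;5;8;12;7;0;10;1;11;3;4;2;6]];
 [::[::0;1;2;3;4;5;6;7;8;9;10;11;12];[::10;3;7;1;9;8;12;0;5;4;2;11;6];[::7;5;2;4;12;3;1;10;9;6;0;11;8];[::9;0;6;8;10;4;7;12;2;1;5;11;3]];
 [::[::0;1;2;3;4;5;6;7;8;9;10;11;12];[::3;11;10;12;1;4;7;5;9;6;8;2;0];[::3;12;2;6;10;9;8;11;0;5;1;4;7];[::12;0;2;9;11;1;5;10;7;4;6;8;3]];
 [::[::0;1;2;3;4;5;6;7;8;9;10;11;12];[::6;9;7;2;4;0;3;5;1;8;11;12;10];[::4;12;10;0;5;8;9;2;11;7;3;6;1];[::3;8;12;7;11;0;6;4;10;1;2;5;9]];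
 [::[::0;1;2;3;4;5;6;7;8;9;10;11;12];[::4;8;3;1;7;2;12;9;10;11;6;5;0];[::2;10;8;5;0;3;6;9;11;1;7;12;4];[::12;3;5;2;0;7;11;4;1;9;10;8;6]];
 [::[::0;1;2;3;4;5;6;7;8;9;10;11;12];[::12;7;11;8;10;0;6;9;2;5;3;1;4];[::9;7;1;6;11;3;0;12;8;4;5;10;2];[::5;9;12;6;3;10;7;4;2;1;0;11;8]];
 [::[::0;1;2;3;4;5;6;7;8;9;10;11;12];[::8;10;1;9;0;11;5;3;6;4;2;12;7];[::0;4;8;12;2;10;5;1;6;3;9;11;7];[::4;12;5;7;2;8;11;3;1;9;6;0;10]];
 [::[::0;1;2;3;4;5;6;7;8;9;10;11;12];[::0;3;7;10;12;6;8;1;5;4;9;2;11];[::10;2;6;3;8;5;11;12;0;9;7;4;1];[::10;8;4;0;9;5;2;11;3;1;12;7;6]];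
 [::[::0;1;2;3;4;5;6;7;8;9;10;11;12];[::0;9;10;11;12;7;4;2;5;3;6;8;1];[::3;8;12;0;4;1;10;7;9;6;5;2;11];[::2;9;11;8;10;3;0;6;12;1;7;4;5]];
 [::[::0;1;2;3;4;5;6;7;8;9;10;11;12];[::10;6;11;5;0;3;7;12;8;2;9;1;4];[::6;2;7;10;0;12;11;4;9;1;5;3;8];[::9;5;10;4;12;3;1;11;7;2;6;0;8]];
 [::[::0;1;2;3;4;5;6;7;8;9;10;11;12];[::2;7;10;0;12;9;8;1;6;5;3;11;4];[::3;9;4;7;12;11;10;8;6;2;5;0;1];[::5;10;9;0;7;3;11;1;12;4;6;8;2]];
 [::[::0;1;2;3;4;5;6;7;8;9;10;11;12];[::3;1;8;2;4;9;5;0;10;6;11;12;7];[::0;4;11;9;6;12;3;7;2;1;5;8;10];[::7;5;1;10;11;6;4;12;0;2;9;8;3]];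
 [::[::0;1;2;3;4;5;6;7;8;9;10;11;12];[::9;7;10;2;8;1;6;12;4;11;0;5;3];[::9;6;11;0;12;7;3;5;1;2;10;8;4];[::4;8;3;12;1;7;5;10;6;11;2;9;0]];
 [::[::0;1;2;3;4;5;6;7;8;9;10;11;12];[::9;5;3;1;12;8;2;6;11;10;4;7;0];[::2;5;12;11;1;9;3;7;0;6;8;10;4];[::12;3;8;6;10;7;5;11;2;1;9;0;4]];
 [::[::0;1;2;3;4;5;6;7;8;9;10;11;12];[::3;10;1;4;8;11;7;12;5;0;9;6;2];[::10;5;9;11;12;8;2;0;6;3;7;4;1];[::3;9;7;2;12;0;4;6;11;5;8;1;10]];
 [::[::0;1;2;3;4;5;6;7;8;9;10;11;12];[::4;6;2;11;0;10;9;1;7;12;3;5;8];[::3;0;7;5;2;9;4;11;10;12;1;8;6];[::1;11;5;3;9;8;2;7;12;4;0;10;6]];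
 [::[::0;1;2;3;4;5;6;7;8;9;10;11;12];[::1;7;0;2;5;8;11;3;9;6;4;12;10];[::9;2;4;12;5;11;0;3;7;1;6;8;10];[::6;3;12;7;2;11;4;9;8;0;1;5;10]];
 [::[::0;1;2;3;4;5;6;7;8;9;10;11;12];[::9;7;0;3;8;11;10;12;1;2;4;6;5];[::12;5;2;7;1;3;11;0;6;9;4;10;8];[::9;4;10;0;2;11;12;7;3;8;5;1;6]];
 [::[::0;1;2;3;4;5;6;7;8;9;10;11;12];[::11;4;8;1;10;0;12;5;3;7;2;6;9];[::0;6;10;5;1;7;11;9;2;4;3;8;12];[::6;9;0;4;12;8;10;11;2;5;1;7;3]];
 [::[::0;1;2;3;4;5;6;7;8;9;10;11;12];[::9;2;5;10;3;11;7;1;4;6;8;0;12];[::8;5;1;12;3;0;2;4;11;9;7;10;6];[::11;5;0;9;6;1;8;10;12;7;3;4;2]];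
 [::[::0;1;2;3;4;5;6;7;8;9;10;11;12];[::9;3;8;11;10;6;1;12;5;2;0;4;7];[::2;4;12;7;11;1;5;0;6;8;9;10;3];[::3;12;10;8;5;2;7;9;6;0;11;1;4]];
 [::[::0;1;2;3;4;5;6;7;8;9;10;11;12];[::9;10;3;8;1;7;11;6;12;0;2;5;4];[::11;3;12;8;4;1;10;2;0;9;5;7;6];[::7;5;8;2;6;9;4;10;12;11;0;1;3]];
 [::[::0;1;2;3;4;5;6;7;8;9;10;11;12];[::0;12;6;1;9;11;3;8;2;4;10;5;7];[::6;2;5;12;4;9;10;7;0;11;8;3;1];[::6;9;5;11;7;4;10;0;3;8;1;12;2]];
 [::[::0;1;2;3;4;5;6;7;8;9;10;11;12];[::5;12;3;9;7;1;10;11;2;4;8;0;6];[::6;3;8;2;9;0;7;12;11;5;10;1;4];[::2;6;1;3;7;10;8;9;4;12;0;11;5]];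
 [::[::0;1;2;3;4;5;6;7;8;9;10;11;12];[::1;9;10;5;3;7;11;4;8;6;2;0;12];[::2;7;10;4;0;3;12;1;6;11;9;8;5];[::5;12;8;2;10;6;11;9;0;1;4;3;7]];
 [::[::0;1;2;3;4;5;6;7;8;9;10;11;12];[::5;8;12;6;10;4;9;1;3;0;2;7;11];[::10;5;1;8;6;11;2;4;12;9;3;7;0];[::0;12;2;10;8;3;11;9;5;1;4;6;7]];
 [::[::0;1;2;3;4;5;6;7;8;9;10;11;12];[::3;8;12;0;11;4;9;6;1;2;10;5;7];[::12;7;2;5;8;9;0;3;6;11;4;10;1];[::0;7;10;12;4;1;8;11;6;5;2;9;3]];
 [::[::0;1;2;3;4;5;6;7;8;9;10;11;12];[::4;7;0;11;10;6;8;9;2;1;3;12;5];[::11;1;10;9;6;0;3;8;4;7;2;5;12];[::5;12;3;1;9;4;6;2;11;10;0;8;7]];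
 [::[::0;1;2;3;4;5;6;7;8;9;10;11;12];[::11;9;7;4;2;12;0;6;10;1;5;8;3];[::1;5;10;0;11;2;8;4;9;3;7;6;12];[::4;11;12;1;8;3;6;9;10;7;5;0;2]];
 [::[::0;1;2;3;4;5;6;7;8;9;10;11;12];[::7;3;11;1;6;8;10;9;4;12;5;2;0];[::12;4;11;8;3;1;5;10;0;2;9;7;6];[::0;3;10;4;8;5;12;11;2;6;1;9;7]];
 [::[::0;1;2;3;4;5;6;7;8;9;10;11;12];[::9;3;1;10;8;6;12;5;11;2;4;7;0];[::10;2;5;9;8;3;12;0;7;11;6;4;1];[::11;2;6;10;0;3;5;1;4;7;12;8;9]];
 [::[::0;1;2;3;4;5;6;7;8;9;10;11;12];[::11;4;0;10;7;1;3;9;5;8;12;6;2];[::4;12;6;1;5;8;3;10;2;7;0;11;9];[::3;12;1;4;9;6;8;11;7;5;2;10;0]];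
 [::[::0;1;2;3;4;5;6;7;8;9;10;11;12];[::5;7;2;6;11;4;10;3;12;1;0;8;9];[::9;3;1;6;12;0;11;10;8;2;7;4;5];[::1;7;10;9;5;3;8;4;12;0;11;6;2]];
 [::[::0;1;2;3;4;5;6;7;8;9;10;11;12];[::2;7;5;3;8;1;9;6;12;11;10;0;4];[::0;5;2;11;6;3;9;4;10;7;1;12;8];[::8;6;1;3;12;7;4;11;9;2;0;10;5]];
 [::[::0;1;2;3;4;5;6;7;8;9;10;11;12];[::0;3;1;4;6;11;10;12;7;5;8;9;2];[::12;5;7;9;8;10;0;6;2;11;3;1;4];[::0;12;1;5;10;6;3;9;11;4;7;2;8]];
 [::[::0;1;2;3;4;5;6;7;8;9;10;11;12];[::2;8;9;5;0;6;3;1;7;11;12;10;4];[::11;4;7;5;1;10;6;12;9;8;2;3;0];[::10;7;9;3;8;12;1;6;11;4;5;0;2]];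
 [::[::0;1;2;3;4;5;6;7;8;9;10;11;12];[::10;0;4;9;7;12;1;8;6;11;5;2;3];[::11;3;1;5;10;2;6;12;9;0;7;8;4];[::4;8;11;2;5;3;6;1;7;10;12;9;0]];
 [::[::0;1;2;3;4;5;6;7;8;9;10;11;12];[::1;9;2;7;5;11;3;12;10;8;4;0;6];[::9;7;11;2;0;10;3;1;12;5;4;6;8];[::7;3;9;10;6;8;12;11;1;4;5;2;0]];
 [::[::0;1;2;3;4;5;6;7;8;9;10;11;12];[::12;7;4;0;10;9;3;11;5;8;6;2;1];[::10;7;0;5;8;9;1;4;12;6;3;11;2];[::5;7;9;12;11;6;2;8;10;4;0;1;3]];
 [::[::0;1;2;3;4;5;6;7;8;9;10;11;12];[::7;10;11;8;3;6;2;9;1;4;5;12;0];[::2;4;11;5;9;12;10;6;8;1;7;3;0];[::0;11;9;10;1;3;7;12;5;2;4;8;6]];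
 [::[::0;1;2;3;4;5;6;7;8;9;10;11;12];[::2;10;4;7;5;1;12;3;11;0;8;6;9];[::11;8;12;7;2;0;5;9;10;1;4;3;6];[::6;4;8;1;11;5;3;0;10;12;7;9;2]];
 [::[::0;1;2;3;4;5;6;7;8;9;10;11;12];[::2;10;11;3;12;7;1;5;8;0;9;4;6];[::6;8;10;12;11;5;7;9;4;1;0;2;3];[::6;2;7;4;1;10;5;0;3;9;12;8;11]];
 [::[::0;1;2;3;4;5;6;7;8;9;10;11;12];[::11;4;2;0;5;7;1;3;9;12;8;6;10];[::10;0;4;9;5;2;11;3;6;7;12;1;8];[::3;0;6;4;7;2;9;1;12;5;11;8;10]];
 [::[::0;1;2;3;4;5;6;7;8;9;10;11;12];[::11;2;9;10;3;8;4;0;7;5;12;1;6];[::12;10;1;4;6;9;11;0;5;2;3;8;7];[::5;1;12;2;8;6;0;9;7;11;3;10;4]];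
 [::[::0;1;2;3;4;5;6;7;8;9;10;11;12];[::3;8;1;6;10;5;2;12;0;7;4;9;11];[::11;1;10;9;5;7;4;2;8;12;0;6;3];[::11;2;9;7;0;10;12;6;4;5;8;3;1]];
 [::[::0;1;2;3;4;5;6;7;8;9;10;11;12];[::4;11;8;5;1;10;3;9;7;0;2;6;12];[::9;1;3;0;4;10;2;8;12;5;7;11;6];[::11;12;7;1;4;2;5;0;10;6;8;3;9]];
 [::[::0;1;2;3;4;5;6;7;8;9;10;11;12];[::1;7;10;9;0;4;12;2;11;6;3;8;5];[::4;10;3;1;8;6;2;0;11;12;5;9;7];[::5;8;12;11;6;3;9;7;0;10;4;1;2]];
 [::[::0;1;2;3;4;5;6;7;8;9;10;11;12];[::5;10;4;12;3;8;2;6;9;1;0;11;7];[::10;11;1;7;3;6;4;2;9;0;5;12;8];[::6;0;9;3;5;12;7;10;8;2;11;1;4]];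
 [::[::0;1;2;3;4;5;6;7;8;9;10;11;12];[::12;11;10;7;9;3;5;8;4;2;1;6;0];[::2;11;3;6;4;9;12;7;5;8;0;1;10];[::5;9;8;2;4;7;0;6;1;12;11;10;3]];
 [::[::0;1;2;3;4;5;6;7;8;9;10;11;12];[::11;2;6;3;8;4;10;7;0;1;12;9;5];[::0;2;7;4;1;9;8;5;12;11;6;10;3];[::11;10;5;1;3;7;12;4;9;2;8;6;0]];
 [::[::0;1;2;3;4;5;6;7;8;9;10;11;12];[::1;4;2;7;3;12;10;0;5;11;9;6;8];[::5;7;12;9;10;6;11;4;8;1;3;0;2];[::12;6;9;0;11;5;2;8;1;10;7;4;3]];
 [::[::0;1;2;3;4;5;6;7;8;9;10;11;12];[::8;5;7;0;12;4;2;11;3;6;10;1;9];[::4;0;3;7;11;5;1;10;6;8;2;9;12];[::0;5;12;11;1;7;10;2;9;6;4;3;8]];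
 [::[::0;1;2;3;4;5;6;7;8;9;10;11;12];[::4;6;8;5;3;1;12;11;0;2;7;10;9];[::7;12;0;10;3;9;6;1;4;5;8;11;2];[::10;6;12;9;4;11;2;5;1;3;7;0;8]];
 [::[::0;1;2;3;4;5;6;7;8;9;10;11;12];[::6;4;8;5;3;11;7;10;0;2;9;1;12];[::10;1;12;7;4;9;6;11;5;8;0;3;2];[::12;2;6;3;7;5;0;9;11;10;1;4;8]];
 [::[::0;1;2;3;4;5;6;7;8;9;10;11;12];[::9;11;2;0;5;12;10;8;6;1;7;3;4];[::1;8;5;2;7;10;11;4;12;3;9;6;0];[::3;9;4;2;12;11;6;1;5;0;8;10;7]];
 [::[::0;1;2;3;4;5;6;7;8;9;10;11;12];[::7;1;12;3;8;2;9;10;11;6;0;5;4];[::11;4;0;5;8;12;2;7;9;10;3;6;1];[::11;5;1;4;7;0;10;6;12;2;9;8;3]];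
 [::[::0;1;2;3;4;5;6;7;8;9;10;11;12];[::11;6;0;3;10;5;1;12;2;4;9;8;7];[::5;11;3;9;12;6;8;1;7;4;2;0;10];[::11;1;10;6;4;9;5;8;12;3;0;7;2]];
 [::[::0;1;2;3;4;5;6;7;8;9;10;11;12];[::12;8;10;2;7;11;4;9;0;5;1;3;6];[::10;9;12;3;11;1;8;2;5;0;7;4;6];[::0;7;5;12;10;4;1;3;6;8;2;11;9]];
 [::[::0;1;2;3;4;5;6;7;8;9;10;11;12];[::4;2;7;10;9;5;1;6;11;3;8;12;0];[::5;2;0;9;7;1;12;3;8;4;6;10;11];[::12;10;11;0;3;6;9;8;4;5;7;1;2]];
 [::[::0;1;2;3;4;5;6;7;8;9;10;11;12];[::5;10;7;9;12;8;6;1;11;0;4;2;3];[::4;0;11;12;3;5;9;8;2;7;10;6;1];[::3;11;9;2;12;4;1;10;6;7;0;5;8]];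
 [::[::0;1;2;3;4;5;6;7;8;9;10;11;12];[::10;12;0;4;9;7;5;8;6;1;11;3;2];[::8;3;0;6;9;12;11;2;10;4;5;1;7];[::2;4;8;11;3;5;1;9;0;7;6;12;10]];
 [::[::0;1;2;3;4;5;6;7;8;9;10;11;12];[::11;8;3;5;2;12;6;4;7;10;9;0;1];[::11;12;4;2;9;0;3;7;5;8;1;6;10];[::10;9;5;0;12;3;1;6;2;4;7;8;11]];
 [::[::0;1;2;3;4;5;6;7;8;9;10;11;12];[::7;1;5;2;6;12;3;0;9;4;11;10;8];[::2;4;12;8;11;3;1;6;10;5;9;7;0];[::10;8;1;9;3;6;0;12;11;7;5;4;2]];
 [::[::0;1;2;3;4;5;6;7;8;9;10;11;12];[::12;11;4;6;2;8;9;5;7;3;1;0;10];[::12;0;2;4;9;10;6;11;1;8;7;3;5];[::5;12;2;11;10;8;3;7;1;0;6;4;9]];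
 [::[::0;1;2;3;4;5;6;7;8;9;10;11;12];[::7;1;4;8;6;10;5;0;9;11;3;12;2];[::12;2;6;11;0;4;10;3;1;5;8;9;7];[::4;6;1;8;10;9;2;7;11;3;12;5;0]];
 [::[::0;1;2;3;4;5;6;7;8;9;10;11;12];[::4;0;7;12;6;11;5;9;1;2;10;3;8];[::1;7;5;2;11;3;8;4;12;6;10;9;0];[::5;3;12;0;11;7;2;9;8;10;6;1;4]];
 [::[::0;1;2;3;4;5;6;7;8;9;10;11;12];[::4;7;3;9;12;1;11;6;2;5;0;8;10];[::5;3;11;10;8;4;6;9;0;1;7;12;2];[::7;0;11;5;12;6;3;10;1;2;9;4;8]];
 [::[::0;1;2;3;4;5;6;7;8;9;10;11;12];[::9;8;5;3;6;2;12;0;7;11;4;1;10];[::8;4;1;7;10;9;0;6;11;3;2;12;5];[::10;11;3;9;12;4;2;7;5;0;1;6;8]];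
 [::[::0;1;2;3;4;5;6;7;8;9;10;11;12];[::10;3;6;4;11;2;7;12;8;1;5;0;9];[::12;5;0;11;7;4;8;9;2;3;1;6;10];[::5;11;8;1;6;0;4;10;2;9;7;12;3]];
 [::[::0;1;2;3;4;5;6;7;8;9;10;11;12];[::4;8;6;3;11;0;2;12;9;1;5;7;10];[::0;5;1;4;6;10;2;9;3;12;7;8;11];[::1;7;2;6;12;8;5;10;11;3;4;9;0]];
 [::[::0;1;2;3;4;5;6;7;8;9;10;11;12];[::2;5;1;11;8;12;9;4;6;3;0;7;10];[::4;2;10;9;7;3;8;5;0;12;6;1;11];[::10;6;12;0;9;5;7;4;11;1;2;3;8]];
 [::[::0;1;2;3;4;5;6;7;8;9;10;11;12];[::1;12;4;0;11;8;9;5;10;2;7;3;6];[::2;4;10;7;11;9;3;1;6;5;8;12;0];[::3;11;1;5;2;0;9;7;12;10;8;6;4]];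
 [::[::0;1;2;3;4;5;6;7;8;9;10;11;12];[::12;7;2;9;6;8;1;5;10;0;11;3;4];[::8;4;1;7;5;11;2;6;3;12;0;10;9];[::12;1;10;9;11;7;0;3;5;2;4;6;8]];
 [::[::0;1;2;3;4;5;6;7;8;9;10;11;12];[::10;6;9;4;8;3;11;12;1;2;7;0;5];[::0;2;9;3;7;1;4;10;11;12;5;8;6];[::4;2;6;3;10;5;7;0;12;1;11;8;9]];
 [::[::0;1;2;3;4;5;6;7;8;9;10;11;12];[::5;3;7;2;9;6;10;12;0;8;11;4;1];[::5;8;11;10;7;0;9;12;1;2;3;4;6];[::11;0;4;7;12;2;6;3;1;5;10;9;8]];
 [::[::0;1;2;3;4;5;6;7;8;9;10;11;12];[::8;10;6;3;9;4;7;5;11;1;12;0;2];[::11;9;12;7;3;5;10;4;2;8;6;1;0];[::3;12;1;5;0;7;11;4;8;2;9;6;10]];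
 [::[::0;1;2;3;4;5;6;7;8;9;10;11;12];[::3;8;9;0;4;10;7;11;5;2;6;12;1];[::7;3;0;10;12;4;11;2;5;6;8;9;1];[::2;0;6;3;1;8;11;10;9;4;5;7;12]];
 [::[::0;1;2;3;4;5;6;7;8;9;10;11;12];[::9;6;1;10;7;4;11;0;3;5;2;12;8];[::8;11;12;6;3;5;10;2;4;9;0;7;1];[::12;0;6;2;5;7;11;9;10;1;3;8;4]];
 [::[::0;1;2;3;4;5;6;7;8;9;10;11;12];[::3;0;10;8;5;11;12;1;9;7;2;6;4];[::4;11;6;12;7;10;5;2;9;8;3;0;1];[::4;12;8;9;6;0;7;11;2;1;5;10;3]];
 [::[::0;1;2;3;4;5;6;7;8;9;10;11;12];[::11;6;9;0;2;8;4;7;10;3;12;5;1];[::12;11;9;8;5;7;2;6;3;1;0;10;4];[::12;2;10;6;1;5;3;7;9;0;11;4;8]];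
 [::[::0;1;2;3;4;5;6;7;8;9;10;11;12];[::5;1;8;6;2;12;11;4;0;10;3;9;7];[::9;0;2;10;4;8;5;11;7;1;3;6;12];[::0;12;5;9;2;7;4;1;11;10;6;8;3]];
 [::[::0;1;2;3;4;5;6;7;8;9;10;11;12];[::11;4;12;5;2;7;1;8;3;9;0;6;10];[::11;0;4;1;9;5;7;10;2;8;3;12;6];[::9;8;10;11;5;3;0;7;4;12;1;2;6]];
 [::[::0;1;2;3;4;5;6;7;8;9;10;11;12];[::12;6;10;9;0;7;5;3;1;11;8;2;4];[::1;4;2;12;10;3;11;8;6;0;5;7;9];[::0;11;9;7;3;8;12;4;10;1;5;6;2]];
 [::[::0;1;2;3;4;5;6;7;8;9;10;11;12];[::12;8;11;2;4;7;9;0;3;10;6;1;5];[::0;2;5;3;11;9;1;12;7;8;10;6;4];[::12;2;8;1;5;7;11;4;10;3;6;9;0]];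
 [::[::0;1;2;3;4;5;6;7;8;9;10;11;12];[::11;7;5;12;3;9;6;1;4;8;10;0;2];[::11;10;9;8;1;3;7;12;0;4;5;2;6];[::12;4;8;5;11;9;0;3;6;1;2;10;7]];
 [::[::0;1;2;3;4;5;6;7;8;9;10;11;12];[::3;6;12;4;11;0;5;1;8;2;7;10;9];[::9;3;10;7;0;4;8;2;11;1;12;5;6];[::7;9;6;8;5;10;11;3;12;4;1;0;2]];
 [::[::0;1;2;3;4;5;6;7;8;9;10;11;12];[::5;0;4;10;12;3;7;2;11;1;6;8;9];[::0;6;12;7;1;8;5;3;10;11;9;2;4];[::5;7;9;1;4;11;3;8;2;6;10;12;0]];
 [::[::0;1;2;3;4;5;6;7;8;9;10;11;12];[::5;11;8;1;7;9;2;4;10;6;0;3;12];[::9;0;7;11;6;1;3;8;4;2;5;10;12];[::10;11;4;7;2;12;6;9;8;5;1;0;3]];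
 [::[::0;1;2;3;4;5;6;7;8;9;10;11;12];[::4;11;10;1;6;0;5;9;12;2;3;7;8];[::11;1;3;0;2;8;10;7;12;5;9;4;6];[::4;0;9;11;3;12;1;8;6;10;7;5;2]];
 [::[::0;1;2;3;4;5;6;7;8;9;10;11;12];[::1;10;8;5;9;3;6;12;11;7;2;4;0];[::8;4;10;6;2;9;1;7;11;5;3;12;0];[::12;9;6;4;0;10;5;3;1;7;8;2;11]];
 [::[::0;1;2;3;4;5;6;7;8;9;10;11;12];[::1;8;5;0;3;10;7;2;12;6;9;4;11];[::3;5;7;12;11;2;9;1;6;0;4;10;8];[::11;0;10;8;12;9;5;2;4;7;1;6;3]];
 [::[::0;1;2;3;4;5;6;7;8;9;10;11;12];[::9;4;1;3;11;7;12;8;5;6;10;2;0];[::11;1;5;7;2;0;10;6;9;3;12;8;4];[::4;2;8;1;9;0;3;10;12;7;11;6;5]];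
 [::[::0;1;2;3;4;5;6;7;8;9;10;11;12];[::0;9;2;4;1;11;7;12;10;6;8;3;5];[::8;5;1;3;12;9;4;10;2;7;11;0;6];[::11;5;12;1;9;6;10;8;3;4;2;7;0]];
 [::[::0;1;2;3;4;5;6;7;8;9;10;11;12];[::4;2;5;9;8;6;10;1;12;7;0;3;11];[::11;12;5;7;10;3;1;4;6;2;8;0;9];[::2;11;5;0;7;9;3;12;10;1;6;4;8]];
 [::[::0;1;2;3;4;5;6;7;8;9;10;11;12];[::0;10;8;2;7;9;11;5;12;6;4;3;1];[::6;2;5;3;1;4;11;8;12;0;9;10;7];[::7;3;9;8;5;10;4;12;1;0;6;11;2]];
 [::[::0;1;2;3;4;5;6;7;8;9;10;11;12];[::11;4;12;1;3;5;8;2;10;0;9;7;6];[::12;3;7;10;0;2;6;4;9;11;5;8;1];[::4;1;11;9;6;0;7;12;10;8;3;2;5]];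
 [::[::0;1;2;3;4;5;6;7;8;9;10;11;12];[::11;9;4;1;3;7;12;5;10;2;0;8;6];[::6;10;0;12;9;3;11;8;1;5;2;4;7];[::0;6;12;10;8;2;7;5;9;1;3;11;4]];
 [::[::0;1;2;3;4;5;6;7;8;9;10;11;12];[::2;0;3;11;1;10;6;8;12;4;5;7;9];[::11;8;1;9;6;12;0;5;7;10;2;3;4];[::3;5;8;10;0;4;7;12;9;1;11;6;2]];
 [::[::0;1;2;3;4;5;6;7;8;9;10;11;12];[::0;5;12;7;4;9;10;8;2;3;11;6;1];[::12;8;4;0;10;1;11;3;6;5;7;2;9];[::7;3;12;10;2;11;6;0;9;8;4;5;1]];
 [::[::0;1;2;3;4;5;6;7;8;9;10;11;12];[::1;7;3;5;0;6;2;12;8;10;11;4;9];[::6;9;4;10;0;12;3;11;8;7;5;1;2];[::8;10;1;4;11;0;2;9;5;12;6;7;3]];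
 [::[::0;1;2;3;4;5;6;7;8;9;10;11;12];[::4;12;11;8;9;3;0;10;1;6;5;7;2];[::7;9;2;11;6;12;10;4;0;5;8;3;1];[::6;3;7;2;0;5;11;4;9;8;1;12;10]];
 [::[::0;1;2;3;4;5;6;7;8;9;10;11;12];[::9;4;10;2;7;12;3;11;1;6;8;0;5];[::4;6;2;8;10;7;9;0;11;12;1;3;5];[::5;12;6;1;10;3;0;2;9;4;7;8;11]];
 [::[::0;1;2;3;4;5;6;7;8;9;10;11;12];[::11;3;12;9;4;1;7;2;8;5;0;6;10];[::2;0;3;10;5;8;9;11;6;7;12;4;1];[::6;10;2;11;5;0;7;12;8;4;3;1;9]];
 [::[::0;1;2;3;4;5;6;7;8;9;10;11;12];[::4;7;10;9;5;3;1;12;0;8;11;6;2];[::1;4;6;10;3;12;11;2;9;7;8;5;0];[::7;2;8;9;11;0;10;12;5;3;6;4;1]];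
 [::[::0;1;2;3;4;5;6;7;8;9;10;11;12];[::1;10;4;9;5;2;0;6;3;8;7;12;11];[::9;10;5;1;6;11;12;4;0;7;3;8;2];[::11;9;6;4;2;8;5;12;7;10;0;1;3]];
 [::[::0;1;2;3;4;5;6;7;8;9;10;11;12];[::2;4;7;1;9;11;8;3;6;10;12;5;0];[::11;1;12;3;5;9;10;0;2;7;8;6;4];[::6;0;5;11;4;10;3;1;8;12;7;9;2]];
 [::[::0;1;2;3;4;5;6;7;8;9;10;11;12];[::9;12;2;5;10;6;1;11;8;7;3;4;0];[::9;7;10;11;5;12;0;6;4;2;1;8;3];[::8;4;10;3;7;0;11;6;2;1;12;9;5]];
 [::[::0;1;2;3;4;5;6;7;8;9;10;11;12];[::2;12;3;5;11;6;9;0;4;1;10;8;7];[::10;3;7;4;8;9;12;11;0;2;6;5;1];[::5;1;3;8;11;2;10;6;12;7;9;0;4]];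
 [::[::0;1;2;3;4;5;6;7;8;9;10;11;12];[::3;9;12;7;5;1;6;4;0;2;8;10;11];[::6;0;11;9;7;4;8;5;10;1;3;12;2];[::6;8;12;0;2;10;3;1;9;7;11;4;5]];
 [::[::0;1;2;3;4;5;6;7;8;9;10;11;12];[::6;8;12;9;5;7;4;10;11;1;0;3;2];[::10;0;5;12;11;4;8;2;6;3;1;9;7];[::9;7;10;1;6;4;12;2;11;3;8;0;5]];
 [::[::0;1;2;3;4;5;6;7;8;9;10;11;12];[::1;3;12;7;0;10;6;11;4;9;2;5;8];[::11;2;7;1;8;9;10;12;5;4;3;6;0];[::3;10;5;0;12;11;8;6;9;2;1;4;7]];
 [::[::0;1;2;3;4;5;6;7;8;9;10;11;12];[::5;3;9;7;10;1;12;6;8;2;0;4;11];[::4;0;12;8;9;10;6;3;11;7;2;1;5];[::6;2;9;4;7;12;11;5;0;8;1;10;3]];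
 [::[::0;1;2;3;4;5;6;7;8;9;10;11;12];[::1;8;6;3;12;9;2;11;10;5;7;4;0];[::9;10;6;2;12;0;7;3;8;4;11;5;1];[::9;5;2;10;0;4;7;12;6;3;1;11;8]];
 [::[::0;1;2;3;4;5;6;7;8;9;10;11;12];[::3;9;12;7;11;5;2;10;8;6;0;1;4];[::6;11;2;0;5;9;7;10;4;12;3;8;1];[::12;5;3;11;9;0;6;10;1;7;2;4;8]];
 [::[::0;1;2;3;4;5;6;7;8;9;10;11;12];[::11;3;12;9;5;0;7;4;6;10;2;8;1];[::10;9;8;6;2;12;5;1;11;4;0;7;3];[::8;11;4;2;7;10;1;6;3;12;5;0;9]];
 [::[::0;1;2;3;4;5;6;7;8;9;10;11;12];[::9;8;5;12;2;0;4;11;10;7;3;1;6];[::4;6;3;10;1;5;11;7;2;0;9;12;8];[::8;6;10;0;9;7;12;3;11;4;5;1;2]];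
 [::[::0;1;2;3;4;5;6;7;8;9;10;11;12];[::4;10;5;0;7;1;6;9;8;2;12;3;11];[::11;9;1;12;2;4;6;8;3;0;7;5;10];[::9;0;6;3;5;11;1;8;10;4;2;12;7]];
 [::[::0;1;2;3;4;5;6;7;8;9;10;11;12];[::0;5;8;9;10;4;12;1;3;2;6;7;11];[::2;9;6;12;7;10;3;5;11;1;4;0;8];[::7;0;9;12;11;10;6;2;4;3;1;8;5]];
 [::[::0;1;2;3;4;5;6;7;8;9;10;11;12];[::4;11;3;0;5;2;8;10;1;9;12;6;7];[::8;5;1;9;2;4;7;12;11;3;0;6;10];[::8;1;11;0;2;12;5;9;4;3;7;10;6]];
 [::[::0;1;2;3;4;5;6;7;8;9;10;11;12];[::0;10;7;1;6;8;11;12;5;3;9;2;4];[::0;9;3;8;12;10;11;4;2;7;5;6;1];[::0;3;7;5;2;12;9;6;11;8;1;4;10]];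
 [::[::0;1;2;3;4;5;6;7;8;9;10;11;12];[::6;11;2;5;1;9;3;0;12;4;8;7;10];[::5;10;1;3;7;9;2;8;12;11;0;4;6];[::2;6;9;8;3;5;0;4;10;7;12;11;1]];
 [::[::0;1;2;3;4;5;6;7;8;9;10;11;12];[::1;6;2;5;11;0;10;9;12;3;4;8;7];[::9;11;8;5;12;7;3;1;4;0;2;6;10];[::2;8;3;11;6;10;7;9;0;1;4;5;12]];
 [::[::0;1;2;3;4;5;6;7;8;9;10;11;12];[::6;2;12;9;10;3;0;7;4;1;8;11;5];[::1;8;5;0;9;6;11;7;3;2;4;12;10];[::4;1;5;10;8;3;6;0;2;11;9;7;12]];
 [::[::0;1;2;3;4;5;6;7;8;9;10;11;12];[::12;10;8;11;4;6;9;5;2;3;0;1;7];[::0;7;1;5;3;9;2;8;12;4;11;10;6];[::7;10;3;6;8;9;4;12;11;5;1;0;2]];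
 [::[::0;1;2;3;4;5;6;7;8;9;10;11;12];[::0;2;5;9;7;1;12;8;4;10;6;11;3];[::0;3;5;1;8;2;11;4;9;6;12;10;7];[::7;0;5;11;1;9;10;6;3;8;12;4;2]];
 [::[::0;1;2;3;4;5;6;7;8;9;10;11;12];[::9;7;5;8;12;0;10;4;1;2;11;6;3];[::11;8;1;7;3;6;10;2;12;0;4;5;9];[::5;0;9;12;7;4;11;1;3;8;6;10;2]];
 [::[::0;1;2;3;4;5;6;7;8;9;10;11;12];[::2;5;12;11;9;8;1;7;4;3;10;0;6];[::9;10;0;4;6;8;12;1;5;2;7;11;3];[::8;5;10;7;9;2;11;0;3;6;1;12;4]];
 [::[::0;1;2;3;4;5;6;7;8;9;10;11;12];[::1;9;2;0;6;4;11;10;12;7;3;5;8];[::7;0;11;1;5;8;3;10;2;12;4;6;9];[::9;11;12;0;3;6;8;1;7;2;5;4;10]];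
 [::[::0;1;2;3;4;5;6;7;8;9;10;11;12];[::9;0;6;8;2;12;11;10;1;4;3;5;7];[::4;0;12;6;10;5;7;11;9;1;8;3;2];[::5;0;11;1;4;7;9;12;3;2;8;6;10]];
 [::[::0;1;2;3;4;5;6;7;8;9;10;11;12];[::9;0;5;11;7;3;8;1;4;6;12;10;2];[::4;7;0;12;1;11;6;8;2;9;3;10;5];[::10;7;1;9;6;2;12;5;8;4;11;3;0]];
 [::[::0;1;2;3;4;5;6;7;8;9;10;11;12];[::11;1;5;7;10;6;12;0;4;2;3;8;9];[::2;10;11;12;9;0;3;8;4;5;7;6;1];[::10;5;9;8;6;0;11;7;4;3;1;2;12]];
 [::[::0;1;2;3;4;5;6;7;8;9;10;11;12];[::10;1;8;2;7;12;3;6;9;0;11;4;5];[::6;2;9;1;11;12;10;7;0;4;5;3;8];[::10;3;7;4;0;9;8;12;5;11;1;6;2]];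
 [::[::0;1;2;3;4;5;6;7;8;9;10;11;12];[::3;9;4;2;7;5;11;12;10;6;1;8;0];[::9;2;11;7;3;5;10;8;12;4;0;6;1];[::12;1;6;8;11;10;7;0;5;9;4;3;2]];
 [::[::0;1;2;3;4;5;6;7;8;9;10;11;12];[::0;11;7;5;10;12;6;2;4;9;8;3;1];[::3;9;10;8;5;1;6;0;12;7;2;4;11];[::1;9;7;10;11;3;5;2;8;12;0;4;6]];
 [::[::0;1;2;3;4;5;6;7;8;9;10;11;12];[::10;12;3;6;4;2;11;9;1;0;7;5;8];[::0;12;8;6;1;7;9;10;3;2;11;5;4];[::0;6;11;1;12;9;4;8;10;7;5;2;3]];
 [::[::0;1;2;3;4;5;6;7;8;9;10;11;12];[::2;11;12;9;5;1;7;0;10;8;6;4;3];[::12;2;9;6;10;1;11;7;4;0;3;8;5];[::11;9;0;2;6;3;12;5;8;4;10;7;1]];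
 [::[::0;1;2;3;4;5;6;7;8;9;10;11;12];[::9;1;3;10;6;11;4;12;5;0;7;2;8];[::9;7;4;8;10;0;3;6;2;12;1;11;5];[::7;5;10;4;1;12;0;9;11;2;6;3;8]];
 [::[::0;1;2;3;4;5;6;7;8;9;10;11;12];[::0;3;1;4;12;11;8;5;7;6;2;10;9];[::5;2;6;1;10;0;11;9;12;7;3;4;8];[::6;10;9;8;12;3;11;2;0;4;1;7;5]];
 [::[::0;1;2;3;4;5;6;7;8;9;10;11;12];[::9;8;4;0;2;11;10;5;7;1;12;3;6];[::2;12;11;3;0;7;1;10;6;5;8;4;9];[::0;5;11;4;2;7;12;10;9;8;1;3;6]];
 [::[::0;1;2;3;4;5;6;7;8;9;10;11;12];[::9;2;4;7;12;8;5;3;10;1;11;6;0];[::12;10;6;3;0;4;11;8;2;7;9;1;5];[::5;0;12;3;1;4;10;2;7;8;11;9;6]];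
 [::[::0;1;2;3;4;5;6;7;8;9;10;11;12];[::1;10;5;2;0;6;8;11;7;12;4;3;9];[::11;12;2;6;10;4;8;5;3;7;9;1;0];[::1;11;2;8;9;3;0;7;5;10;12;4;6]];
 [::[::0;1;2;3;4;5;6;7;8;9;10;11;12];[::8;4;1;3;7;5;9;2;6;11;0;10;12];[::7;1;11;12;6;3;9;4;10;5;8;0;2];[::0;4;12;5;8;1;10;11;7;6;3;2;9]];
 [::[::0;1;2;3;4;5;6;7;8;9;10;11;12];[::10;11;3;8;5;0;9;4;2;7;12;1;6];[::10;7;0;6;12;9;11;5;3;1;4;2;8];[::3;9;10;12;2;6;8;1;7;11;5;4;0]];
 [::[::0;1;2;3;4;5;6;7;8;9;10;11;12];[::6;11;7;3;12;5;0;2;9;4;8;10;1];[::10;9;4;2;5;3;1;7;12;11;0;8;6];[::4;8;1;12;9;11;10;0;6;5;3;2;7]];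
 [::[::0;1;2;3;4;5;6;7;8;9;10;11;12];[::4;10;9;7;3;5;1;6;0;2;8;12;11];[::0;2;8;9;4;11;1;10;12;5;3;6;7];[::7;4;1;12;11;9;3;10;2;0;8;5;6]];
 [::[::0;1;2;3;4;5;6;7;8;9;10;11;12];[::2;7;11;10;3;12;4;1;9;8;5;0;6];[::10;6;0;7;3;9;5;8;2;4;1;12;11];[::4;0;9;8;10;5;1;12;11;2;7;3;6]];
 [::[::0;1;2;3;4;5;6;7;8;9;10;11;12];[::3;7;4;0;9;11;1;10;8;5;12;2;6];[::3;6;11;7;2;9;12;8;1;4;10;0;5];[::4;11;3;12;1;6;0;2;8;10;7;9;5]];
 [::[::0;1;2;3;4;5;6;7;8;9;10;11;12];[::8;9;7;1;4;10;3;6;2;5;11;0;12];[::11;0;4;6;9;2;5;7;10;3;1;8;12];[::11;3;5;1;6;0;10;2;4;12;7;8;9]];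
 [::[::0;1;2;3;4;5;6;7;8;9;10;11;12];[::2;4;11;0;9;12;1;5;10;8;7;6;3];[::1;8;3;10;0;12;2;9;7;6;5;4;11];[::6;3;12;11;7;4;9;8;10;0;2;1;5]];
 [::[::0;1;2;3;4;5;6;7;8;9;10;11;12];[::10;4;1;9;3;7;11;6;2;8;0;12;5];[::1;12;6;9;10;0;3;8;5;11;4;2;7];[::5;0;12;11;8;4;6;3;10;7;9;2;1]];
 [::[::0;1;2;3;4;5;6;7;8;9;10;11;12];[::5;0;6;2;7;10;8;12;1;9;3;11;4];[::2;4;8;1;3;10;6;9;11;0;5;12;7];[::8;11;6;12;10;5;2;0;3;7;1;4;9]];
 [::[::0;1;2;3;4;5;6;7;8;9;10;11;12];[::1;11;9;6;3;7;12;4;10;8;5;0;2];[::7;10;9;4;8;5;3;12;0;11;2;6;1];[::5;11;0;4;6;10;2;8;12;7;9;1;3]];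
 [::[::0;1;2;3;4;5;6;7;8;9;10;11;12];[::9;7;3;5;8;10;1;4;6;0;11;12;2];[::10;6;8;12;2;7;11;0;9;3;5;1;4];[::3;10;7;12;1;11;9;5;0;2;8;4;6]];
 [::[::0;1;2;3;4;5;6;7;8;9;10;11;12];[::4;0;3;7;5;12;11;9;6;2;1;8;10];[::6;11;5;10;9;7;12;4;8;3;2;1;0];[::1;3;5;0;7;2;8;10;12;6;11;4;9]];
 [::[::0;1;2;3;4;5;6;7;8;9;10;11;12];[::9;4;0;6;2;5;10;8;3;12;11;7;1];[::9;0;2;8;11;6;3;5;7;1;12;10;4];[::9;1;8;12;6;10;3;11;2;7;5;4;0]];
 [::[::0;1;2;3;4;5;6;7;8;9;10;11;12];[::12;8;9;10;11;5;2;0;4;6;1;3;7];[::0;3;5;10;6;11;8;4;9;7;12;1;2];[::8;1;6;0;7;11;9;12;10;3;2;4;5]];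
 [::[::0;1;2;3;4;5;6;7;8;9;10;11;12];[::3;8;5;10;0;4;7;9;11;6;2;1;12];[::1;10;2;0;9;6;8;11;7;4;5;3;12];[::11;6;2;8;4;9;1;5;0;7;3;10;12]];
 [::[::0;1;2;3;4;5;6;7;8;9;10;11;12];[::2;4;6;12;11;10;3;0;9;8;7;5;1];[::7;9;8;5;0;2;12;3;1;11;4;10;6];[::8;4;1;5;7;11;6;9;10;12;0;2;3]];
 [::[::0;1;2;3;4;5;6;7;8;9;10;11;12];[::10;0;4;8;2;11;9;1;3;5;6;12;7];[::6;0;12;9;5;8;10;7;11;1;4;3;2];[::9;6;1;11;5;10;4;12;2;3;8;0;7]];
 [::[::0;1;2;3;4;5;6;7;8;9;10;11;12];[::12;6;8;11;9;3;7;0;4;10;5;2;1];[::2;4;10;9;8;5;12;3;6;7;1;0;11];[::9;4;1;7;2;11;0;10;12;3;5;8;6]];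
 [::[::0;1;2;3;4;5;6;7;8;9;10;11;12];[::9;8;11;12;0;6;1;4;10;7;5;2;3];[::8;5;7;2;0;9;1;12;3;10;11;6;4];[::3;11;5;10;2;6;4;7;9;12;0;1;8]];
 [::[::0;1;2;3;4;5;6;7;8;9;10;11;12];[::12;2;5;7;11;6;1;9;8;10;0;3;4];[::5;12;0;7;3;8;4;11;9;1;10;6;2];[::0;4;6;2;9;12;11;8;5;10;7;3;1]];
 [::[::0;1;2;3;4;5;6;7;8;9;10;11;12];[::1;4;2;12;6;9;3;11;8;7;10;0;5];[::11;1;3;12;4;6;2;5;7;10;9;8;0];[::10;7;9;12;5;8;2;0;11;4;3;1;6]];
 [::[::0;1;2;3;4;5;6;7;8;9;10;11;12];[::7;2;0;10;5;12;11;8;9;3;1;4;6];[::6;0;5;1;7;4;2;10;3;12;8;9;11];[::4;12;3;9;1;6;8;5;11;10;7;0;2]];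
 [::[::0;1;2;3;4;5;6;7;8;9;10;11;12];[::2;8;4;10;1;3;7;5;9;12;6;11;0];[::11;3;10;6;9;1;12;8;5;2;4;7;0];[::4;9;8;11;10;5;1;7;12;0;3;2;6]];
 [::[::0;1;2;3;4;5;6;7;8;9;10;11;12];[::4;0;11;12;3;9;2;10;8;1;7;6;5];[::12;6;10;11;2;7;1;5;9;4;0;8;3];[::6;4;11;7;10;1;12;5;3;0;9;2;8]];
 [::[::0;1;2;3;4;5;6;7;8;9;10;11;12];[::11;4;1;5;10;3;8;2;9;12;6;7;0];[::10;8;5;3;9;4;2;12;0;6;11;1;7];[::7;12;5;11;2;0;3;6;9;10;4;1;8]];
 [::[::0;1;2;3;4;5;6;7;8;9;10;11;12];[::4;8;10;3;5;2;9;1;7;11;12;6;0];[::12;4;11;2;7;0;9;3;6;1;10;5;8];[::10;5;11;8;3;7;12;2;0;4;1;9;6]];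
 [::[::0;1;2;3;4;5;6;7;8;9;10;11;12];[::9;5;7;0;6;8;4;11;3;1;12;10;2];[::4;12;2;0;3;10;11;8;9;7;6;1;5];[::5;3;6;4;2;7;10;0;12;8;11;1;9]];
 [::[::0;1;2;3;4;5;6;7;8;9;10;11;12];[::6;4;11;2;5;0;12;1;10;9;7;8;3];[::12;11;3;1;7;0;10;5;8;6;4;9;2];[::7;5;12;2;8;11;10;4;9;6;0;1;3]];
 [::[::0;1;2;3;4;5;6;7;8;9;10;11;12];[::0;7;2;4;1;8;3;6;10;9;5;12;11];[::11;4;10;9;1;5;0;3;7;2;8;6;12];[::6;9;5;3;10;12;4;0;2;1;8;7;11]];
 [::[::0;1;2;3;4;5;6;7;8;9;10;11;12];[::2;5;7;12;4;6;1;8;11;0;3;10;9];[::11;5;9;1;12;6;8;10;4;0;2;3;7];[::12;0;6;9;3;10;11;7;2;4;1;5;8]];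
 [::[::0;1;2;3;4;5;6;7;8;9;10;11;12];[::6;2;5;8;11;1;12;7;9;10;4;0;3];[::2;8;3;7;0;6;10;12;9;5;11;4;1];[::11;2;10;5;9;8;1;4;6;0;12;3;7]];
 [::[::0;1;2;3;4;5;6;7;8;9;10;11;12];[::2;6;12;1;4;7;3;5;11;0;9;8;10];[::7;11;3;1;10;6;4;9;5;0;2;12;8];[::3;8;1;5;12;2;7;0;10;6;11;9;4]];
 [::[::0;1;2;3;4;5;6;7;8;9;10;11;12];[::7;0;12;1;6;9;5;10;3;4;8;11;2];[::10;0;9;12;8;2;7;5;11;6;4;3;1];[::1;10;8;9;2;5;3;11;7;4;0;6;12]];
 [::[::0;1;2;3;4;5;6;7;8;9;10;11;12];[::11;2;0;9;10;5;12;7;1;4;6;8;3];[::9;5;3;10;8;6;4;12;2;1;11;7;0];[::3;0;12;6;11;4;1;9;7;8;10;5;2]];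
 [::[::0;1;2;3;4;5;6;7;8;9;10;11;12];[::7;5;10;8;12;11;0;9;1;6;2;4;3];[::12;9;3;11;10;2;0;4;7;5;8;1;6];[::3;7;10;4;9;8;6;12;1;11;2;5;0]];
 [::[::0;1;2;3;4;5;6;7;8;9;10;11;12];[::10;9;4;6;1;5;7;11;12;0;3;2;8];[::6;9;5;8;2;11;1;12;0;7;4;3;10];[::7;4;1;9;0;10;6;12;2;5;8;11;3]];
 [::[::0;1;2;3;4;5;6;7;8;9;10;11;12];[::8;10;7;12;9;6;1;4;11;2;3;5;0];[::9;1;10;4;6;0;12;5;8;3;7;11;2];[::1;8;12;2;10;9;4;7;11;3;5;6;0]];
 [::[::0;1;2;3;4;5;6;7;8;9;10;11;12];[::1;9;2;8;4;10;3;5;11;0;12;7;6];[::2;12;9;7;11;8;1;5;0;6;10;3;4];[::11;10;12;8;3;0;9;6;4;7;2;1;5]];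
 [::[::0;1;2;3;4;5;6;7;8;9;10;11;12];[::5;8;1;3;0;11;4;9;7;6;12;10;2];[::9;3;12;0;10;7;4;2;6;5;1;8;11];[::10;1;12;2;5;9;0;6;3;7;8;4;11]];
 [::[::0;1;2;3;4;5;6;7;8;9;10;11;12];[::4;10;7;2;11;5;12;3;6;0;8;1;9];[::4;1;9;6;8;3;5;10;11;7;12;0;2];[::3;0;9;11;12;8;2;6;1;5;7;4;10]];
 [::[::0;1;2;3;4;5;6;7;8;9;10;11;12];[::6;1;11;3;9;12;2;4;0;8;7;10;5];[::0;9;10;4;8;1;3;7;12;2;5;6;11];[::4;7;9;2;11;5;12;8;6;0;1;3;10]];
 [::[::0;1;2;3;4;5;6;7;8;9;10;11;12];[::2;4;9;10;11;5;7;1;12;0;8;3;6];[::0;6;10;8;9;7;11;1;3;5;4;2;12];[::12;7;4;6;2;10;1;9;0;3;5;8;11]];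
 [::[::0;1;2;3;4;5;6;7;8;9;10;11;12];[::10;4;1;7;0;11;8;5;12;9;6;3;2];[::11;2;12;3;0;4;7;9;1;10;5;8;6];[::2;8;1;12;7;10;3;6;0;5;9;11;4]];
 [::[::0;1;2;3;4;5;6;7;8;9;10;11;12];[::2;9;5;3;8;10;11;1;6;12;4;7;0];[::11;9;12;5;2;4;1;7;0;3;10;6;8];[::10;5;7;4;12;0;6;9;3;1;8;2;11]];
 [::[::0;1;2;3;4;5;6;7;8;9;10;11;12];[::5;0;7;1;6;11;2;4;9;12;10;8;3];[::7;2;0;9;10;12;3;8;4;11;5;1;6];[::6;9;1;3;11;7;10;0;12;2;8;5;4]];
 [::[::0;1;2;3;4;5;6;7;8;9;10;11;12];[::12;4;1;6;11;0;2;5;8;10;7;3;9];[::12;9;7;1;11;2;10;3;5;8;6;4;0];[::3;12;0;7;2;4;11;9;8;5;1;6;10]];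
 [::[::0;1;2;3;4;5;6;7;8;9;10;11;12];[::7;12;2;11;4;6;9;1;3;10;0;8;5];[::6;2;8;9;7;5;0;4;12;10;11;1;3];[::3;8;12;10;4;9;5;1;11;0;6;7;2]];
 [::[::0;1;2;3;4;5;6;7;8;9;10;11;12];[::2;12;9;6;8;4;1;7;11;3;0;10;5];[::12;5;3;1;6;0;2;9;8;11;10;7;4];[::6;4;11;5;2;7;3;0;10;8;9;12;1]];
 [::[::0;1;2;3;4;5;6;7;8;9;10;11;12];[::9;12;10;0;4;11;5;1;8;6;3;7;2];[::8;6;2;5;9;1;11;10;4;3;12;7;0];[::11;9;7;12;1;6;10;5;0;8;2;3;4]];
 [::[::0;1;2;3;4;5;6;7;8;9;10;11;12];[::6;2;11;7;0;12;10;1;3;9;5;8;4];[::1;8;11;10;2;0;9;6;4;5;12;7;3];[::11;0;6;1;5;7;9;8;12;4;2;3;10]];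
 [::[::0;1;2;3;4;5;6;7;8;9;10;11;12];[::5;0;9;8;2;7;10;11;1;6;4;3;12];[::3;1;10;12;2;9;11;6;8;4;5;0;7];[::5;2;10;6;1;12;9;4;11;7;0;8;3]];
 [::[::0;1;2;3;4;5;6;7;8;9;10;11;12];[::4;6;10;1;8;9;11;3;12;0;5;7;2];[::1;7;2;12;10;9;4;0;5;11;8;6;3];[::2;5;3;6;12;11;10;7;0;1;9;4;8]];
 [::[::0;1;2;3;4;5;6;7;8;9;10;11;12];[::7;12;3;11;8;4;6;2;10;5;0;9;1];[::9;10;4;12;1;6;0;7;2;5;8;3;11];[::0;3;7;5;11;2;8;1;10;6;12;9;4]];
 [::[::0;1;2;3;4;5;6;7;8;9;10;11;12];[::12;9;4;0;11;6;2;10;8;1;3;7;5];[::7;3;9;2;8;6;1;5;0;10;11;12;4];[::9;7;2;0;12;11;1;10;5;8;6;4;3]];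
 [::[::0;1;2;3;4;5;6;7;8;9;10;11;12];[::1;3;11;2;5;12;6;0;7;4;9;8;10];[::0;9;4;12;11;6;8;10;5;3;7;2;1];[::2;9;10;0;12;3;7;11;8;4;1;6;5]];
 [::[::0;1;2;3;4;5;6;7;8;9;10;11;12];[::9;8;3;11;1;4;7;10;5;12;6;2;0];[::10;6;0;9;1;8;5;2;4;3;12;7;11];[::11;4;12;8;6;1;7;9;2;3;5;0;10]];
 [::[::0;1;2;3;4;5;6;7;8;9;10;11;12];[::6;8;5;7;9;1;10;0;12;2;4;3;11];[::2;7;3;9;12;10;6;1;11;0;4;5;8];[::12;11;10;2;8;4;6;0;5;3;9;7;1]];
 [::[::0;1;2;3;4;5;6;7;8;9;10;11;12];[::3;9;5;7;10;12;4;6;1;8;0;2;11];[::9;0;7;11;8;10;3;6;2;12;4;5;1];[::4;2;5;8;3;12;1;11;0;10;7;6;9]];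
 [::[::0;1;2;3;4;5;6;7;8;9;10;11;12];[::7;5;11;6;0;4;12;3;9;10;8;1;2];[::3;1;7;2;9;4;10;8;5;12;11;0;6];[::5;1;11;2;12;7;0;10;9;6;3;8;4]];
 [::[::0;1;2;3;4;5;6;7;8;9;10;11;12];[::3;10;8;2;5;7;11;6;0;1;12;9;4];[::11;3;5;12;2;4;9;10;1;8;7;0;6];[::12;3;9;1;5;10;7;4;6;11;2;0;8]];
 [::[::0;1;2;3;4;5;6;7;8;9;10;11;12];[::11;4;9;6;12;8;3;1;7;0;10;5;2];[::4;7;2;0;6;10;9;3;12;5;11;8;1];[::12;7;0;10;11;1;6;4;2;3;8;5;9]];
 [::[::0;1;2;3;4;5;6;7;8;9;10;11;12];[::9;5;10;0;2;8;4;6;12;1;11;7;3];[::1;12;2;10;7;11;6;8;3;0;9;5;4];[::10;9;0;4;2;6;3;7;1;11;5;8;12]];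
 [::[::0;1;2;3;4;5;6;7;8;9;10;11;12];[::12;6;4;11;10;3;1;9;8;7;5;2;0];[::7;1;10;2;12;0;6;11;5;4;3;9;8];[::0;3;9;12;5;1;6;8;10;11;2;7;4]];
 [::[::0;1;2;3;4;5;6;7;8;9;10;11;12];[::11;4;1;12;9;10;2;0;6;5;7;8;3];[::6;9;11;10;7;0;12;5;3;1;4;8;2];[::8;4;0;11;5;7;9;3;1;10;2;6;12]];
 [::[::0;1;2;3;4;5;6;7;8;9;10;11;12];[::12;2;4;6;0;3;7;10;9;8;5;11;1];[::9;11;6;10;3;12;4;1;8;5;2;0;7];[::3;6;2;7;11;10;4;8;5;12;1;0;9]];
 [::[::0;1;2;3;4;5;6;7;8;9;10;11;12];[::0;4;10;11;6;1;8;12;3;5;2;7;9];[::3;6;4;12;11;8;5;0;7;2;9;1;10];[::7;1;9;4;8;10;2;0;11;5;12;3;6]];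
 [::[::0;1;2;3;4;5;6;7;8;9;10;11;12];[::10;7;11;4;12;2;5;0;3;8;1;9;6];[::4;10;11;1;3;5;8;12;9;2;0;7;6];[::12;1;9;0;4;2;10;8;6;3;5;11;7]];
 [::[::0;1;2;3;4;5;6;7;8;9;10;11;12];[::9;4;1;6;0;11;10;3;5;12;2;7;8];[::11;9;10;0;4;8;1;3;12;2;5;7;6];[::0;3;7;11;6;10;4;2;12;5;1;9;8]];
 [::[::0;1;2;3;4;5;6;7;8;9;10;11;12];[::5;1;4;7;12;2;0;11;10;8;9;6;3];[::4;2;7;9;10;3;11;12;0;5;6;8;1];[::11;4;10;12;1;8;3;5;2;0;7;9;6]];
 [::[::0;1;2;3;4;5;6;7;8;9;10;11;12];[::4;12;3;7;0;9;5;2;8;10;11;1;6];[::4;10;3;0;6;12;1;11;7;8;2;5;9];[::2;9;1;7;10;8;6;11;0;3;12;5;4]];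
 [::[::0;1;2;3;4;5;6;7;8;9;10;11;12];[::3;1;7;2;10;4;9;8;6;5;12;11;0];[::0;7;9;2;4;6;10;1;12;3;11;5;8];[::10;7;12;3;0;4;11;1;9;8;6;5;2]];
 [::[::0;1;2;3;4;5;6;7;8;9;10;11;12];[::11;1;8;5;10;0;7;4;12;9;2;6;3];[::2;11;6;4;0;9;10;8;12;1;3;7;5];[::9;3;12;6;1;5;2;8;4;10;11;7;0]];
 [::[::0;1;2;3;4;5;6;7;8;9;10;11;12];[::7;0;12;9;4;8;2;6;1;3;10;11;5];[::12;10;1;9;5;8;6;0;2;4;11;3;7];[::3;5;7;12;1;4;10;11;9;0;6;2;8]];
 [::[::0;1;2;3;4;5;6;7;8;9;10;11;12];[::3;6;2;9;1;4;10;8;12;5;11;7;0];[::9;4;2;0;5;1;6;11;12;3;7;10;8];[::7;12;6;10;1;8;2;5;11;3;0;9;4]];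
 [::[::0;1;2;3;4;5;6;7;8;9;10;11;12];[::10;0;6;12;11;1;3;7;9;2;4;8;5];[::6;2;0;9;5;10;12;8;4;7;11;1;3];[::11;3;0;12;7;2;4;1;9;6;5;10;8]];
 [::[::0;1;2;3;4;5;6;7;8;9;10;11;12];[::4;11;7;2;5;10;3;8;9;1;12;6;0];[::11;3;0;6;4;2;12;9;1;5;7;8;10];[::0;9;10;11;12;6;1;5;7;4;8;3;2]];
 [::[::0;1;2;3;4;5;6;7;8;9;10;11;12];[::0;2;8;11;4;10;7;1;9;6;12;3;5];[::9;3;11;2;6;12;1;8;10;7;4;0;5];[::3;12;2;10;11;6;9;7;5;4;1;8;0]];
 [::[::0;1;2;3;4;5;6;7;8;9;10;11;12];[::9;3;7;12;4;6;2;5;0;11;10;1;8];[::2;12;5;9;10;4;8;3;11;0;7;1;6];[::1;5;3;10;12;0;11;9;7;2;4;6;8]];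
 [::[::0;1;2;3;4;5;6;7;8;9;10;11;12];[::5;12;3;10;9;7;0;4;2;11;8;1;6];[::0;12;10;1;4;8;9;2;11;6;5;3;7];[::3;9;11;4;10;2;7;12;1;0;5;8;6]];
 [::[::0;1;2;3;4;5;6;7;8;9;10;11;12];[::8;11;2;9;12;4;6;10;5;7;3;1;0];[::3;7;1;10;8;4;0;9;11;6;5;2;12];[::9;10;3;12;6;2;7;4;1;11;5;0;8]];
 [::[::0;1;2;3;4;5;6;7;8;9;10;11;12];[::1;9;7;5;0;2;6;3;10;12;4;8;11];[::1;7;12;9;5;10;4;11;8;3;0;6;2];[::4;1;6;8;9;3;11;2;12;10;0;7;5]];
 [::[::0;1;2;3;4;5;6;7;8;9;10;11;12];[::0;7;3;12;2;4;10;8;9;5;11;1;6];[::4;11;0;5;1;6;9;12;8;7;3;2;10];[::9;1;7;4;12;6;3;5;10;2;11;0;8]];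
 [::[::0;1;2;3;4;5;6;7;8;9;10;11;12];[::12;11;8;3;0;10;9;7;2;5;6;1;4];[::8;2;5;9;4;10;3;12;1;0;11;7;6];[::1;7;5;12;9;6;0;11;4;10;3;2;8]];
 [::[::0;1;2;3;4;5;6;7;8;9;10;11;12];[::0;12;8;3;6;9;1;10;7;2;5;4;11];[::9;4;8;10;2;5;12;7;11;1;0;3;6];[::3;12;9;10;4;11;6;2;0;8;5;1;7]];
 [::[::0;1;2;3;4;5;6;7;8;9;10;11;12];[::9;11;5;7;1;8;4;6;0;3;12;10;2];[::5;8;3;9;10;4;11;0;12;1;2;6;7];[::1;12;9;4;7;2;11;3;6;5;0;10;8]];
 [::[::0;1;2;3;4;5;6;7;8;9;10;11;12];[::10;0;5;12;8;11;7;1;4;6;9;3;2];[::10;5;1;8;4;0;2;9;11;3;12;6;7];[::9;6;2;4;11;12;7;3;8;1;5;10;0]];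
 [::[::0;1;2;3;4;5;6;7;8;9;10;11;12];[::11;3;12;6;1;8;10;0;9;7;2;5;4];[::4;6;9;2;5;11;1;12;0;3;10;8;7];[::4;9;3;1;10;12;11;0;2;5;7;6;8]];
 [::[::0;1;2;3;4;5;6;7;8;9;10;11;12];[::1;12;7;5;9;0;11;3;8;2;4;10;6];[::3;7;0;10;2;4;8;9;1;12;5;6;11];[::7;2;0;4;10;9;12;11;1;6;8;5;3]];
 [::[::0;1;2;3;4;5;6;7;8;9;10;11;12];[::10;9;7;3;5;2;8;1;6;4;0;11;12];[::7;11;12;8;9;3;10;0;4;2;6;5;1];[::11;2;4;1;5;0;3;12;10;8;6;7;9]];
 [::[::0;1;2;3;4;5;6;7;8;9;10;11;12];[::8;1;10;6;4;0;5;11;3;12;7;9;2];[::2;5;1;4;11;9;12;3;10;8;6;7;0];[::6;2;4;8;10;7;1;9;3;11;5;12;0]];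
 [::[::0;1;2;3;4;5;6;7;8;9;10;11;12];[::10;5;7;9;0;3;12;11;8;1;4;6;2];[::12;6;0;2;10;7;11;4;9;8;1;5;3];[::9;2;11;1;6;10;3;8;5;7;0;4;12]];
 [::[::0;1;2;3;4;5;6;7;8;9;10;11;12];[::1;6;3;12;2;5;10;0;7;11;8;4;9];[::6;9;12;1;11;10;8;4;0;7;5;3;2];[::7;12;11;2;4;10;9;8;5;1;6;0;3]];
 [::[::0;1;2;3;4;5;6;7;8;9;10;11;12];[::1;4;9;0;7;3;12;8;10;6;2;5;11];[::9;10;0;11;5;1;8;6;12;7;4;2;3];[::6;1;7;4;12;10;11;9;2;0;8;5;3]];
 [::[::0;1;2;3;4;5;6;7;8;9;10;11;12];[::4;0;2;5;10;8;12;9;6;1;11;7;3];[::10;12;5;0;11;8;3;1;4;2;6;7;9];[::10;11;3;5;1;12;2;9;0;6;7;8;4]];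
 [::[::0;1;2;3;4;5;6;7;8;9;10;11;12];[::4;7;2;12;5;0;6;1;9;10;8;11;3];[::9;0;4;10;6;2;11;7;5;12;3;1;8];[::6;3;7;9;10;12;1;4;11;5;8;2;0]];
 [::[::0;1;2;3;4;5;6;7;8;9;10;11;12];[::12;11;6;10;4;7;1;5;9;0;8;2;3];[::3;12;5;7;0;10;11;8;6;1;2;4;9];[::9;10;5;11;7;3;0;4;2;8;1;12;6]];
 [::[::0;1;2;3;4;5;6;7;8;9;10;11;12];[::6;12;0;7;1;10;4;2;8;9;11;5;3];[::4;8;5;1;3;9;12;10;6;2;0;7;11];[::1;9;8;3;5;2;0;11;4;6;12;7;10]];
 [::[::0;1;2;3;4;5;6;7;8;9;10;11;12];[::3;6;10;8;2;11;4;0;7;1;5;12;9];[::5;11;0;9;1;4;10;12;7;6;2;8;3];[::4;7;9;2;5;3;1;11;8;6;12;0;10]];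
 [::[::0;1;2;3;4;5;6;7;8;9;10;11;12];[::10;3;11;12;1;4;0;7;5;6;8;2;9];[::10;12;6;11;9;8;1;3;7;4;5;0;2];[::0;6;4;11;5;1;10;8;3;12;7;2;9]];
 [::[::0;1;2;3;4;5;6;7;8;9;10;11;12];[::4;2;8;9;7;5;10;6;11;0;12;3;1];[::3;5;12;1;7;0;6;4;9;2;11;10;8];[::11;0;4;1;3;7;2;9;5;12;8;10;6]];
 [::[::0;1;2;3;4;5;6;7;8;9;10;11;12];[::4;9;10;3;1;12;0;5;7;6;2;8;11];[::12;3;11;0;4;8;9;1;5;7;6;2;10];[::5;2;9;12;4;1;7;3;8;11;10;6;0]];
 [::[::0;1;2;3;4;5;6;7;8;9;10;11;12];[::0;4;12;9;5;10;2;11;7;1;8;6;3];[::5;0;9;7;10;1;12;6;8;4;3;11;2];[::2;12;0;10;8;3;9;11;4;1;5;7;6]];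
 [::[::0;1;2;3;4;5;6;7;8;9;10;11;12];[::12;9;8;1;4;11;6;10;3;2;0;7;5];[::8;2;0;9;10;4;7;12;11;5;6;1;3];[::4;12;1;10;11;2;5;7;0;3;9;8;6]];
 [::[::0;1;2;3;4;5;6;7;8;9;10;11;12];[::11;12;8;2;6;3;7;0;4;9;1;5;10];[::9;10;3;8;11;6;12;2;7;5;0;4;1];[::5;10;0;3;9;12;4;1;8;11;6;7;2]];
 [::[::0;1;2;3;4;5;6;7;8;9;10;11;12];[::10;0;4;8;9;11;7;5;2;1;12;3;6];[::12;10;9;6;11;0;3;1;5;7;8;4;2];[::8;6;3;9;4;2;11;12;1;5;7;0;10]];
 [::[::0;1;2;3;4;5;6;7;8;9;10;11;12];[::8;9;7;1;5;12;4;6;10;0;11;3;2];[::11;9;3;10;2;0;5;7;4;8;12;1;6];[::11;2;4;1;9;0;12;3;6;10;5;8;7]];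
 [::[::0;1;2;3;4;5;6;7;8;9;10;11;12];[::12;3;10;2;4;7;9;5;11;6;0;8;1];[::8;10;9;0;6;2;7;5;1;4;11;3;12];[::0;12;5;8;11;9;4;6;10;7;1;3;2]];
 [::[::0;1;2;3;4;5;6;7;8;9;10;11;12];[::0;5;11;6;8;2;9;1;7;10;3;4;12];[::8;9;4;7;5;10;6;1;11;3;12;2;0];[::6;0;12;11;9;3;8;10;4;7;2;5;1]];
 [::[::0;1;2;3;4;5;6;7;8;9;10;11;12];[::10;6;3;5;2;4;9;0;11;1;8;7;12];[::12;2;6;4;1;7;10;0;3;8;9;11;5];[::9;7;2;8;4;12;11;6;1;5;0;10;3]];
 [::[::0;1;2;3;4;5;6;7;8;9;10;11;12];[::4;7;0;10;3;1;6;11;12;2;5;8;9];[::9;8;10;4;1;11;0;6;12;3;5;7;2];[::7;12;3;9;6;8;4;2;11;10;5;1;0]];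
 [::[::0;1;2;3;4;5;6;7;8;9;10;11;12];[::10;5;11;4;0;7;3;12;9;2;6;1;8];[::6;12;5;1;11;8;2;9;3;7;10;4;0];[::9;4;7;1;8;10;12;0;6;5;3;11;2]];
 [::[::0;1;2;3;4;5;6;7;8;9;10;11;12];[::12;5;0;3;11;4;8;1;7;2;9;6;10];[::5;2;8;6;10;1;12;4;7;11;0;3;9];[::9;5;1;11;6;3;8;12;10;4;2;7;0]];
 [::[::0;1;2;3;4;5;6;7;8;9;10;11;12];[::10;3;0;2;6;9;11;8;5;4;7;1;12];[::1;7;11;0;10;6;3;9;5;12;2;8;4];[::8;9;1;4;11;10;7;0;12;6;3;5;2]];
 [::[::0;1;2;3;4;5;6;7;8;9;10;11;12];[::5;2;8;9;6;0;11;10;3;4;7;12;1];[::3;8;12;5;11;2;10;4;9;1;6;7;0];[::5;1;4;6;11;9;0;7;10;2;8;3;12]];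
 [::[::0;1;2;3;4;5;6;7;8;9;10;11;12];[::1;7;10;12;2;0;9;5;11;4;8;6;3];[::1;6;3;8;9;12;0;11;10;7;5;4;2];[::12;4;10;3;1;9;2;8;11;5;0;7;6]];
 [::[::0;1;2;3;4;5;6;7;8;9;10;11;12];[::9;2;7;4;10;5;12;6;1;3;8;0;11];[::5;8;2;12;7;11;4;6;9;3;0;1;10];[::6;10;11;9;3;12;4;2;0;1;7;8;5]];
 [::[::0;1;2;3;4;5;6;7;8;9;10;11;12];[::5;2;10;7;4;0;3;12;1;11;6;9;8];[::8;3;11;5;0;12;9;1;10;7;2;6;4];[::2;4;12;6;1;7;9;11;8;5;3;10;0]];
 [::[::0;1;2;3;4;5;6;7;8;9;10;11;12];[::5;3;11;2;10;6;1;9;0;12;7;4;8];[::5;2;9;11;10;12;3;0;7;1;6;8;4];[::6;3;7;1;5;9;12;11;8;2;4;10;0]];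
 [::[::0;1;2;3;4;5;6;7;8;9;10;11;12];[::1;5;8;2;10;3;6;9;4;7;11;12;0];[::12;3;5;2;4;10;8;6;0;9;1;11;7];[::11;10;5;9;2;6;4;12;8;3;7;1;0]];
 [::[::0;1;2;3;4;5;6;7;8;9;10;11;12];[::6;10;5;12;7;4;9;3;1;2;11;8;0];[::9;7;5;0;2;12;10;3;11;8;1;6;4];[::12;1;5;11;10;4;6;2;8;3;7;9;0]];
 [::[::0;1;2;3;4;5;6;7;8;9;10;11;12];[::12;4;8;1;5;9;6;10;2;0;7;11;3];[::1;12;8;11;5;3;10;4;7;2;6;0;9];[::5;7;9;3;1;4;2;11;12;6;10;0;8]];
 [::[::0;1;2;3;4;5;6;7;8;9;10;11;12];[::9;11;3;1;12;8;6;4;2;10;5;0;7];[::7;4;1;9;10;12;11;0;3;2;5;8;6];[::5;3;9;8;1;6;12;7;11;0;10;4;2]];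
 [::[::0;1;2;3;4;5;6;7;8;9;10;11;12];[::0;10;3;6;8;4;1;11;9;7;5;2;12];[::7;0;6;9;5;10;11;8;2;12;1;3;4];[::8;10;4;7;5;12;11;3;9;6;0;1;2]];
 [::[::0;1;2;3;4;5;6;7;8;9;10;11;12];[::7;2;8;10;12;6;3;11;5;4;0;9;1];[::1;3;0;11;10;2;9;12;5;4;7;8;6];[::0;7;10;9;6;8;4;1;12;11;3;2;5]];
 [::[::0;1;2;3;4;5;6;7;8;9;10;11;12];[::10;0;12;11;5;9;7;4;2;8;3;6;1];[::3;10;6;12;7;5;2;11;8;1;0;9;4];[::9;4;12;3;6;0;11;10;1;5;2;7;8]];
 [::[::0;1;2;3;4;5;6;7;8;9;10;11;12];[::12;4;6;11;8;1;7;0;9;5;2;10;3];[::6;2;12;0;5;10;4;8;9;7;1;3;11];[::1;12;7;5;8;2;11;3;10;4;9;6;0]];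
 [::[::0;1;2;3;4;5;6;7;8;9;10;11;12];[::2;11;7;5;12;6;8;9;0;1;3;4;10];[::0;10;12;11;1;4;6;9;3;7;8;5;2];[::5;2;12;0;6;10;7;4;9;3;11;1;8]];
 [::[::0;1;2;3;4;5;6;7;8;9;10;11;12];[::6;2;11;8;1;3;9;7;10;4;12;5;0];[::5;10;12;11;0;7;4;2;8;1;6;3;9];[::9;12;7;1;10;4;8;3;11;5;2;0;6]];
 [::[::0;1;2;3;4;5;6;7;8;9;10;11;12];[::6;12;1;3;8;9;5;0;2;7;11;4;10];[::11;7;4;9;10;0;6;8;5;1;12;3;2];[::11;2;7;0;12;5;1;6;10;3;9;4;8]];
 [::[::0;1;2;3;4;5;6;7;8;9;10;11;12];[::2;12;7;5;3;8;10;4;0;11;1;6;9];[::12;1;8;5;9;11;3;6;0;10;7;2;4];[::12;9;1;4;7;10;2;8;11;6;5;0;3]];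
 [::[::0;1;2;3;4;5;6;7;8;9;10;11;12];[::9;4;6;11;1;8;2;12;10;3;5;0;7];[::4;0;2;9;11;5;1;7;12;3;10;8;6];[::10;3;0;12;5;8;9;7;2;4;1;6;11]];
 [::[::0;1;2;3;4;5;6;7;8;9;10;11;12];[::5;9;4;2;6;8;12;11;10;7;0;3;1];[::8;3;6;10;7;4;0;2;11;1;9;5;12];[::9;12;10;2;7;1;11;5;3;6;8;4;0]];
 [::[::0;1;2;3;4;5;6;7;8;9;10;11;12];[::5;9;0;7;2;10;6;4;1;11;3;12;8];[::10;8;6;12;3;9;2;4;7;5;1;0;11];[::5;12;4;0;2;11;1;10;3;8;7;6;9]];
 [::[::0;1;2;3;4;5;6;7;8;9;10;11;12];[::10;3;12;8;4;6;2;9;11;0;7;5;1];[::11;4;7;10;5;2;12;6;8;0;3;1;9];[::3;0;11;2;7;12;9;1;8;4;6;10;5]];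
 [::[::0;1;2;3;4;5;6;7;8;9;10;11;12];[::7;10;0;11;5;3;9;12;4;1;8;2;6];[::9;1;10;11;12;6;8;4;0;3;2;5;7];[::10;6;0;2;7;1;11;3;8;5;9;12;4]];
 [::[::0;1;2;3;4;5;6;7;8;9;10;11;12];[::12;10;11;5;0;3;7;9;8;1;4;6;2];[::12;11;8;10;1;4;2;9;6;7;3;0;5];[::3;6;4;7;2;0;12;9;5;1;10;8;11]];
 [::[::0;1;2;3;4;5;6;7;8;9;10;11;12];[::12;1;11;0;9;8;5;10;3;6;4;2;7];[::11;3;6;0;7;5;12;4;10;2;8;1;9];[::10;7;4;8;11;12;9;3;1;2;0;5;6]];
 [::[::0;1;2;3;4;5;6;7;8;9;10;11;12];[::1;6;8;3;7;9;0;12;11;10;5;2;4];[::5;9;4;7;2;12;10;11;0;1;8;6;3];[::4;10;5;1;9;12;3;6;2;0;11;7;8]];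
 [::[::0;1;2;3;4;5;6;7;8;9;10;11;12];[::4;9;0;2;10;5;11;1;12;8;6;3;7];[::4;11;12;9;6;3;7;1;10;2;5;0;8];[::8;10;7;5;9;11;0;6;1;12;3;4;2]];
 [::[::0;1;2;3;4;5;6;7;8;9;10;11;12];[::7;0;9;6;2;12;5;10;11;4;8;3;1];[::1;7;3;9;5;11;0;10;8;12;2;6;4];[::8;9;11;2;4;1;12;3;6;5;0;7;10]];
 [::[::0;1;2;3;4;5;6;7;8;9;10;11;12];[::3;6;1;12;10;2;11;4;8;0;7;5;9];[::11;7;3;12;9;6;10;4;1;2;0;5;8];[::2;7;5;0;3;10;11;12;4;1;6;9;8]];
 [::[::0;1;2;3;4;5;6;7;8;9;10;11;12];[::0;6;1;9;12;4;10;3;7;5;8;11;2];[::8;11;5;12;6;3;9;4;2;7;1;10;0];[::8;5;0;4;6;10;2;11;12;3;1;7;9]];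
 [::[::0;1;2;3;4;5;6;7;8;9;10;11;12];[::6;9;5;1;10;8;4;11;2;0;7;12;3];[::12;8;9;7;3;10;0;2;5;11;4;6;1];[::11;10;2;7;4;12;1;3;9;6;0;5;8]];
 [::[::0;1;2;3;4;5;6;7;8;9;10;11;12];[::2;0;5;10;11;6;1;3;12;7;9;8;4];[::0;6;9;10;1;5;3;8;12;4;11;7;2];[::3;6;8;10;4;11;0;9;7;2;5;1;12]];
 [::[::0;1;2;3;4;5;6;7;8;9;10;11;12];[::8;2;7;3;9;5;11;4;12;6;10;1;0];[::1;10;12;7;0;9;8;3;11;5;2;6;4];[::6;0;4;1;9;2;10;7;11;3;12;8;5]];
 [::[::0;1;2;3;4;5;6;7;8;9;10;11;12];[::9;4;1;5;2;6;8;12;0;10;7;3;11];[::3;0;6;4;7;11;5;10;9;1;2;8;12];[::0;7;10;3;12;2;9;11;4;1;5;8;6]];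
 [::[::0;1;2;3;4;5;6;7;8;9;10;11;12];[::7;11;0;10;12;5;9;3;1;2;4;8;6];[::3;11;8;6;9;10;2;4;0;7;12;5;1];[::8;10;7;0;12;4;11;6;3;9;5;1;2]];
 [::[::0;1;2;3;4;5;6;7;8;9;10;11;12];[::11;12;10;3;6;0;9;1;5;2;7;4;8];[::5;9;11;10;0;2;6;4;12;8;1;7;3];[::12;3;9;7;0;11;1;10;6;8;2;4;5]];
 [::[::0;1;2;3;4;5;6;7;8;9;10;11;12];[::3;0;10;9;12;11;7;2;8;1;6;5;4];[::6;0;2;9;7;12;5;11;10;4;1;8;3];[::0;5;10;12;2;6;3;11;4;1;8;7;9]];
 [::[::0;1;2;3;4;5;6;7;8;9;10;11;12];[::8;1;4;6;3;10;9;12;11;2;7;5;0];[::7;3;11;1;12;0;9;8;2;6;10;5;4];[::5;1;9;6;10;12;2;11;0;8;7;4;3]];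
 [::[::0;1;2;3;4;5;6;7;8;9;10;11;12];[::6;4;9;5;1;3;11;0;2;7;10;8;12];[::5;0;9;6;3;7;4;1;10;12;11;2;8];[::6;0;10;7;11;1;8;5;12;2;3;9;4]];
 [::[::0;1;2;3;4;5;6;7;8;9;10;11;12];[::8;3;7;0;10;5;11;4;9;2;12;1;6];[::9;6;4;12;2;5;1;10;7;3;8;0;11];[::2;8;12;11;7;5;3;10;6;1;0;4;9]];
 [::[::0;1;2;3;4;5;6;7;8;9;10;11;12];[::11;5;10;2;0;3;7;1;9;6;4;12;8];[::2;11;1;3;6;12;0;9;7;10;4;5;8];[::6;0;7;5;8;4;12;10;11;3;2;1;9]];
 [::[::0;1;2;3;4;5;6;7;8;9;10;11;12];[::6;0;7;12;8;1;4;11;10;9;3;2;5];[::8;10;2;0;5;11;9;12;4;7;1;6;3];[::4;6;12;2;5;7;11;3;10;1;9;0;8]];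
 [::[::0;1;2;3;4;5;6;7;8;9;10;11;12];[::6;9;10;3;8;4;0;11;1;7;5;12;2];[::9;11;6;12;7;2;8;10;1;5;3;4;0];[::3;5;1;7;0;12;4;2;11;9;6;10;8]];
 [::[::0;1;2;3;4;5;6;7;8;9;10;11;12];[::1;6;8;12;7;2;0;11;4;10;3;9;5];[::5;2;9;12;3;8;1;7;0;10;6;4;11];[::2;10;12;4;6;0;9;5;11;3;8;1;7]];
 [::[::0;1;2;3;4;5;6;7;8;9;10;11;12];[::1;11;6;10;0;9;7;5;3;12;4;2;8];[::5;10;9;11;4;0;12;6;8;2;1;3;7];[::11;8;1;5;2;6;0;3;10;12;9;7;4]];
 [::[::0;1;2;3;4;5;6;7;8;9;10;11;12];[::2;11;8;6;9;3;10;1;12;0;5;4;7];[::7;0;9;12;8;5;11;6;4;10;1;3;2];[::12;0;4;11;9;2;7;5;3;6;8;10;1]];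
 [::[::0;1;2;3;4;5;6;7;8;9;10;11;12];[::9;5;12;3;8;10;7;0;11;4;6;2;1];[::11;3;7;5;0;9;1;10;6;4;8;2;12];[::4;2;8;6;12;11;1;3;10;0;9;5;7]];
 [::[::0;1;2;3;4;5;6;7;8;9;10;11;12];[::10;5;7;3;1;12;9;4;2;6;8;0;11];[::12;3;5;8;9;10;4;0;2;11;1;6;7];[::12;8;11;5;2;6;1;7;10;0;3;9;4]];
 [::[::0;1;2;3;4;5;6;7;8;9;10;11;12];[::9;5;3;8;12;4;10;6;1;2;0;11;7];[::7;10;3;11;0;12;9;6;2;4;5;8;1];[::7;1;5;2;8;11;9;10;0;6;4;3;12]];
 [::[::0;1;2;3;4;5;6;7;8;9;10;11;12];[::1;5;9;7;3;0;4;6;12;8;2;10;11];[::9;4;12;8;5;0;10;3;1;7;2;6;11];[::12;7;10;4;8;9;3;11;0;5;1;6;2]];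
 [::[::0;1;2;3;4;5;6;7;8;9;10;11;12];[::1;4;12;0;5;8;6;3;7;11;10;2;9];[::1;10;11;8;9;6;2;0;3;5;12;4;7];[::5;12;10;2;11;6;1;9;7;8;4;3;0]];
 [::[::0;1;2;3;4;5;6;7;8;9;10;11;12];[::11;5;0;2;7;10;4;8;1;12;6;3;9];[::8;5;1;6;4;7;12;10;11;3;9;0;2];[::10;9;12;4;1;3;0;11;6;2;7;5;8]];
 [::[::0;1;2;3;4;5;6;7;8;9;10;11;12];[::9;7;11;8;3;6;12;0;2;5;4;10;1];[::4;7;5;12;10;8;9;6;1;2;3;0;11];[::4;0;11;9;1;10;7;2;8;12;3;5;6]];
 [::[::0;1;2;3;4;5;6;7;8;9;10;11;12];[::9;1;12;6;11;2;10;4;8;7;3;5;0];[::1;8;5;2;7;0;3;10;6;12;11;4;9];[::4;1;10;11;3;8;2;12;0;9;6;7;5]];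
 [::[::0;1;2;3;4;5;6;7;8;9;10;11;12];[::3;9;4;0;5;10;1;6;8;11;12;7;2];[::2;8;1;3;10;12;4;7;0;11;9;6;5];[::5;12;1;4;2;6;10;0;11;7;9;8;3]];
 [::[::0;1;2;3;4;5;6;7;8;9;10;11;12];[::5;11;4;0;2;10;1;3;8;9;6;7;12];[::3;11;10;4;6;8;9;12;0;5;2;1;7];[::5;12;8;10;3;7;2;9;0;11;1;6;4]];
 [::[::0;1;2;3;4;5;6;7;8;9;10;11;12];[::6;12;9;3;10;11;0;7;2;1;4;5;8];[::8;9;5;3;11;7;10;2;4;12;0;6;1];[::12;1;5;0;9;7;3;6;11;10;8;2;4]];
 [::[::0;1;2;3;4;5;6;7;8;9;10;11;12];[::4;9;7;12;11;0;10;6;1;8;2;3;5];[::4;12;9;11;8;3;0;5;10;7;2;1;6];[::0;12;2;6;3;5;11;10;7;9;1;4;8]];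
 [::[::0;1;2;3;4;5;6;7;8;9;10;11;12];[::9;2;11;5;1;6;8;4;7;12;10;0;3];[::9;1;12;8;3;7;0;4;10;11;5;6;2];[::7;10;5;8;9;3;0;6;12;1;2;11;4]];
 [::[::0;1;2;3;4;5;6;7;8;9;10;11;12];[::9;5;2;12;4;7;3;8;10;6;1;0;11];[::3;0;11;8;2;10;4;9;12;1;6;7;5];[::11;3;5;7;2;4;8;9;6;0;1;10;12]];
 [::[::0;1;2;3;4;5;6;7;8;9;10;11;12];[::3;0;9;7;2;12;8;11;10;5;1;6;4];[::10;5;9;3;6;11;4;8;1;2;0;7;12];[::9;2;4;0;5;1;12;10;6;8;7;11;3]];
 [::[::0;1;2;3;4;5;6;7;8;9;10;11;12];[::0;3;10;11;6;12;9;2;7;5;1;4;8];[::12;2;10;0;9;4;7;3;8;6;1;11;5];[::2;11;9;1;7;10;12;3;5;8;4;6;0]];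
 [::[::0;1;2;3;4;5;6;7;8;9;10;11;12];[::7;11;2;9;0;6;8;3;10;12;1;5;4];[::10;4;6;1;7;9;5;8;12;0;3;11;2];[::11;5;0;3;12;6;9;10;1;7;8;4;2]];
 [::[::0;1;2;3;4;5;6;7;8;9;10;11;12];[::10;11;8;1;9;2;4;0;5;12;3;7;6];[::11;5;3;10;7;4;12;1;6;9;8;2;0];[::9;10;1;3;7;12;8;2;0;5;4;11;6]];
 [::[::0;1;2;3;4;5;6;7;8;9;10;11;12];[::8;9;2;12;4;0;10;7;11;3;1;5;6];[::0;5;9;1;8;12;11;10;3;2;6;4;7];[::1;6;10;5;3;8;4;2;11;0;7;9;12]];
 [::[::0;1;2;3;4;5;6;7;8;9;10;11;12];[::2;6;4;7;1;10;3;0;12;5;8;9;11];[::12;5;10;4;0;9;1;3;6;11;8;2;7];[::8;11;0;5;2;7;12;9;10;4;1;6;3]];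
 [::[::0;1;2;3;4;5;6;7;8;9;10;11;12];[::12;5;10;1;9;0;11;7;4;2;3;8;6];[::6;4;0;7;1;8;2;5;9;10;3;11;12];[::4;9;8;12;0;10;7;3;1;5;6;11;2]];
 [::[::0;1;2;3;4;5;6;7;8;9;10;11;12];[::12;4;10;6;8;11;5;0;3;2;7;9;1];[::4;2;10;12;9;8;5;7;11;1;0;6;3];[::9;7;12;2;8;10;3;5;1;0;11;6;4]];
 [::[::0;1;2;3;4;5;6;7;8;9;10;11;12];[::12;9;10;4;6;3;8;2;11;5;7;0;1];[::0;6;11;5;8;9;7;10;3;1;4;2;12];[::2;12;3;9;0;7;5;1;6;11;8;4;10]];
 [::[::0;1;2;3;4;5;6;7;8;9;10;11;12];[::9;12;1;5;10;0;3;8;6;11;4;7;2];[::9;11;0;4;6;1;7;12;5;8;10;3;2];[::5;7;2;11;1;3;6;10;8;4;0;12;9]];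
 [::[::0;1;2;3;4;5;6;7;8;9;10;11;12];[::7;11;8;6;9;2;12;10;1;3;4;5;0];[::11;10;2;8;9;3;6;0;12;7;1;4;5];[::12;6;2;5;7;3;10;4;1;11;9;0;8]];
 [::[::0;1;2;3;4;5;6;7;8;9;10;11;12];[::11;6;10;1;12;4;0;5;3;7;2;9;8];[::1;11;5;9;12;8;2;10;3;4;7;0;6];[::1;4;9;2;6;3;12;10;7;0;5;11;8]]].

Definition cands_13_10 : seq (seq (seq nat)) := [::
 [::[::0;1;2;3;4;5;6;7;8;9;10;11;12];[::6;12;1;4;11;7;2;10;5;0;9;8;3];[::1;6;9;4;2;12;0;10;8;5;7;3;11];[::0;11;8;12;3;7;9;1;10;4;5;2;6]];
 [::[::0;1;2;3;4;5;6;7;8;9;10;11;12];[::7;4;10;5;0;12;3;8;1;11;2;9;6];[::9;7;5;11;2;0;6;12;10;3;1;8;4];[::1;10;2;12;8;0;11;9;4;6;5;7;3]];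
 [::[::0;1;2;3;4;5;6;7;8;9;10;11;12];[::12;10;1;8;6;9;4;7;11;2;3;5;0];[::12;0;11;10;9;1;7;5;3;8;6;4;2];[::6;2;5;12;11;4;10;7;0;3;1;8;9]];
 [::[::0;1;2;3;4;5;6;7;8;9;10;11;12];[::5;9;2;8;10;1;11;3;6;0;12;4;7];[::4;9;6;8;3;1;7;5;12;11;0;2;10];[::2;5;11;6;12;0;8;1;4;10;3;7;9]];
 [::[::0;1;2;3;4;5;6;7;8;9;10;11;12];[::12;5;7;2;11;4;1;8;10;9;6;3;0];[::0;7;11;6;1;3;10;5;2;12;8;4;9];[::8;12;4;0;6;10;2;9;11;3;5;1;7]];
 [::[::0;1;2;3;4;5;6;7;8;9;10;11;12];[::7;3;11;12;8;2;4;1;6;0;10;9;5];[::6;4;12;9;3;5;7;1;11;8;10;2;0];[::0;12;2;7;11;6;9;5;8;4;10;3;1]];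
 [::[::0;1;2;3;4;5;6;7;8;9;10;11;12];[::5;8;1;10;3;0;6;4;7;9;2;12;11];[::0;5;12;10;8;6;1;9;3;11;4;2;7];[::3;6;9;11;12;7;5;10;4;8;0;2;1]];
 [::[::0;1;2;3;4;5;6;7;8;9;10;11;12];[::5;10;2;4;12;8;1;9;7;0;3;6;11];[::7;10;4;9;3;8;2;5;1;12;6;11;0];[::8;6;3;1;4;7;2;9;5;11;12;0;10]];
 [::[::0;1;2;3;4;5;6;7;8;9;10;11;12];[::11;5;12;8;0;7;10;1;9;2;4;3;6];[::4;0;11;9;7;1;6;3;10;8;2;5;12];[::11;1;5;2;0;6;9;4;7;12;3;10;8]];
 [::[::0;1;2;3;4;5;6;7;8;9;10;11;12];[::12;0;3;7;11;10;4;1;6;8;9;2;5];[::8;5;11;0;6;9;7;10;12;3;4;1;2];[::3;11;2;4;0;10;9;1;7;5;6;12;8]];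
 [::[::0;1;2;3;4;5;6;7;8;9;10;11;12];[::3;12;2;8;5;11;7;1;10;0;6;9;4];[::9;4;1;8;3;6;10;11;12;5;2;7;0];[::4;11;9;1;12;10;2;7;0;6;3;8;5]];
 [::[::0;1;2;3;4;5;6;7;8;9;10;11;12];[::1;3;7;10;8;0;12;5;9;4;6;11;2];[::11;1;9;10;5;7;4;8;3;0;2;6;12];[::10;4;6;1;5;8;2;9;3;12;0;7;11]];
 [::[::0;1;2;3;4;5;6;7;8;9;10;11;12];[::2;5;11;10;1;8;4;7;0;12;6;9;3];[::11;0;2;9;3;7;12;10;5;1;4;6;8];[::12;5;0;4;10;9;6;8;11;3;1;2;7]];
 [::[::0;1;2;3;4;5;6;7;8;9;10;11;12];[::7;4;12;9;2;5;0;8;3;11;1;10;6];[::11;1;9;6;4;0;7;3;12;10;5;8;2];[::9;10;3;1;6;12;11;8;2;7;5;0;4]];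
 [::[::0;1;2;3;4;5;6;7;8;9;10;11;12];[::0;7;2;5;10;4;6;12;3;11;9;1;8];[::8;5;7;3;6;2;4;9;1;11;12;0;10];[::12;4;1;5;11;2;0;6;10;9;7;3;8]];
 [::[::0;1;2;3;4;5;6;7;8;9;10;11;12];[::4;11;7;9;3;8;2;6;12;0;1;5;10];[::1;4;10;8;5;12;9;2;7;3;0;6;11];[::10;9;5;3;11;1;7;12;8;6;0;4;2]];
 [::[::0;1;2;3;4;5;6;7;8;9;10;11;12];[::0;3;9;1;8;10;11;4;6;12;5;7;2];[::10;0;5;8;6;11;7;4;2;9;3;1;12];[::11;5;2;0;6;3;7;10;4;1;8;9;12]];
 [::[::0;1;2;3;4;5;6;7;8;9;10;11;12];[::10;2;12;3;1;5;7;4;8;0;6;11;9];[::8;2;7;1;12;9;10;5;3;11;0;4;6];[::9;1;6;8;3;10;12;11;2;4;5;0;7]];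
 [::[::0;1;2;3;4;5;6;7;8;9;10;11;12];[::9;1;8;10;2;4;7;11;0;5;6;3;12];[::1;12;6;8;5;7;10;3;0;4;2;9;11];[::10;0;8;3;11;5;12;4;9;6;2;7;1]];
 [::[::0;1;2;3;4;5;6;7;8;9;10;11;12];[::5;7;0;11;8;4;10;2;9;12;6;3;1];[::6;4;1;9;3;7;10;11;2;0;5;8;12];[::6;8;3;5;11;7;4;0;12;1;10;2;9]];
 [::[::0;1;2;3;4;5;6;7;8;9;10;11;12];[::2;6;4;10;11;12;3;8;5;9;0;1;7];[::10;7;9;6;3;11;8;1;5;0;2;4;12];[::2;4;11;7;12;1;3;10;8;0;9;6;5]];
 [::[::0;1;2;3;4;5;6;7;8;9;10;11;12];[::8;6;4;12;3;1;11;10;0;2;5;7;9];[::0;6;10;3;8;12;11;5;9;4;1;7;2];[::0;3;6;11;8;4;1;7;2;12;10;9;5]];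
 [::[::0;1;2;3;4;5;6;7;8;9;10;11;12];[::2;12;8;0;5;10;1;9;3;6;7;4;11];[::0;10;6;11;8;2;7;4;9;12;1;3;5];[::9;11;12;1;7;3;8;10;4;6;2;0;5]];
 [::[::0;1;2;3;4;5;6;7;8;9;10;11;12];[::3;9;5;11;2;8;4;10;6;0;1;7;12];[::3;12;0;5;2;4;9;1;11;6;7;8;10];[::3;11;8;0;4;1;7;2;9;10;6;5;12]];
 [::[::0;1;2;3;4;5;6;7;8;9;10;11;12];[::2;4;0;3;1;5;10;11;12;7;8;6;9];[::3;8;6;0;2;12;10;7;4;11;1;5;9];[::11;5;9;10;3;6;12;1;4;8;0;7;2]];
 [::[::0;1;2;3;4;5;6;7;8;9;10;11;12];[::3;11;4;1;12;2;0;7;5;8;10;6;9];[::7;1;5;0;3;6;9;11;2;10;4;8;12];[::10;12;11;6;0;4;9;7;3;1;5;2;8]];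
 [::[::0;1;2;3;4;5;6;7;8;9;10;11;12];[::4;12;3;9;6;10;0;11;2;7;8;1;5];[::10;2;0;7;5;1;8;12;9;4;11;6;3];[::8;6;2;12;1;10;3;0;5;11;9;4;7]];
 [::[::0;1;2;3;4;5;6;7;8;9;10;11;12];[::10;3;1;12;0;6;4;2;9;11;8;7;5];[::3;12;5;11;8;1;4;0;7;9;6;10;2];[::5;3;6;1;11;4;12;7;10;0;2;9;8]];
 [::[::0;1;2;3;4;5;6;7;8;9;10;11;12];[::8;12;3;9;4;2;7;0;11;5;6;10;1];[::8;4;10;6;0;2;5;12;11;1;3;9;7];[::0;8;6;4;11;2;9;10;1;3;12;7;5]];
 [::[::0;1;2;3;4;5;6;7;8;9;10;11;12];[::6;1;11;9;3;8;2;12;5;10;0;4;7];[::3;10;2;4;12;1;7;0;8;11;5;6;9];[::9;10;7;11;4;8;5;3;0;12;1;6;2]];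
 [::[::0;1;2;3;4;5;6;7;8;9;10;11;12];[::9;3;12;2;10;5;11;1;8;4;0;6;7];[::5;8;3;6;0;11;9;2;7;12;1;4;10];[::1;6;4;2;11;12;0;10;7;5;9;3;8]];
 [::[::0;1;2;3;4;5;6;7;8;9;10;11;12];[::9;6;2;0;3;10;8;11;1;7;12;5;4];[::8;4;11;7;10;9;3;6;12;1;0;5;2];[::5;10;11;6;1;4;0;12;7;2;3;8;9]];
 [::[::0;1;2;3;4;5;6;7;8;9;10;11;12];[::5;1;6;9;10;2;8;11;12;7;0;3;4];[::1;7;3;11;6;12;10;8;0;4;9;5;2];[::4;8;12;3;1;11;9;2;6;10;7;0;5]];
 [::[::0;1;2;3;4;5;6;7;8;9;10;11;12];[::10;11;9;1;4;6;0;12;2;8;5;3;7];[::10;5;8;11;7;3;9;6;2;0;4;12;1];[::2;5;7;12;8;1;10;4;0;11;9;3;6]];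
 [::[::0;1;2;3;4;5;6;7;8;9;10;11;12];[::9;7;3;1;5;12;0;8;11;4;2;6;10];[::8;1;12;3;6;10;11;2;0;5;7;9;4];[::2;5;3;10;4;7;0;11;12;6;9;8;1]];
 [::[::0;1;2;3;4;5;6;7;8;9;10;11;12];[::7;12;5;8;11;6;4;1;10;9;2;3;0];[::3;0;5;9;11;12;10;6;2;7;4;1;8];[::5;2;9;12;8;0;11;7;1;3;6;4;10]];
 [::[::0;1;2;3;4;5;6;7;8;9;10;11;12];[::11;0;5;12;6;9;7;4;8;3;2;1;10];[::7;5;10;4;1;8;0;2;12;11;3;6;9];[::10;11;1;5;8;12;0;6;2;9;7;4;3]];
 [::[::0;1;2;3;4;5;6;7;8;9;10;11;12];[::3;11;5;2;4;6;9;1;12;7;10;8;0];[::8;0;6;11;12;9;7;4;10;2;3;5;1];[::4;12;3;10;6;8;5;1;7;0;11;2;9]];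
 [::[::0;1;2;3;4;5;6;7;8;9;10;11;12];[::6;3;11;4;8;12;2;5;9;10;1;0;7];[::3;0;7;9;12;5;8;11;2;10;1;6;4];[::9;3;12;7;4;6;11;0;10;1;2;5;8]];
 [::[::0;1;2;3;4;5;6;7;8;9;10;11;12];[::1;6;11;0;10;12;2;7;5;8;3;9;4];[::2;11;3;1;5;10;9;4;8;6;12;7;0];[::10;6;12;3;7;0;8;11;4;2;9;5;1]];
 [::[::0;1;2;3;4;5;6;7;8;9;10;11;12];[::0;7;10;6;11;8;5;9;12;3;1;2;4];[::10;11;2;6;4;8;0;12;1;5;7;3;9];[::1;9;4;11;7;12;10;3;6;8;2;5;0]];
 [::[::0;1;2;3;4;5;6;7;8;9;10;11;12];[::11;1;4;0;7;12;10;8;3;6;9;5;2];[::9;1;8;12;3;10;11;2;6;4;7;5;0];[::6;8;11;12;0;2;7;5;3;1;10;9;4]];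
 [::[::0;1;2;3;4;5;6;7;8;9;10;11;12];[::9;4;7;5;2;12;11;0;10;3;6;1;8];[::1;12;3;7;0;5;9;2;8;4;6;10;11];[::4;0;12;9;10;7;1;5;3;11;6;8;2]];
 [::[::0;1;2;3;4;5;6;7;8;9;10;11;12];[::11;9;2;10;4;12;0;5;8;1;3;6;7];[::12;11;7;4;0;6;1;3;9;10;2;8;5];[::3;8;12;6;9;7;5;1;10;0;2;4;11]];
 [::[::0;1;2;3;4;5;6;7;8;9;10;11;12];[::2;6;8;11;0;3;12;7;1;4;5;10;9];[::6;12;8;4;7;0;5;9;3;11;10;2;1];[::5;12;1;3;7;9;2;0;6;10;8;11;4]];
 [::[::0;1;2;3;4;5;6;7;8;9;10;11;12];[::10;6;9;12;3;11;7;1;8;5;2;4;0];[::7;5;11;0;3;1;6;4;10;9;2;12;8];[::4;11;6;2;10;1;9;5;0;7;8;12;3]];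
 [::[::0;1;2;3;4;5;6;7;8;9;10;11;12];[::7;0;11;5;10;1;3;9;2;4;6;8;12];[::3;12;5;1;7;10;8;0;4;11;2;6;9];[::1;11;7;5;2;6;8;3;10;9;0;4;12]];
 [::[::0;1;2;3;4;5;6;7;8;9;10;11;12];[::10;3;11;12;4;7;2;9;1;6;8;0;5];[::5;2;12;9;7;10;1;11;4;8;3;6;0];[::3;1;8;12;10;4;9;11;7;0;6;2;5]];
 [::[::0;1;2;3;4;5;6;7;8;9;10;11;12];[::1;4;8;6;0;11;12;5;9;7;3;10;2];[::7;5;11;4;9;12;3;1;10;0;6;2;8];[::4;7;3;10;11;2;9;1;8;0;5;12;6]];
 [::[::0;1;2;3;4;5;6;7;8;9;10;11;12];[::7;4;2;10;11;8;1;5;12;0;3;6;9];[::5;8;2;6;12;4;10;3;9;11;0;1;7];[::12;2;9;1;7;10;0;8;6;3;5;11;4]];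
 [::[::0;1;2;3;4;5;6;7;8;9;10;11;12];[::6;4;8;5;1;11;3;9;7;2;0;12;10];[::9;6;11;4;1;7;0;5;2;12;3;8;10];[::2;9;5;12;8;1;3;6;0;11;7;4;10]];
 [::[::0;1;2;3;4;5;6;7;8;9;10;11;12];[::8;3;10;6;12;11;9;2;7;0;5;4;1];[::12;5;2;8;4;10;11;1;7;3;9;6;0];[::5;10;12;0;11;6;2;4;9;1;8;3;7]];
 [::[::0;1;2;3;4;5;6;7;8;9;10;11;12];[::4;1;8;5;10;6;12;2;7;0;11;9;3];[::6;0;11;10;7;3;12;9;2;4;1;8;5];[::12;11;7;4;9;1;10;2;6;8;0;3;5]];
 [::[::0;1;2;3;4;5;6;7;8;9;10;11;12];[::0;10;9;5;11;2;12;4;7;3;8;6;1];[::8;12;3;6;1;7;5;2;10;11;9;0;4];[::7;2;6;8;1;5;12;11;4;10;0;9;3]];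
 [::[::0;1;2;3;4;5;6;7;8;9;10;11;12];[::0;10;2;7;3;11;8;6;9;12;1;5;4];[::12;6;0;8;1;5;11;4;10;7;9;2;3];[::2;11;10;8;4;12;1;9;3;5;7;0;6]];
 [::[::0;1;2;3;4;5;6;7;8;9;10;11;12];[::4;2;7;9;10;11;3;5;8;6;12;1;0];[::10;6;12;11;4;9;2;0;7;5;3;1;8];[::9;12;3;0;8;2;10;4;7;11;5;6;1]];
 [::[::0;1;2;3;4;5;6;7;8;9;10;11;12];[::10;4;11;0;6;8;1;9;2;5;12;3;7];[::10;2;11;1;3;6;4;0;7;12;8;5;9];[::7;4;9;11;8;3;12;0;10;1;5;2;6]];
 [::[::0;1;2;3;4;5;6;7;8;9;10;11;12];[::10;7;5;3;0;6;12;4;8;11;2;9;1];[::4;11;2;12;1;5;10;3;8;0;6;9;7];[::7;9;3;6;1;8;2;4;10;12;11;5;0]];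
 [::[::0;1;2;3;4;5;6;7;8;9;10;11;12];[::12;5;7;0;3;10;9;1;11;2;6;8;4];[::2;5;3;12;8;4;9;11;6;0;7;1;10];[::8;5;0;4;12;7;11;10;1;6;3;2;9]];
 [::[::0;1;2;3;4;5;6;7;8;9;10;11;12];[::9;5;12;11;4;6;0;2;7;3;1;8;10];[::2;9;11;0;3;1;10;8;12;4;5;6;7];[::12;7;5;3;6;8;1;4;10;9;2;0;11]];
 [::[::0;1;2;3;4;5;6;7;8;9;10;11;12];[::11;4;1;10;3;5;8;2;7;0;9;12;6];[::7;11;6;3;12;0;4;9;2;10;5;8;1];[::2;6;10;0;5;9;1;11;8;12;7;3;4]];
 [::[::0;1;2;3;4;5;6;7;8;9;10;11;12];[::6;9;11;7;5;12;2;10;3;8;0;4;1];[::6;10;4;0;7;2;8;1;9;3;5;12;11];[::3;7;12;10;9;4;8;0;11;5;2;6;1]];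
 [::[::0;1;2;3;4;5;6;7;8;9;10;11;12];[::3;7;9;2;10;0;11;6;4;1;8;5;12];[::9;5;12;10;4;11;7;2;0;6;3;1;8];[::9;3;11;8;12;4;0;7;5;10;2;6;1]];
 [::[::0;1;2;3;4;5;6;7;8;9;10;11;12];[::3;5;1;6;8;11;10;4;7;0;12;9;2];[::12;10;2;8;3;11;7;5;0;4;1;9;6];[::5;11;9;7;1;8;12;3;6;10;4;2;0]];
 [::[::0;1;2;3;4;5;6;7;8;9;10;11;12];[::4;0;3;7;11;1;5;2;9;10;12;6;8];[::3;10;2;11;0;7;4;6;12;8;1;5;9];[::11;3;5;7;2;12;10;1;6;8;0;4;9]];
 [::[::0;1;2;3;4;5;6;7;8;9;10;11;12];[::1;3;9;11;2;8;0;7;12;5;4;6;10];[::2;0;6;4;8;11;12;9;1;10;3;5;7];[::2;5;8;12;4;0;10;3;11;6;9;7;1]];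
 [::[::0;1;2;3;4;5;6;7;8;9;10;11;12];[::0;8;6;2;5;12;7;11;1;4;9;3;10];[::9;11;0;3;8;5;1;10;12;6;7;4;2];[::2;9;4;6;0;7;3;1;8;12;10;11;5]];
 [::[::0;1;2;3;4;5;6;7;8;9;10;11;12];[::0;6;12;7;2;10;1;3;11;4;9;8;5];[::10;3;12;11;9;7;5;2;6;8;1;0;4];[::4;12;1;11;5;9;3;0;8;2;10;7;6]];
 [::[::0;1;2;3;4;5;6;7;8;9;10;11;12];[::2;12;11;4;7;1;6;9;5;8;0;3;10];[::6;3;10;12;7;9;4;0;5;11;2;8;1];[::10;6;4;8;3;12;5;7;11;2;1;0;9]];
 [::[::0;1;2;3;4;5;6;7;8;9;10;11;12];[::8;4;10;7;9;6;12;11;3;0;2;5;1];[::8;1;4;0;12;9;5;2;11;10;7;6;3];[::9;1;3;10;12;7;11;4;6;2;5;8;0]];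
 [::[::0;1;2;3;4;5;6;7;8;9;10;11;12];[::3;0;8;2;6;11;1;12;5;7;4;10;9];[::8;11;7;12;4;9;5;0;2;10;3;6;1];[::6;1;4;7;0;10;5;8;3;9;2;12;11]];
 [::[::0;1;2;3;4;5;6;7;8;9;10;11;12];[::10;0;5;3;1;7;9;11;4;12;6;2;8];[::5;9;12;0;11;1;6;8;4;10;2;3;7];[::6;12;8;2;10;7;4;0;3;9;5;1;11]];
 [::[::0;1;2;3;4;5;6;7;8;9;10;11;12];[::8;12;3;6;2;5;9;1;10;0;4;7;11];[::5;3;10;7;12;9;11;0;6;8;1;2;4];[::6;12;10;9;7;5;1;4;8;11;3;0;2]];
 [::[::0;1;2;3;4;5;6;7;8;9;10;11;12];[::4;0;2;6;9;12;3;8;10;7;5;1;11];[::5;9;10;1;12;0;3;11;2;8;4;7;6];[::2;7;11;1;4;6;3;10;5;12;8;9;0]];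
 [::[::0;1;2;3;4;5;6;7;8;9;10;11;12];[::10;2;12;5;9;1;4;11;6;3;8;0;7];[::3;0;4;9;7;1;6;8;12;11;5;10;2];[::2;8;3;1;5;0;12;10;11;9;7;6;4]];
 [::[::0;1;2;3;4;5;6;7;8;9;10;11;12];[::5;11;1;9;2;6;10;0;12;7;8;3;4];[::6;0;8;11;4;10;1;3;5;9;12;7;2];[::3;11;9;10;2;7;1;4;12;8;6;0;5]];
 [::[::0;1;2;3;4;5;6;7;8;9;10;11;12];[::9;11;7;5;1;3;10;2;0;4;8;12;6];[::9;1;4;12;6;0;8;2;11;3;5;7;10];[::5;12;8;4;11;10;7;2;6;3;1;0;9]];
 [::[::0;1;2;3;4;5;6;7;8;9;10;11;12];[::2;5;1;4;12;6;9;10;7;11;3;0;8];[::2;8;4;9;5;11;1;10;0;12;3;7;6];[::7;12;11;4;6;8;5;3;1;9;10;0;2]];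
 [::[::0;1;2;3;4;5;6;7;8;9;10;11;12];[::6;10;12;4;8;1;3;7;0;11;5;9;2];[::4;0;3;6;9;10;2;11;7;1;5;12;8];[::4;11;8;6;0;5;12;3;9;2;10;1;7]];
 [::[::0;1;2;3;4;5;6;7;8;9;10;11;12];[::10;2;6;1;11;5;8;0;12;3;7;4;9];[::12;6;9;11;8;2;4;7;10;1;0;3;5];[::12;4;8;3;9;7;11;0;6;10;1;2;5]];
 [::[::0;1;2;3;4;5;6;7;8;9;10;11;12];[::11;7;3;12;0;6;2;5;8;1;9;4;10];[::10;1;12;9;6;3;0;2;4;7;5;8;11];[::12;8;0;10;2;7;9;4;6;11;5;3;1]];
 [::[::0;1;2;3;4;5;6;7;8;9;10;11;12];[::3;8;2;12;11;1;10;9;5;7;0;6;4];[::9;6;12;1;8;0;10;5;2;4;3;7;11];[::0;2;9;12;8;4;7;10;11;5;3;6;1]]].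

Definition cands_13_11 : seq (seq (seq nat)) := [::
 [::[::0;1;2;3;4;5;6;7;8;9;10;11;12];[::6;3;1;4;10;12;11;7;5;2;0;8;9];[::12;6;1;10;7;3;0;5;9;11;4;2;8];[::2;11;0;7;4;8;1;9;12;3;10;5;6]];
 [::[::0;1;2;3;4;5;6;7;8;9;10;11;12];[::11;9;0;5;7;12;3;8;1;6;10;2;4];[::5;8;2;7;4;6;11;1;10;3;9;0;12];[::7;10;8;0;4;12;6;9;2;11;3;1;5]];
 [::[::0;1;2;3;4;5;6;7;8;9;10;11;12];[::0;3;11;2;12;5;7;1;6;4;9;8;10];[::7;4;0;8;11;1;5;10;12;9;2;6;3];[::0;7;3;1;4;2;5;11;10;8;6;12;9]];
 [::[::0;1;2;3;4;5;6;7;8;9;10;11;12];[::6;10;3;11;12;2;4;0;7;5;8;9;1];[::4;7;2;9;11;8;1;3;0;12;10;6;5];[::8;3;6;1;5;2;10;11;7;9;0;4;12]];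
 [::[::0;1;2;3;4;5;6;7;8;9;10;11;12];[::1;11;2;9;7;3;8;10;5;0;6;12;4];[::12;1;9;6;3;10;2;5;11;0;4;8;7];[::0;2;6;4;11;7;5;8;1;3;12;9;10]];
 [::[::0;1;2;3;4;5;6;7;8;9;10;11;12];[::10;4;1;12;6;0;9;11;5;8;2;3;7];[::4;0;2;7;3;8;6;1;9;12;11;10;5];[::11;1;5;0;12;7;9;4;6;10;8;2;3]];
 [::[::0;1;2;3;4;5;6;7;8;9;10;11;12];[::1;4;10;6;2;11;9;7;3;5;12;0;8];[::10;2;8;6;3;0;4;12;11;7;1;9;5];[::2;9;1;8;3;11;5;10;12;7;0;6;4]];
 [::[::0;1;2;3;4;5;6;7;8;9;10;11;12];[::0;6;3;8;10;12;2;11;1;4;7;5;9];[::11;10;1;5;9;7;2;6;4;8;0;3;12];[::1;7;5;3;10;2;8;11;4;12;6;9;0]];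
 [::[::0;1;2;3;4;5;6;7;8;9;10;11;12];[::5;9;11;4;12;0;3;8;1;7;2;6;10];[::8;2;4;9;7;0;11;10;1;6;12;3;5];[::7;5;10;2;9;6;0;4;1;12;3;11;8]]].

Definition cands_13_12 : seq (seq (seq nat)) := [::
 [::[::0;1;2;3;4;5;6;7;8;9;10;11;12];[::12;5;10;6;1;9;3;7;4;2;8;0;11];[::11;2;7;12;4;0;5;1;3;8;6;9;10];[::12;1;4;9;0;6;11;7;10;3;5;2;8]]].

Definition candsOf (N L : nat) : seq (seq (seq nat)) :=
  match N, L with
  | 10, 9 => cands_10_9
  | 11, 9 => cands_11_9
  | 11, 10 => cands_11_10
  | 12, 9 => cands_12_9
  | 12, 10 => cands_12_10
  | 12, 11 => cands_12_11
  | 13, 9 => cands_13_9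
  | 13, 10 => cands_13_10
  | 13, 11 => cands_13_11
  | 13, 12 => cands_13_12
  | _, _ => [::]
  end.

Lemma all_ok : all (fun N => all (fun L => ccheck N L (candsOf N L)) (iota 9 (N - 9))) (iota 10 4) = true.
Proof. vm_cast_no_check (erefl true). Time Qed.


Lemma count_sub (T : eqType) (s1 s2 : seq T) :
  uniq s1 -> uniq s2 -> {subset s1 <= s2} -> count (mem s1) s2 = size s1.
Proof.
move=> H1 H2 Hs; rewrite -size_filter; apply/perm_size/uniq_perm => //.
  exact: filter_uniq.
by move=> x; rewrite mem_filter; apply/andP/idP => [[]|Hx] //; split => //; apply: Hs.
Qed.

Lemma mem_pairs N a b :
  ((a, b) \in [seq (x, y) | x <- iota 0 N, y <- iota 0 N]) = (a < N) && (b < N).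
Proof.
apply/allpairsP/andP => [[[x y] [Hx Hy [-> ->]]]|[Ha Hb]].
  by move: Hx Hy; rewrite !mem_iota.
by exists (a, b); rewrite !mem_iota.
Qed.

Lemma pairs_uniq N : uniq [seq (x, y) | x <- iota 0 N, y <- iota 0 N].
Proof. by apply: allpairs_uniq; rewrite ?iota_uniq // => [[? ?] [? ?]]. Qed.

Unset Implicit Arguments.

Theorem lemma4p1 (T : finType) (e : rel T) :
  simple_graph e ->
  10 <= #|T| <= 13 ->
  #|edge_set e| = #|T| - 1 ->
  ~ connected_graph e ->
  girth_ge e 9 ->
  placeable e 4.
Proof.
move=> [esym eirr] /andP [HN1 HN2] Hcard _ [[s Hs] Hg].
have HL := Hg s Hs; move: Hs => /and3P [Hsu _ Hsc]; clear Hg.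
case: s Hsu Hsc HL => [|x0 s'] // Hsu Hsc HL.
set s := x0 :: s' in Hsu Hsc HL.
set N := #|T| in HN1 HN2 Hcard *.
set L := size s in HL.
pose lst := s ++ [seq x <- enum T | x \notin s].
have Hlu : uniq lst.
  rewrite cat_uniq Hsu filter_uniq ?enum_uniq // andbT.
  by apply/hasPn => x; rewrite mem_filter => /andP [].
have Hlm : forall x, x \in lst by move=> x; rewrite mem_cat mem_filter mem_enum andbT orbN.
have Hls : size lst = N.
  rewrite /N cardE; apply/perm_size/uniq_perm => //; first exact: enum_uniq.
  by move=> x; rewrite Hlm mem_enum.
pose h x := index x lst.
pose g a := nth x0 lst a.
have Hh : forall x, h x < N by move=> x; rewrite -Hls index_mem.
have Hgh : forall x, g (h x) = x by move=> x; rewrite /g /h nth_index.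
have Hhg : forall a, a < N -> h (g a) = a by move=> a Ha; rewrite /g /h index_uniq // Hls.
have Hhi : injective h by move=> x y Exy; rewrite -(Hgh x) Exy Hgh.
have HLN : L <= N by rewrite -Hls size_cat leq_addr.
have Hgs : forall j, j < L -> g j = nth x0 s j by move=> j Hj; rewrite /g nth_cat Hj.
have Hpath : forall i, i < L ->
    e (nth x0 (rcons s x0) i) (nth x0 (rcons s' x0) i).
  by move=> i Hi; move: Hsc; rewrite /= => /(pathP x0) /(_ i); rewrite size_rcons; apply.
have Hadj : forall j, j.+1 < L -> e (g j) (g j.+1).
  move=> j Hj; rewrite !Hgs // ?(ltnW Hj) //.
  have Hj' : j < size s' by move: Hj; rewrite /L /= ltnS.
  have Hj2 : j < size s by rewrite /= ltnW.
  by have := Hpath j (ltnW Hj); rewrite !nth_rcons Hj' Hj2.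
have Hadj0 : e (g 0) (g L.-1).
  have HL0 : 0 < L by rewrite (leq_trans _ HL).
  rewrite !Hgs ?prednK // ?ltn_predL //.
  rewrite esym.
  have := Hpath L.-1; rewrite ltn_predL HL0 !nth_rcons /L /= ltnn eqxx ltnSn.
  by move=> /(_ isT).
pose Pset := [seq ab <- [seq (a, b) | a <- iota 0 N, b <- iota 0 N] |
               (ab.1 < ab.2) && e (g ab.1) (g ab.2)].
have HPu : uniq Pset by rewrite filter_uniq // pairs_uniq.
have HPmem : forall a b, ((a, b) \in Pset) = [&& a < b, b < N & e (g a) (g b)].
  move=> a b; rewrite mem_filter mem_pairs /=.
  by case: (ltnP a b) => Hab //=; case: (ltnP b N) => HbN //=;
     rewrite ?(ltn_trans Hab HbN) ?andbF ?andbT.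
have Hgi : forall a b, a < N -> b < N -> g a = g b -> a = b.
  by move=> a b Ha Hb E; rewrite -(Hhg a Ha) E Hhg.
have HE : size Pset = N - 1.
  rewrite -Hcard.
  pose m (ab : nat * nat) := [set g ab.1; g ab.2].
  have Hmu : uniq (map m Pset).
    rewrite map_inj_in_uniq // => [[a b] [c d]]; rewrite !HPmem.
    move=> /and3P [Hab HbN _] /and3P [Hcd HdN _] /set2_eqE [[E1 E2]|[E1 E2]].
      by rewrite (Hgi _ _ (ltn_trans Hab HbN) (ltn_trans Hcd HdN) E1) (Hgi _ _ HbN HdN E2).
    have := Hgi _ _ (ltn_trans Hab HbN) HdN E1; have := Hgi _ _ HbN (ltn_trans Hcd HdN) E2.
    lia.
  have Heq : edge_set e =i map m Pset.
    move=> S; apply/imset2P/mapP.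
      case=> x y _; rewrite inE => Hxy ->.
      case: (ltngtP (h x) (h y)) => Hab.
      - exists (h x, h y); first by rewrite HPmem Hab Hh !Hgh.
        by rewrite /m /= !Hgh.
      - exists (h y, h x); first by rewrite HPmem Hab Hh !Hgh esym.
        by rewrite /m /= !Hgh setUC.
      - by move: Hxy; rewrite (Hhi _ _ Hab) eirr.
    case=> [[a b]]; rewrite HPmem => /and3P [Hab HbN Habe] ->.
    by apply: (Imset2spec (x1 := g a) (x2 := g b)); rewrite ?inE.
  by rewrite (eq_card Heq); move/card_uniqP: Hmu; rewrite size_map.
have HL0 : 0 < L by rewrite (leq_trans _ HL).
have HcP : {subset cycE L <= Pset}.
  move=> ab; rewrite mem_cat => /orP [/mapP [j Hj ->]|]; last first.
    rewrite inE => /eqP ->; rewrite HPmem Hadj0 andbT.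
    by apply/andP; split; [rewrite -subn1 subn_gt0 (leq_trans _ HL) | rewrite (leq_trans _ HLN) // ltn_predL].
  move: Hj; rewrite mem_iota add0n => Hj.
  have Hj' : j.+1 < L by rewrite -(prednK HL0) ltnS.
  by rewrite HPmem ltnSn (leq_trans Hj' HLN) Hadj.
have Hcu : uniq (cycE L).
  rewrite cat_uniq map_inj_uniq ?iota_uniq //=; last by move=> ? ? [].
  rewrite andbT orbF; apply/mapP => [[j _ [E1 E2]]].
  by move: HL; rewrite /L /= E2 -E1.
have Hcs : size (cycE L) = L by rewrite size_cat size_map size_iota addn1 prednK.
pose F := [seq ab <- Pset | ab \notin cycE L].
have HFsz : L + size F = N - 1.
  rewrite -HE -(count_predC (mem (cycE L)) Pset) size_filter.
  by rewrite count_sub // Hcs.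
have HLlt : L < N by lia.
have HFs : size F = N.-1 - L by rewrite -subn1; lia.
have HFu : uniq F by rewrite filter_uniq.
have HFNC : {subset F <= NCE N L}.
  move=> [a b]; rewrite mem_filter => /andP [Hn]; rewrite HPmem => /and3P [Hab HbN _].
  by rewrite /NCE mem_filter mem_pairs /= Hn Hab HbN (ltn_trans Hab HbN).
pose NC := NCE N L.
have HNCu : uniq NC by rewrite filter_uniq // pairs_uniq.
pose c := [seq i <- iota 0 (size NC) | nth (0,0) NC i \in F].
have Hcsz : size c = size F.
  rewrite size_filter -(count_map (nth (0,0) NC) (mem F)).
  by rewrite -/(mkseq _ _) mkseq_nth count_sub.
have Hcomb : c \in combs (N.-1 - L) (iota 0 (size NC)).
  by rewrite -HFs -Hcsz; apply: combsP; apply: filter_subseq.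
have HcF : map (nth (0,0) NC) c =i F.
  move=> z; apply/mapP/idP => [[i]|Hz].
    by rewrite mem_filter => /andP [H _] ->.
  have HzN := HFNC _ Hz.
  exists (index z NC); last by rewrite nth_index.
  by rewrite mem_filter nth_index // Hz mem_iota /= index_mem.
have Hcc : ccheck N L (candsOf N L).
  move/allP: all_ok => /(_ N); rewrite mem_iota HN1 /= => /(_ (leq_ltn_trans HN2 (ltnSn _))).
  by move/allP => /(_ L); rewrite mem_iota HL /=; apply; lia.
have [ps Hps Hu] := ccheck_spec Hcc Hcomb.
apply: (place_from (h := h) Hhi Hh Hps Hu) => x y Hxy.
have HxyP : nrm (h x, h y) \in Pset.
  rewrite /nrm /=; case: (ltngtP (h x) (h y)) => Hab.
  - by rewrite HPmem Hab Hh !Hgh.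
  - by rewrite HPmem Hab Hh !Hgh esym.
  - by move: Hxy; rewrite (Hhi _ _ Hab) eirr.
rewrite mem_cat mem_rev HcF mem_filter HxyP andbT.
by case: (nrm _ \in cycE L).
Qed.
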